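(* The calculus $\vdash^{\mathsf{Ind}}$ is sound with respect to the standard semantics $\vDash$ (for every signature $\Sigma$ and sets $\Gamma,\Delta$ of $\Sigma$-sentences, $\Gamma\vdash^{\mathsf{Ind}}_\Sigma\Delta$ implies $\Gamma\vDash_\Sigma\Delta$), it is not complete with respect to $\vDash$, and it is compact: if $\Gamma\vdash^{\mathsf{Ind}}_\Sigma\Delta$, then there exist a finite subsignature $\iota:\Sigma_f\subseteq\Sigma$ and finite sets $\Gamma_f\subseteq\iota^{-1}(\Gamma)$, $\Delta_f\subseteq\iota^{-1}(\Delta)$ of $\Sigma_f$-sentences with $\Gamma_f\vdash^{\mathsf{Ind}}_{\Sigma_f}\Delta_f$.
   Context: Syntax. A signature $\Sigma=(S,F,L)$: sorts $S$, function symbols $F=(F_{w\to s})$, labels $L=(L_s)_{s\in S}$, pairwise disjoint. $\Sigma$-terms are ground terms over $(S,F)$. Actions of sort $s$: $\mathfrak{a}::=\lambda\ (\lambda\in L_s)\mid \mathbf{0}_s\mid\mathbf{1}_s\mid \mathfrak{a}\cup\mathfrak{a}\mid\mathfrak{a}\Rightarrow\mathfrak{a}\mid\mathfrak{a};\mathfrak{a}\mid\mathfrak{a}\triangleright\mathfrak{a}\mid\mathfrak{a}^*$. A block $X$ is a finite set of fresh first-order variables (of sorts $s$) and label variables (of sorts $s$); $\Sigma[X]$ adds them as constants of sort $s$ resp. labels in $L_s$. Sentences: $t_0=t_1$, $t_0\xrightarrow{\mathfrak{a}}t_1$, $\varphi\to\psi$, $\vee\Phi$, $\wedge\Phi$ ($\Phi$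 finite sequence), $\exists X\varphi$, $\forall X\varphi$. A substitution $\theta$ for $X$ maps first-order variables of sort $s$ to $\Sigma$-terms and label variables of sort $s$ to $\Sigma$-actions of sort $s$. Standard semantics. A $\Sigma$-model $\mathfrak{A}$ is an $(S,F)$-algebra with relations $\lambda^{\mathfrak{A}}\subseteq\mathfrak{A}_s\times\mathfrak{A}_s$ ($\lambda\in L_s$). Actions denote relations: $\mathbf{0}_s\mapsto\emptyset$, $\mathbf{1}_s\mapsto$ identity, $\cup\mapsto$ union, $\mathfrak{a}_0\Rightarrow\mathfrak{a}_1\mapsto(\mathfrak{a}_0^{\mathfrak{A}})^c\cup\mathfrak{a}_1^{\mathfrak{A}}$, $;\mapsto$ composition, $\mathfrak{a}_0\triangleright\mathfrak{a}_1\mapsto(\mathfrak{a}_0^{\mathfrak{A}})^{-1};\mathfrak{a}_1^{\mathfrak{A}}$, $\mathfrak{a}^*\mapsto$ reflexive-transitive closure of $\mathfrak{a}^{\mathfrak{A}}$. $\mathfrak{A}\models t_0\xrightarrow{\mathfrak{a}}t_1$ iff $(t_0^{\mathfrak{A}},t_1^{\mathfrak{A}})\in\mathfrak{a}^{\mathfrak{A}}$, equations and connectives as usual, $\exists X$/$\forall X$ over all expansions to $\Sigma[X]$ (label variables ranging over all binary relations). $\Gamma\vDash_\Sigma\Delta$ iff no $\Sigma$-model satisfies all of $\Gamma$ and none of $\Delta$. Calculus $\vdash^{\mathsf{Ind}}$: the least family of relations $\Gamma\vdash_\Sigma\Delta$ (side sets arbitrary, united in conclusions; side sets of premises over $\Sigma[X]$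 read as $\Sigma[X]$-sentences) closed under: (Atom) $\Gamma_b,\Gamma\vdash\Delta,\Delta_b$ for sets $\Gamma_b,\Delta_b$ of basic sentences (equations and $t_0\xrightarrow{\lambda}t_1$ with $\lambda$ a label symbol) related by the least relation closed under initial sequents $\varphi,\Gamma\vdash\Delta,\varphi$, reflexivity/symmetry/transitivity/congruence of $=$, and replacement of equals in $t_0\xrightarrow{\lambda}t_1$; the action rules: $t_0\xrightarrow{\mathbf{0}_s}t_1,\Gamma\vdash\Delta$; from $t_0\xrightarrow{\mathfrak{a}_i}t_1,\Gamma_i\vdash\Delta_i$ ($i=0,1$) infer $t_0\xrightarrow{\mathfrak{a}_0\cup\mathfrak{a}_1}t_1,\Gamma_0\Gamma_1\vdash\Delta_0\Delta_1$; from $\Gamma\vdash\Delta,t_0\xrightarrow{\mathfrak{a}_i}t_1$ infer $\Gamma\vdash\Delta,t_0\xrightarrow{\mathfrak{a}_0\cup\mathfrak{a}_1}t_1$; from $\Gamma_0\vdash\Delta_0,t_0\xrightarrow{\mathfrak{a}_0}t_1$ and $t_0\xrightarrow{\mathfrak{a}_1}t_1,\Gamma_1\vdash\Delta_1$ infer $t_0\xrightarrow{\mathfrak{a}_0\Rightarrow\mathfrak{a}_1}t_1,\Gamma_0\Gamma_1\vdash\Delta_0\Delta_1$; from $t_0\xrightarrow{\mathfrak{a}_0}t_1,\Gamma\vdash\Delta,t_0\xrightarrow{\mathfrak{a}_1}t_1$ infer $\Gamma\vdash\Delta,t_0\xrightarrow{\mathfrak{a}_0\Rightarrow\mathfrak{a}_1}t_1$;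 $\mathbf{1}_s$-rules replacing $t_0=t_1$ by $t_0\xrightarrow{\mathbf{1}_s}t_1$ on either side; from $t_0\xrightarrow{\mathfrak{a}_0}x,x\xrightarrow{\mathfrak{a}_1}t_1,\Gamma\vdash_{\Sigma[x]}\Delta$ ($x$ fresh) infer $t_0\xrightarrow{\mathfrak{a}_0;\mathfrak{a}_1}t_1,\Gamma\vdash_\Sigma\Delta$; from $\Gamma\vdash\Delta,t_0\xrightarrow{\mathfrak{a}_0}t$ and $\Gamma'\vdash\Delta',t\xrightarrow{\mathfrak{a}_1}t_1$ infer $\Gamma\Gamma'\vdash\Delta\Delta',t_0\xrightarrow{\mathfrak{a}_0;\mathfrak{a}_1}t_1$; from $x\xrightarrow{\mathfrak{a}_0}t_0,x\xrightarrow{\mathfrak{a}_1}t_1,\Gamma\vdash_{\Sigma[x]}\Delta$ infer $t_0\xrightarrow{\mathfrak{a}_0\triangleright\mathfrak{a}_1}t_1,\Gamma\vdash_\Sigma\Delta$; from $\Gamma\vdash\Delta,t\xrightarrow{\mathfrak{a}_0}t_0$ and $\Gamma'\vdash\Delta',t\xrightarrow{\mathfrak{a}_1}t_1$ infer $\Gamma\Gamma'\vdash\Delta\Delta',t_0\xrightarrow{\mathfrak{a}_0\triangleright\mathfrak{a}_1}t_1$; the standard classical left/right rules for $\to$, $\vee\Phi$, $\wedge\Phi$ (with united side sets), $\exists_L$ and $\forall_R$ with a fresh block (premise over $\Sigma[X]$), $\exists_R$ and $\forall_L$ with substitution instances $\theta(\varphi)$; and the star rules: $t_0\xrightarrow{\mathfrak{a}^*}t_1,\Gamma\vdash\Delta,t_0\xrightarrow{\mathfrak{a}^*}t_1$;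 cut on sentences $t_0\xrightarrow{\mathfrak{a}^*}t_1$; from $\Gamma\vdash\Delta,t_0=t_1$ infer $\Gamma\vdash\Delta,t_0\xrightarrow{\mathfrak{a}^*}t_1$; from $\Gamma\vdash\Delta,t_0\xrightarrow{\mathfrak{a}^*}t$ and $\Gamma'\vdash\Delta',t\xrightarrow{\mathfrak{a}}t_1$, or from $\Gamma\vdash\Delta,t_0\xrightarrow{\mathfrak{a}}t$ and $\Gamma'\vdash\Delta',t\xrightarrow{\mathfrak{a}^*}t_1$, infer $\Gamma\Gamma'\vdash\Delta\Delta',t_0\xrightarrow{\mathfrak{a}^*}t_1$; for a term $t$, action $\mathfrak{t}$, fresh $X=\{x,y,z\}$: from $\Gamma_L\vdash\Delta_L,t\xrightarrow{\mathfrak{t}}t_0$, $z\xrightarrow{\mathfrak{t}}x,x\xrightarrow{\mathfrak{a}}y,\Gamma_M\vdash_{\Sigma[X]}\Delta_M,z\xrightarrow{\mathfrak{t}}y$, $t\xrightarrow{\mathfrak{t}}t_1,\Gamma_R\vdash\Delta_R$ infer $t_0\xrightarrow{\mathfrak{a}^*}t_1,\Gamma_L\Gamma_M\Gamma_R\vdash\Delta_L\Delta_M\Delta_R$; and from $\Gamma_L\vdash\Delta_L,t_1\xrightarrow{\mathfrak{t}}t$, $x\xrightarrow{\mathfrak{a}}y,y\xrightarrow{\mathfrak{t}}z,\Gamma_M\vdash_{\Sigma[X]}\Delta_M,x\xrightarrow{\mathfrak{t}}z$, $t_0\xrightarrow{\mathfrak{t}}t,\Gamma_R\vdash\Delta_R$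 infer the same conclusion. *)

(* Defs.v *)
From Stdlib Require Import List Relations.
Import ListNotations.

(* Sorts S, function symbols F_{w -> s}, labels L_s (families, hence pairwise
   disjoint by construction). *)
Record sig : Type := Sig {
  srt : Type;
  fsym : list srt -> srt -> Type;
  lab : srt -> Type }.

Inductive term (Sg : sig) : srt Sg -> Type :=
| app : forall (w : list (srt Sg)) (s : srt Sg), fsym Sg w s -> terms Sg w -> term Sg s
with terms (Sg : sig) : list (srt Sg) -> Type :=
| tnil : terms Sg []
| tcons : forall (s : srt Sg) (w : list (srt Sg)), term Sg s -> terms Sg w -> terms Sg (s :: w).
Arguments app {Sg w s} f ts.
Arguments tnil {Sg}.
Arguments tcons {Sg s w} t ts.

Inductive action (Sg : sig) : srt Sg -> Type :=
| alab : forall s, lab Sg s -> action Sg s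
| azero : forall s, action Sg s
| aone : forall s, action Sg s
| aunion : forall s, action Sg s -> action Sg s -> action Sg s
| aimp : forall s, action Sg s -> action Sg s -> action Sg s
| aseq : forall s, action Sg s -> action Sg s -> action Sg s
| arel : forall s, action Sg s -> action Sg s -> action Sg s
| astar : forall s, action Sg s -> action Sg s.
Arguments alab {Sg s} l.
Arguments azero {Sg} s.
Arguments aone {Sg} s.
Arguments aunion {Sg s} a b.
Arguments aimp {Sg s} a b.
Arguments aseq {Sg s} a b.
Arguments arel {Sg s} a b.
Arguments astar {Sg s} a.

(* A block: finitely many first-order variables and label variables, each with
   a sort; variables are the positions in the two lists. *)
Definition block (Sg : sig) : Type := (list (srt Sg) * list (srt Sg))%type.
Definition var {A : Type} (l : list A) (s : A) : Type := {i : nat | nth_error l i = Some s}.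
(* first-order variables are new constants (arity []) *)
Definition fvar {A : Type} (l : list A) (w : list A) (s : A) : Type :=
  match w with [] => var l s | _ :: _ => Empty_set end.

Definition ext (Sg : sig) (X : block Sg) : sig :=
  {| srt := srt Sg;
     fsym := fun w s => (fsym Sg w s + fvar (fst X) w s)%type;
     lab := fun s => (lab Sg s + var (snd X) s)%type |}.

Inductive sentence : sig -> Type :=
| sEq : forall Sg (s : srt Sg), term Sg s -> term Sg s -> sentence Sg
| sTr : forall Sg (s : srt Sg), action Sg s -> term Sg s -> term Sg s -> sentence Sg
| sImp : forall Sg, sentence Sg -> sentence Sg -> sentence Sg
| sOr : forall Sg, list (sentence Sg) -> sentence Sg
| sAnd : forall Sg, list (sentence Sg) -> sentence Sg
| sEx : forall Sg (X : block Sg), sentence (ext Sg X) -> sentence Sg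
| sAll : forall Sg (X : block Sg), sentence (ext Sg X) -> sentence Sg.
Arguments sEq {Sg s} t0 t1.
Arguments sTr {Sg s} a t0 t1.
Arguments sImp {Sg} phi psi.
Arguments sOr {Sg} Phi.
Arguments sAnd {Sg} Phi.
Arguments sEx {Sg} X phi.
Arguments sAll {Sg} X phi.

(* A generic translation device: sorts go to sorts, function symbols either to
   function symbols or (for the substitution of variables) to terms, labels to
   actions.  Used for signature inclusions and for substitutions theta. *)
Record mor (S1 S2 : sig) : Type := Mor {
  ms : srt S1 -> srt S2;
  mf : forall w s, fsym S1 w s -> (fsym S2 (map ms w) (ms s) + term S2 (ms s))%type;
  ml : forall s, lab S1 s -> action S2 (ms s) }.
Arguments ms {S1 S2} m s.
Arguments mf {S1 S2} m {w s} f.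
Arguments ml {S1 S2} m {s} l.

Fixpoint trt {S1 S2} (m : mor S1 S2) {s} (t : term S1 s) : term S2 (ms m s) :=
  match t with
  | app f ts => match mf m f with inl g => app g (trts m ts) | inr u => u end
  end
with trts {S1 S2} (m : mor S1 S2) {w} (ts : terms S1 w) : terms S2 (map (ms m) w) :=
  match ts with
  | tnil => tnil
  | tcons t ts => tcons (trt m t) (trts m ts)
  end.

Fixpoint tra {S1 S2} (m : mor S1 S2) {s} (a : action S1 s) : action S2 (ms m s) :=
  match a with
  | alab l => ml m l
  | azero s => azero (ms m s)
  | aone s => aone (ms m s)
  | aunion a b => aunion (tra m a) (tra m b)
  | aimp a b => aimp (tra m a) (tra m b)
  | aseq a b => aseq (tra m a) (tra m b)
  | arel a b => arel (tra m a) (tra m b)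
  | astar a => astar (tra m a)
  end.

Fixpoint embt {Sg} (Z : block Sg) {s} (t : term Sg s) : term (ext Sg Z) s :=
  match t with app f ts => @app (ext Sg Z) _ _ (inl f) (embts Z ts) end
with embts {Sg} (Z : block Sg) {w} (ts : terms Sg w) : terms (ext Sg Z) w :=
  match ts with
  | tnil => tnil
  | tcons t ts => @tcons (ext Sg Z) _ _ (embt Z t) (embts Z ts)
  end.

Fixpoint emba {Sg} (Z : block Sg) {s} (a : action Sg s) : action (ext Sg Z) s :=
  match a with
  | alab l => @alab (ext Sg Z) _ (inl l)
  | azero s => @azero (ext Sg Z) s
  | aone s => @aone (ext Sg Z) s
  | aunion a b => @aunion (ext Sg Z) _ (emba Z a) (emba Z b)
  | aimp a b => @aimp (ext Sg Z) _ (emba Z a) (emba Z b)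
  | aseq a b => @aseq (ext Sg Z) _ (emba Z a) (emba Z b)
  | arel a b => @arel (ext Sg Z) _ (emba Z a) (emba Z b)
  | astar a => @astar (ext Sg Z) _ (emba Z a)
  end.

Definition mapb {S1 S2} (f : srt S1 -> srt S2) (X : block S1) : block S2 :=
  (map f (fst X), map f (snd X)).

Definition mapvar {A B : Type} (f : A -> B) (l : list A) (s : A) (v : var l s)
  : var (map f l) (f s) :=
  exist _ (proj1_sig v) (map_nth_error f (proj1_sig v) l (proj2_sig v)).

Definition mapfvar {A B : Type} (f : A -> B) (l : list A) :
  forall w s, fvar l w s -> fvar (map f l) (map f w) (f s) :=
  fun w => match w with
           | [] => fun s v => mapvar f l s v
           | _ :: _ => fun s e => match e with end
           end.

Definition lift {S1 S2} (m : mor S1 S2) (Y : block S1) :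
  mor (ext S1 Y) (ext S2 (mapb (ms m) Y)) :=
  Mor (ext S1 Y) (ext S2 (mapb (ms m) Y)) (ms m)
     (fun w s (f : fsym (ext S1 Y) w s) =>
       match f with
       | inl g => match mf m g with
                  | inl h => inl (inl h)
                  | inr u => inr (embt (mapb (ms m) Y) u)
                  end
       | inr v => inl (inr (mapfvar (ms m) (fst Y) w s v))
       end)
     (fun s (l : lab (ext S1 Y) s) =>
       match l with
       | inl l0 => emba (mapb (ms m) Y) (ml m l0)
       | inr v => @alab (ext S2 (mapb (ms m) Y)) _ (inr (mapvar (ms m) (snd Y) s v))
       end).

Fixpoint trs {S1} (phi : sentence S1) {struct phi} : forall S2, mor S1 S2 -> sentence S2 :=
  match phi in sentence S0 return forall S2, mor S0 S2 -> sentence S2 with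
  | sEq t0 t1 => fun S2 m => sEq (trt m t0) (trt m t1)
  | sTr a t0 t1 => fun S2 m => sTr (tra m a) (trt m t0) (trt m t1)
  | sImp p q => fun S2 m => sImp (trs p S2 m) (trs q S2 m)
  | sOr Phi => fun S2 m => sOr (map (fun p => trs p S2 m) Phi)
  | sAnd Phi => fun S2 m => sAnd (map (fun p => trs p S2 m) Phi)
  | sEx X p => fun S2 m => sEx (mapb (ms m) X) (trs p _ (lift m X))
  | sAll X p => fun S2 m => sAll (mapb (ms m) X) (trs p _ (lift m X))
  end.

Definition castw {Sg : sig} {w : list (srt Sg)} {s} (f : fsym Sg w s)
  : fsym Sg (map (fun x => x) w) s :=
  eq_rect_r (fun w' => fsym Sg w' s) f (map_id w).

Definition incl (Sg : sig) (X : block Sg) : mor Sg (ext Sg X) :=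
  Mor Sg (ext Sg X) (fun s => s)
     (fun w s f => inl (inl (castw f)))
     (fun s l => @alab (ext Sg X) s (inl l)).

Record subst (Sg : sig) (X : block Sg) : Type := Subst {
  sub_f : forall s, var (fst X) s -> term Sg s;
  sub_l : forall s, var (snd X) s -> action Sg s }.
Arguments sub_f {Sg X} _ s _.
Arguments sub_l {Sg X} _ s _.

Definition subst_mor {Sg X} (th : subst Sg X) : mor (ext Sg X) Sg :=
  Mor (ext Sg X) Sg (fun s => s)
     (fun w s (f : fsym (ext Sg X) w s) =>
       match f with
       | inl g => inl (castw g)
       | inr v => inr ((match w return fvar (fst X) w s -> term Sg s with
                        | [] => fun v => sub_f th s v
                        | _ :: _ => fun e => match e with end
                        end) v)
       end)
     (fun s (l : lab (ext Sg X) s) =>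
       match l with inl l0 => alab l0 | inr v => sub_l th s v end).

Definition inst {Sg X} (th : subst Sg X) (phi : sentence (ext Sg X)) : sentence Sg :=
  trs phi Sg (subst_mor th).

Fixpoint tuple {S : Type} (A : S -> Type) (w : list S) : Type :=
  match w with [] => unit | s :: w => (A s * tuple A w)%type end.

Record model (Sg : sig) : Type := Model {
  car : srt Sg -> Type;
  mfun : forall w s, fsym Sg w s -> tuple car w -> car s;
  mlab : forall s, lab Sg s -> car s -> car s -> Prop }.
Arguments car {Sg} _ s.
Arguments mfun {Sg} _ {w s} _ _.
Arguments mlab {Sg} _ {s} _ _ _.

Fixpoint evt {Sg} (M : model Sg) {s} (t : term Sg s) : car M s :=
  match t with app f ts => mfun M f (evts M ts) end
with evts {Sg} (M : model Sg) {w} (ts : terms Sg w) : tuple (car M) w :=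
  match ts with
  | tnil => tt
  | tcons t ts => (evt M t, evts M ts)
  end.

Fixpoint aden {Sg} (M : model Sg) {s} (a : action Sg s) : car M s -> car M s -> Prop :=
  match a with
  | alab l => mlab M l
  | azero _ => fun _ _ => False
  | aone _ => fun x y => x = y
  | aunion a b => fun x y => aden M a x y \/ aden M b x y
  | aimp a b => fun x y => ~ aden M a x y \/ aden M b x y
  | aseq a b => fun x z => exists y, aden M a x y /\ aden M b y z
  | arel a b => fun x y => exists z, aden M a z x /\ aden M b z y
  | astar a => clos_refl_trans _ (aden M a)
  end.

Definition expand {Sg} (M : model Sg) (X : block Sg)
  (v : forall s, var (fst X) s -> car M s)
  (r : forall s, var (snd X) s -> car M s -> car M s -> Prop) : model (ext Sg X) :=
  Model (ext Sg X) (car M)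
     (fun w s (f : fsym (ext Sg X) w s) =>
       match f with
       | inl g => mfun M g
       | inr u => (match w return fvar (fst X) w s -> tuple (car M) w -> car M s with
                   | [] => fun u _ => v s u
                   | _ :: _ => fun e => match e with end
                   end) u
       end)
     (fun s (l : lab (ext Sg X) s) =>
       match l with inl l0 => mlab M l0 | inr u => r s u end).

Fixpoint sat {Sg} (phi : sentence Sg) {struct phi} : model Sg -> Prop :=
  match phi in sentence S0 return model S0 -> Prop with
  | sEq t0 t1 => fun M => evt M t0 = evt M t1
  | sTr a t0 t1 => fun M => aden M a (evt M t0) (evt M t1)
  | sImp p q => fun M => sat p M -> sat q M
  | sOr Phi => fun M => (fix go l := match l with [] => False | p :: l => sat p M \/ go l end) Phi
  | sAnd Phi => fun M => (fix go l := match l with [] => True | p :: l => sat p M /\ go l end) Phi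
  | sEx X p => fun M => exists v r, sat p (expand M X v r)
  | sAll X p => fun M => forall v r, sat p (expand M X v r)
  end.

Definition sset (Sg : sig) : Type := sentence Sg -> Prop.

Definition valid (Sg : sig) (G D : sset Sg) : Prop :=
  forall M : model Sg, (forall phi, G phi -> sat phi M) -> exists psi, D psi /\ sat psi M.

Definition add {Sg} (phi : sentence Sg) (G : sset Sg) : sset Sg := fun psi => psi = phi \/ G psi.
Definition cup {Sg} (G1 G2 : sset Sg) : sset Sg := fun psi => G1 psi \/ G2 psi.
Definition bigcup {Sg} (Phi : list (sentence Sg)) (F : nat -> sset Sg) : sset Sg :=
  fun psi => exists i phi, nth_error Phi i = Some phi /\ F i psi.
Definition up {Sg} (X : block Sg) (G : sset Sg) : sset (ext Sg X) :=
  fun psi => exists phi, G phi /\ psi = trs phi _ (incl Sg X).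

Definition E {Sg} (X : block Sg) {s} (t : term Sg s) : term (ext Sg X) s := trt (incl Sg X) t.
Definition EA {Sg} (X : block Sg) {s} (a : action Sg s) : action (ext Sg X) s := tra (incl Sg X) a.
Definition vt {Sg} (X : block Sg) {s} (v : var (fst X) s) : term (ext Sg X) s :=
  @app (ext Sg X) [] s (inr v) tnil.

Definition b1 {Sg} (s : srt Sg) : block Sg := ([s], []).
Definition b3 {Sg} (s : srt Sg) : block Sg := ([s; s; s], []).
Definition vx1 {Sg} (s : srt Sg) : term (ext Sg (b1 s)) s := vt (b1 s) (exist _ 0 eq_refl).
Definition vx {Sg} (s : srt Sg) : term (ext Sg (b3 s)) s := vt (b3 s) (exist _ 0 eq_refl).
Definition vy {Sg} (s : srt Sg) : term (ext Sg (b3 s)) s := vt (b3 s) (exist _ 1 eq_refl).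
Definition vz {Sg} (s : srt Sg) : term (ext Sg (b3 s)) s := vt (b3 s) (exist _ 2 eq_refl).

Definition basic {Sg} (phi : sentence Sg) : Prop :=
  match phi with
  | sEq _ _ => True
  | sTr a _ _ => match a with alab _ => True | _ => False end
  | _ => False
  end.
Definition basicset {Sg} (G : sset Sg) : Prop := forall phi, G phi -> basic phi.

Inductive argpair (Sg : sig) : forall w, terms Sg w -> terms Sg w ->
                                forall s, term Sg s -> term Sg s -> Prop :=
| ap_here : forall s w (t t' : term Sg s) (ts ts' : terms Sg w),
    argpair Sg (s :: w) (tcons t ts) (tcons t' ts') s t t'
| ap_there : forall s w (t t' : term Sg s) (ts ts' : terms Sg w) s' (u u' : term Sg s'),
    argpair Sg w ts ts' s' u u' -> argpair Sg (s :: w) (tcons t ts) (tcons t' ts') s' u u'.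

Inductive bderiv (Sg : sig) : sset Sg -> sset Sg -> Prop :=
| b_init : forall phi G D, bderiv Sg (add phi G) (add phi D)
| b_refl : forall s (t : term Sg s) G D, bderiv Sg G (add (sEq t t) D)
| b_sym : forall s (t t' : term Sg s) G D,
    bderiv Sg G (add (sEq t t') D) -> bderiv Sg G (add (sEq t' t) D)
| b_trans : forall s (t1 t2 t3 : term Sg s) G D,
    bderiv Sg G (add (sEq t1 t2) D) -> bderiv Sg G (add (sEq t2 t3) D) ->
    bderiv Sg G (add (sEq t1 t3) D)
| b_cong : forall w s (f : fsym Sg w s) (ts ts' : terms Sg w) G D,
    (forall s' (u u' : term Sg s'), argpair Sg w ts ts' s' u u' -> bderiv Sg G (add (sEq u u') D)) ->
    bderiv Sg G (add (sEq (app f ts) (app f ts')) D)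
| b_repl : forall s (l : lab Sg s) (t0 t0' t1 t1' : term Sg s) G D,
    bderiv Sg G (add (sEq t0 t0') D) -> bderiv Sg G (add (sEq t1 t1') D) ->
    bderiv Sg G (add (sTr (alab l) t0 t1) D) ->
    bderiv Sg G (add (sTr (alab l) t0' t1') D).

Inductive deriv : forall Sg : sig, sset Sg -> sset Sg -> Prop :=
| d_atom : forall Sg (Gb Db G D : sset Sg),
    basicset Gb -> basicset Db -> bderiv Sg Gb Db -> deriv Sg (cup Gb G) (cup D Db)
| d_zero : forall Sg s (t0 t1 : term Sg s) G D,
    deriv Sg (add (sTr (azero s) t0 t1) G) D
| d_unionL : forall Sg s (a0 a1 : action Sg s) t0 t1 G0 D0 G1 D1,
    deriv Sg (add (sTr a0 t0 t1) G0) D0 -> deriv Sg (add (sTr a1 t0 t1) G1) D1 ->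
    deriv Sg (add (sTr (aunion a0 a1) t0 t1) (cup G0 G1)) (cup D0 D1)
| d_unionR0 : forall Sg s (a0 a1 : action Sg s) t0 t1 G D,
    deriv Sg G (add (sTr a0 t0 t1) D) -> deriv Sg G (add (sTr (aunion a0 a1) t0 t1) D)
| d_unionR1 : forall Sg s (a0 a1 : action Sg s) t0 t1 G D,
    deriv Sg G (add (sTr a1 t0 t1) D) -> deriv Sg G (add (sTr (aunion a0 a1) t0 t1) D)
| d_aimpL : forall Sg s (a0 a1 : action Sg s) t0 t1 G0 D0 G1 D1,
    deriv Sg G0 (add (sTr a0 t0 t1) D0) -> deriv Sg (add (sTr a1 t0 t1) G1) D1 ->
    deriv Sg (add (sTr (aimp a0 a1) t0 t1) (cup G0 G1)) (cup D0 D1)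
| d_aimpR : forall Sg s (a0 a1 : action Sg s) t0 t1 G D,
    deriv Sg (add (sTr a0 t0 t1) G) (add (sTr a1 t0 t1) D) ->
    deriv Sg G (add (sTr (aimp a0 a1) t0 t1) D)
| d_oneL : forall Sg s (t0 t1 : term Sg s) G D,
    deriv Sg (add (sEq t0 t1) G) D -> deriv Sg (add (sTr (aone s) t0 t1) G) D
| d_oneR : forall Sg s (t0 t1 : term Sg s) G D,
    deriv Sg G (add (sEq t0 t1) D) -> deriv Sg G (add (sTr (aone s) t0 t1) D)
| d_seqL : forall Sg s (a0 a1 : action Sg s) t0 t1 G D,
    deriv (ext Sg (b1 s))
      (add (sTr (EA (b1 s) a0) (E (b1 s) t0) (vx1 s))
        (add (sTr (EA (b1 s) a1) (vx1 s) (E (b1 s) t1)) (up (b1 s) G)))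
      (up (b1 s) D) ->
    deriv Sg (add (sTr (aseq a0 a1) t0 t1) G) D
| d_seqR : forall Sg s (a0 a1 : action Sg s) t0 t t1 G D G' D',
    deriv Sg G (add (sTr a0 t0 t) D) -> deriv Sg G' (add (sTr a1 t t1) D') ->
    deriv Sg (cup G G') (add (sTr (aseq a0 a1) t0 t1) (cup D D'))
| d_relL : forall Sg s (a0 a1 : action Sg s) t0 t1 G D,
    deriv (ext Sg (b1 s))
      (add (sTr (EA (b1 s) a0) (vx1 s) (E (b1 s) t0))
        (add (sTr (EA (b1 s) a1) (vx1 s) (E (b1 s) t1)) (up (b1 s) G)))
      (up (b1 s) D) ->
    deriv Sg (add (sTr (arel a0 a1) t0 t1) G) D
| d_relR : forall Sg s (a0 a1 : action Sg s) t t0 t1 G D G' D',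
    deriv Sg G (add (sTr a0 t t0) D) -> deriv Sg G' (add (sTr a1 t t1) D') ->
    deriv Sg (cup G G') (add (sTr (arel a0 a1) t0 t1) (cup D D'))
| d_impL : forall Sg (phi psi : sentence Sg) G0 D0 G1 D1,
    deriv Sg G0 (add phi D0) -> deriv Sg (add psi G1) D1 ->
    deriv Sg (add (sImp phi psi) (cup G0 G1)) (cup D0 D1)
| d_impR : forall Sg (phi psi : sentence Sg) G D,
    deriv Sg (add phi G) (add psi D) -> deriv Sg G (add (sImp phi psi) D)
| d_orL : forall Sg (Phi : list (sentence Sg)) (GF DF : nat -> sset Sg),
    (forall i phi, nth_error Phi i = Some phi -> deriv Sg (add phi (GF i)) (DF i)) ->
    deriv Sg (add (sOr Phi) (bigcup Phi GF)) (bigcup Phi DF)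
| d_orR : forall Sg (Phi : list (sentence Sg)) phi G D,
    In phi Phi -> deriv Sg G (add phi D) -> deriv Sg G (add (sOr Phi) D)
| d_andL : forall Sg (Phi : list (sentence Sg)) phi G D,
    In phi Phi -> deriv Sg (add phi G) D -> deriv Sg (add (sAnd Phi) G) D
| d_andR : forall Sg (Phi : list (sentence Sg)) (GF DF : nat -> sset Sg),
    (forall i phi, nth_error Phi i = Some phi -> deriv Sg (GF i) (add phi (DF i))) ->
    deriv Sg (bigcup Phi GF) (add (sAnd Phi) (bigcup Phi DF))
| d_exL : forall Sg (X : block Sg) phi G D,
    deriv (ext Sg X) (add phi (up X G)) (up X D) -> deriv Sg (add (sEx X phi) G) D
| d_exR : forall Sg (X : block Sg) phi (th : subst Sg X) G D,
    deriv Sg G (add (inst th phi) D) -> deriv Sg G (add (sEx X phi) D)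
| d_allL : forall Sg (X : block Sg) phi (th : subst Sg X) G D,
    deriv Sg (add (inst th phi) G) D -> deriv Sg (add (sAll X phi) G) D
| d_allR : forall Sg (X : block Sg) phi G D,
    deriv (ext Sg X) (up X G) (add phi (up X D)) -> deriv Sg G (add (sAll X phi) D)
| d_starAx : forall Sg s (a : action Sg s) t0 t1 G D,
    deriv Sg (add (sTr (astar a) t0 t1) G) (add (sTr (astar a) t0 t1) D)
| d_starCut : forall Sg s (a : action Sg s) t0 t1 G0 D0 G1 D1,
    deriv Sg G0 (add (sTr (astar a) t0 t1) D0) -> deriv Sg (add (sTr (astar a) t0 t1) G1) D1 ->
    deriv Sg (cup G0 G1) (cup D0 D1)
| d_starR0 : forall Sg s (a : action Sg s) t0 t1 G D,
    deriv Sg G (add (sEq t0 t1) D) -> deriv Sg G (add (sTr (astar a) t0 t1) D)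
| d_starR1 : forall Sg s (a : action Sg s) t0 t t1 G D G' D',
    deriv Sg G (add (sTr (astar a) t0 t) D) -> deriv Sg G' (add (sTr a t t1) D') ->
    deriv Sg (cup G G') (add (sTr (astar a) t0 t1) (cup D D'))
| d_starR2 : forall Sg s (a : action Sg s) t0 t t1 G D G' D',
    deriv Sg G (add (sTr a t0 t) D) -> deriv Sg G' (add (sTr (astar a) t t1) D') ->
    deriv Sg (cup G G') (add (sTr (astar a) t0 t1) (cup D D'))
| d_starIndL : forall Sg s (a tt : action Sg s) (t t0 t1 : term Sg s) GL DL GM DM GR DR,
    deriv Sg GL (add (sTr tt t t0) DL) ->
    deriv (ext Sg (b3 s))
      (add (sTr (EA (b3 s) tt) (vz s) (vx s))
        (add (sTr (EA (b3 s) a) (vx s) (vy s)) (up (b3 s) GM)))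
      (add (sTr (EA (b3 s) tt) (vz s) (vy s)) (up (b3 s) DM)) ->
    deriv Sg (add (sTr tt t t1) GR) DR ->
    deriv Sg (add (sTr (astar a) t0 t1) (cup GL (cup GM GR))) (cup DL (cup DM DR))
| d_starIndR : forall Sg s (a tt : action Sg s) (t t0 t1 : term Sg s) GL DL GM DM GR DR,
    deriv Sg GL (add (sTr tt t1 t) DL) ->
    deriv (ext Sg (b3 s))
      (add (sTr (EA (b3 s) a) (vx s) (vy s))
        (add (sTr (EA (b3 s) tt) (vy s) (vz s)) (up (b3 s) GM)))
      (add (sTr (EA (b3 s) tt) (vx s) (vz s)) (up (b3 s) DM)) ->
    deriv Sg (add (sTr tt t0 t) GR) DR ->
    deriv Sg (add (sTr (astar a) t0 t1) (cup GL (cup GM GR))) (cup DL (cup DM DR)).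

Record sigmor (S1 S2 : sig) : Type := SigMor {
  ss : srt S1 -> srt S2;
  sf : forall w s, fsym S1 w s -> fsym S2 (map ss w) (ss s);
  sl : forall s, lab S1 s -> lab S2 (ss s) }.
Arguments ss {S1 S2} _ _.
Arguments sf {S1 S2} _ {w s} _.
Arguments sl {S1 S2} _ {s} _.

Definition injective_sigmor {S1 S2} (i : sigmor S1 S2) : Prop :=
  (forall s s', ss i s = ss i s' -> s = s') /\
  (forall w s (f f' : fsym S1 w s), sf i f = sf i f' -> f = f') /\
  (forall s (l l' : lab S1 s), sl i l = sl i l' -> l = l').

Definition mor_of {S1 S2} (i : sigmor S1 S2) : mor S1 S2 :=
  Mor S1 S2 (ss i) (fun w s f => inl (sf i f)) (fun s l => alab (sl i l)).

Definition finite_sig (Sg : sig) : Prop :=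
  (exists l : list (srt Sg), forall s, In s l) /\
  (exists l : list {w : list (srt Sg) & {s : srt Sg & fsym Sg w s}},
      forall w s f, In (existT _ w (existT _ s f)) l) /\
  (exists l : list {s : srt Sg & lab Sg s}, forall s x, In (existT _ s x) l).

(* Main.v *)
Require Import Defs.
From Stdlib Require Import List.
From Stdlib Require Import Relations Classical FunctionalExtensionality PropExtensionality ProofIrrelevance.
From Stdlib Require Import Eqdep Program.Equality IndefiniteDescription Lia.
Require Import Defs.
Import ListNotations.

Scheme term_ind' := Induction for term Sort Prop
with terms_ind' := Induction for terms Sort Prop.
Combined Scheme term_terms_ind from term_ind', terms_ind'.

Definition sentence_ind2 (P : forall Sg, sentence Sg -> Prop)
 (Heq : forall Sg s (t0 t1 : term Sg s), P Sg (sEq t0 t1))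
 (Htr : forall Sg s (a : action Sg s) t0 t1, P Sg (sTr a t0 t1))
 (Himp : forall Sg p q, P Sg p -> P Sg q -> P Sg (sImp p q))
 (Hor : forall Sg l, Forall (P Sg) l -> P Sg (sOr l))
 (Hand : forall Sg l, Forall (P Sg) l -> P Sg (sAnd l))
 (Hex : forall Sg X p, P (ext Sg X) p -> P Sg (sEx X p))
 (Hall : forall Sg X p, P (ext Sg X) p -> P Sg (sAll X p)) :
 forall Sg phi, P Sg phi :=
 fix F Sg phi {struct phi} : P Sg phi :=
 match phi as phi0 in sentence S0 return P S0 phi0 with
 | sEq t0 t1 => Heq _ _ t0 t1
 | sTr a t0 t1 => Htr _ _ a t0 t1
 | sImp p q => Himp _ p q (F _ p) (F _ q)
 | @sOr S0 l => Hor _ l ((fix G (l : list (sentence S0)) : Forall (P S0) l :=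
      match l with [] => Forall_nil _ | x :: l' => Forall_cons _ (F _ x) (G l') end) l)
 | @sAnd S0 l => Hand _ l ((fix G (l : list (sentence S0)) : Forall (P S0) l :=
      match l with [] => Forall_nil _ | x :: l' => Forall_cons _ (F _ x) (G l') end) l)
 | sEx X p => Hex _ X p (F _ p)
 | sAll X p => Hall _ X p (F _ p)
 end.

Fixpoint tconv {A B : Type} (C : B -> Type) (f : A -> B) (w : list A) :
  tuple (fun s => C (f s)) w -> tuple C (map f w) :=
  match w return tuple (fun s => C (f s)) w -> tuple C (map f w) with
  | [] => fun x => x
  | s :: w' => fun x => (fst x, tconv C f w' (snd x))
  end.

Definition red {S1 S2} (m : mor S1 S2) (M : model S2) : model S1 :=
  Model S1 (fun s => car M (ms m s))
    (fun w s f args => match mf m f with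
                       | inl g => mfun M g (tconv (car M) (ms m) w args)
                       | inr u => evt M u end)
    (fun s l => aden M (ml m l)).

Lemma evt_red : forall S1 S2 (m : mor S1 S2) (M : model S2),
  (forall s (t : term S1 s), evt M (trt m t) = evt (red m M) t) /\
  (forall w (ts : terms S1 w), evts M (trts m ts) = tconv (car M) (ms m) w (evts (red m M) ts)).
Proof.
  intros S1 S2 m M. apply term_terms_ind.
  - intros w s f ts IH. simpl. destruct (mf m f); simpl; [rewrite IH|]; reflexivity.
  - reflexivity.
  - intros s w t IH ts IH2. simpl. rewrite IH, IH2. reflexivity.
Qed.

Lemma aden_red : forall S1 S2 (m : mor S1 S2) (M : model S2) s (a : action S1 s),
  aden M (tra m a) = aden (red m M) a.
Proof.
  intros S1 S2 m M s a. induction a; simpl; try rewrite IHa1, IHa2; try rewrite IHa; reflexivity.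
Qed.

Lemma evt_embt : forall Sg (Z : block Sg) (M : model Sg) v r,
  (forall s (t : term Sg s), evt (expand M Z v r) (embt Z t) = evt M t) /\
  (forall w (ts : terms Sg w), evts (expand M Z v r) (embts Z ts) = evts M ts).
Proof.
  intros. apply term_terms_ind.
  - intros w s f ts IH. simpl. rewrite IH. reflexivity.
  - reflexivity.
  - intros s w t IH ts IH2. simpl. rewrite IH, IH2. reflexivity.
Qed.

Lemma aden_emba : forall Sg (Z : block Sg) (M : model Sg) v r s (a : action Sg s),
  aden (expand M Z v r) (emba Z a) = aden M a.
Proof.
  intros. induction a; simpl; try rewrite IHa1, IHa2; try rewrite IHa; reflexivity.
Qed.

Section ExtVal.
Context {A B : Type} (f : A -> B) (C : B -> Type).

Definition some_inj {X : Type} {x y : X} (e : Some x = Some y) : x = y :=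
  f_equal (fun o => match o with Some z => z | None => x end) e.

Fixpoint ext_val (l : list A) : (forall s, var l s -> C (f s)) -> forall s2, var (map f l) s2 -> C s2 :=
  match l return (forall s, var l s -> C (f s)) -> forall s2, var (map f l) s2 -> C s2 with
  | [] => fun _ s2 u => False_rect _ (match u with exist _ i e =>
           match i return nth_error (map f []) i = Some s2 -> False with
           | 0 => fun e => ltac:(discriminate e) | S _ => fun e => ltac:(discriminate e) end e end)
  | a :: l' => fun v1 s2 u => match u with exist _ i e =>
      match i return nth_error (map f (a :: l')) i = Some s2 -> C s2 with
      | 0 => fun e => eq_rect (f a) C (v1 a (exist _ 0 eq_refl)) s2 (some_inj e)
      | S j => fun e => ext_val l' (fun s u' => v1 s (exist _ (S (proj1_sig u')) (proj2_sig u'))) s2 (exist _ j e)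
      end e end
  end.

Lemma ext_val_spec : forall l v1 s i (E : nth_error l i = Some s) (E' : nth_error (map f l) i = Some (f s)),
  ext_val l v1 (f s) (exist _ i E') = v1 s (exist _ i E).
Proof.
  induction l as [|a l IH]; intros v1 s i E E'.
  - destruct i; discriminate E.
  - destruct i as [|j].
    + simpl in E. pose proof (some_inj E) as H. subst s.
      simpl. rewrite (UIP_refl _ _ (some_inj E')). simpl.
      rewrite (UIP_refl _ _ E). reflexivity.
    + simpl. exact (IH (fun s0 u' => v1 s0 (exist _ (S (proj1_sig u')) (proj2_sig u'))) s j E E').
Qed.

Lemma ext_val_mapvar : forall l v1 s (u : var l s),
  ext_val l v1 (f s) (mapvar f l s u) = v1 s u.
Proof. intros l v1 s [i E]. apply ext_val_spec. Qed.
End ExtVal.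

Lemma red_lift_expand : forall S1 S2 (m : mor S1 S2) (M : model S2) (X : block S1) v r,
  red (lift m X) (expand M (mapb (ms m) X) v r) =
  expand (red m M) X (fun s u => v (ms m s) (mapvar (ms m) (fst X) s u))
                     (fun s u => r (ms m s) (mapvar (ms m) (snd X) s u)).
Proof.
  intros. unfold red, expand. simpl. f_equal.
  - apply functional_extensionality_dep; intro w.
    apply functional_extensionality_dep; intro s.
    apply functional_extensionality_dep; intro f.
    destruct f as [g|u].
    + simpl. destruct (mf m g) as [h|u]; simpl.
      * reflexivity.
      * apply functional_extensionality; intro args. exact (proj1 (evt_embt S2 (mapb (ms m) X) M v r) _ u).
    + destruct w; [|destruct u]. simpl. reflexivity.
  - apply functional_extensionality_dep; intro s.
    apply functional_extensionality_dep; intro l.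
    destruct l as [l0|u]; simpl.
    + exact (aden_emba S2 (mapb (ms m) X) M v r _ (ml m l0)).
    + reflexivity.
Qed.

Lemma sat_trs : forall S1 (phi : sentence S1) S2 (m : mor S1 S2) (M : model S2),
  sat (trs phi S2 m) M <-> sat phi (red m M).
Proof.
  apply (sentence_ind2 (fun S1 phi => forall S2 (m : mor S1 S2) (M : model S2),
    sat (trs phi S2 m) M <-> sat phi (red m M))).
  - intros. simpl. rewrite !(proj1 (evt_red _ _ m M)). tauto.
  - intros. simpl. rewrite !(proj1 (evt_red _ _ m M)), aden_red. tauto.
  - intros Sg p q IHp IHq S2 m M. simpl. rewrite IHp, IHq. tauto.
  - intros Sg l IH S2 m M. simpl. induction IH as [|x l Hx Hl IHl]; simpl; [tauto|].
    rewrite Hx, IHl. tauto.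
  - intros Sg l IH S2 m M. simpl. induction IH as [|x l Hx Hl IHl]; simpl; [tauto|].
    rewrite Hx, IHl. tauto.
  - intros Sg X p IH S2 m M. simpl. split.
    + intros [v [r H]]. apply IH in H. rewrite red_lift_expand in H. eauto.
    + intros [v1 [r1 H]].
      exists (ext_val (ms m) (car M) (fst X) v1), (ext_val (ms m) (fun s => car M s -> car M s -> Prop) (snd X) r1).
      apply IH. rewrite red_lift_expand.
      assert (E1 : (fun s u => ext_val (ms m) (car M) (fst X) v1 (ms m s) (mapvar (ms m) (fst X) s u)) = v1).
      { apply functional_extensionality_dep; intro s; apply functional_extensionality; intro u.
        apply ext_val_mapvar. }
      assert (E2 : (fun s u => ext_val (ms m) (fun s => car M s -> car M s -> Prop) (snd X) r1 (ms m s) (mapvar (ms m) (snd X) s u)) = r1).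
      { apply functional_extensionality_dep; intro s; apply functional_extensionality; intro u.
        exact (ext_val_mapvar (ms m) (fun s => car M s -> car M s -> Prop) (snd X) r1 s u). }
      rewrite E1, E2. exact H.
  - intros Sg X p IH S2 m M. simpl. split.
    + intros H v1 r1.
      specialize (H (ext_val (ms m) (car M) (fst X) v1) (ext_val (ms m) (fun s => car M s -> car M s -> Prop) (snd X) r1)).
      apply IH in H. rewrite red_lift_expand in H.
      assert (E1 : (fun s u => ext_val (ms m) (car M) (fst X) v1 (ms m s) (mapvar (ms m) (fst X) s u)) = v1).
      { apply functional_extensionality_dep; intro s; apply functional_extensionality; intro u.
        apply ext_val_mapvar. }
      assert (E2 : (fun s u => ext_val (ms m) (fun s => car M s -> car M s -> Prop) (snd X) r1 (ms m s) (mapvar (ms m) (snd X) s u)) = r1).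
      { apply functional_extensionality_dep; intro s; apply functional_extensionality; intro u.
        exact (ext_val_mapvar (ms m) (fun s => car M s -> car M s -> Prop) (snd X) r1 s u). }
      rewrite E1, E2 in H. exact H.
    + intros H v r. apply IH. rewrite red_lift_expand. apply H.
Qed.

Lemma tconv_id : forall (A : Type) (C : A -> Type) w (args : tuple C w),
  existT (tuple C) (map (fun x => x) w) (tconv C (fun x => x) w args) = existT (tuple C) w args.
Proof.
  intros A C w. induction w as [|s w IH]; intros args; [reflexivity|].
  simpl. destruct args as [y t]. simpl.
  exact (f_equal (fun p : sigT (tuple C) => existT (tuple C) (s :: projT1 p) (y, projT2 p)) (IH t)).
Qed.

Lemma mfun_cast : forall Sg (M : model Sg) s w w' (e : w = w') (f : fsym Sg w s) (args' : tuple (car M) w') args,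
  existT (tuple (car M)) w' args' = existT (tuple (car M)) w args ->
  mfun M (eq_rect w (fun w0 => fsym Sg w0 s) f w' e) args' = mfun M f args.
Proof.
  intros. destruct e. simpl. apply inj_pair2 in H. subst. reflexivity.
Qed.

Lemma mfun_castw : forall Sg (M : model Sg) w s (f : fsym Sg w s) args,
  mfun M (castw f) (tconv (car M) (fun x => x) w args) = mfun M f args.
Proof.
  intros. unfold castw, eq_rect_r. apply mfun_cast. apply tconv_id.
Qed.

Lemma red_incl : forall Sg X (M : model Sg) v r, red (incl Sg X) (expand M X v r) = M.
Proof.
  intros. destruct M as [c mf0 ml0]. unfold red, expand. simpl. f_equal.
  apply functional_extensionality_dep; intro w.
  apply functional_extensionality_dep; intro s.
  apply functional_extensionality_dep; intro f.
  apply functional_extensionality; intro args.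
  exact (mfun_castw Sg (Model Sg c mf0 ml0) w s f args).
Qed.

Lemma red_subst : forall Sg X (th : subst Sg X) (M : model Sg),
  red (subst_mor th) M = expand M X (fun s v => evt M (sub_f th s v)) (fun s v => aden M (sub_l th s v)).
Proof.
  intros. unfold red, expand. simpl. f_equal.
  - apply functional_extensionality_dep; intro w.
    apply functional_extensionality_dep; intro s.
    apply functional_extensionality_dep; intro f.
    destruct f as [g|u].
    + apply functional_extensionality; intro args. apply mfun_castw.
    + destruct w; [|destruct u]. reflexivity.
  - apply functional_extensionality_dep; intro s.
    apply functional_extensionality_dep; intro l.
    destruct l; reflexivity.
Qed.

Lemma sat_up : forall Sg X (phi : sentence Sg) (M : model Sg) v r,
  sat (trs phi _ (incl Sg X)) (expand M X v r) <-> sat phi M.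
Proof. intros. rewrite sat_trs, red_incl. tauto. Qed.

Lemma sat_inst : forall Sg X (th : subst Sg X) phi (M : model Sg),
  sat (inst th phi) M <-> sat phi (expand M X (fun s v => evt M (sub_f th s v)) (fun s v => aden M (sub_l th s v))).
Proof. intros. unfold inst. rewrite sat_trs, red_subst. tauto. Qed.

Definition Mods {Sg} (M : model Sg) (G : sset Sg) := forall phi, G phi -> sat phi M.
Definition Some_ {Sg} (M : model Sg) (D : sset Sg) := exists psi, D psi /\ sat psi M.

Lemma vR : forall Sg (G D : sset Sg) P M, valid Sg G (add P D) -> Mods M G -> ~ Some_ M D -> sat P M.
Proof.
  intros Sg G D P M H HM HN. destruct (H M HM) as [psi [[E|E] S]]; [subst; auto|].
  exfalso; apply HN; exists psi; auto.
Qed.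

Lemma vL : forall Sg (G D : sset Sg) P M, valid Sg (add P G) D -> Mods M G -> sat P M -> Some_ M D.
Proof.
  intros Sg G D P M H HM HP. apply H. intros phi [E|E]; [subst; auto|auto].
Qed.

Lemma Mods_add : forall Sg (G : sset Sg) P M, Mods M (add P G) -> sat P M /\ Mods M G.
Proof. unfold Mods, add. intros. split; auto. Qed.
Lemma Mods_cup : forall Sg (G1 G2 : sset Sg) M, Mods M (cup G1 G2) -> Mods M G1 /\ Mods M G2.
Proof. unfold Mods, cup. intros. split; auto. Qed.
Lemma Some_add : forall Sg (D : sset Sg) P M, sat P M -> Some_ M (add P D).
Proof. unfold Some_, add. intros. exists P; auto. Qed.
Lemma Some_addr : forall Sg (D : sset Sg) P M, Some_ M D -> Some_ M (add P D).
Proof. unfold Some_, add. intros Sg D P M [psi [? ?]]. exists psi; auto. Qed.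
Lemma Some_cupl : forall Sg (D1 D2 : sset Sg) M, Some_ M D1 -> Some_ M (cup D1 D2).
Proof. unfold Some_, cup. intros Sg D1 D2 M [psi [? ?]]. exists psi; auto. Qed.
Lemma Some_cupr : forall Sg (D1 D2 : sset Sg) M, Some_ M D2 -> Some_ M (cup D1 D2).
Proof. unfold Some_, cup. intros Sg D1 D2 M [psi [? ?]]. exists psi; auto. Qed.

Lemma Mods_up : forall Sg X (G : sset Sg) M v r, Mods M G -> Mods (expand M X v r) (up X G).
Proof. intros Sg X G M v r H phi [p [Hp E]]. subst. apply sat_up. auto. Qed.
Lemma Some_up : forall Sg X (D : sset Sg) M v r, Some_ (expand M X v r) (up X D) -> Some_ M D.
Proof. intros Sg X D M v r [psi [[p [Hp E]] S]]. subst. apply sat_up in S. exists p; auto. Qed.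

Lemma evts_eq : forall Sg (M : model Sg) w (ts ts' : terms Sg w),
  (forall s' (u u' : term Sg s'), argpair Sg w ts ts' s' u u' -> evt M u = evt M u') ->
  evts M ts = evts M ts'.
Proof.
  intros Sg M w ts. induction ts as [|s w t ts IH]; intros ts' H.
  - dependent destruction ts'. reflexivity.
  - dependent destruction ts'. simpl. f_equal.
    + apply H. constructor.
    + apply IH. intros. apply H. constructor. auto.
Qed.

Lemma bderiv_sound : forall Sg G D, bderiv Sg G D -> valid Sg G D.
Proof.
  intros Sg G D H. induction H; intros M HM.
  - apply Mods_add in HM as [HP _]. apply Some_add; auto.
  - apply Some_add. reflexivity.
  - destruct (classic (Some_ M D)) as [HS|HN]; [apply Some_addr; auto|].
    apply Some_add. simpl. symmetry. exact (vR _ _ _ _ _ IHbderiv HM HN).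
  - destruct (classic (Some_ M D)) as [HS|HN]; [apply Some_addr; auto|].
    apply Some_add. simpl. pose proof (vR _ _ _ _ _ IHbderiv1 HM HN). pose proof (vR _ _ _ _ _ IHbderiv2 HM HN).
    simpl in *. congruence.
  - destruct (classic (Some_ M D)) as [HS|HN]; [apply Some_addr; auto|].
    apply Some_add. simpl. f_equal. apply evts_eq. intros. exact (vR _ _ _ _ _ (H0 _ _ _ H1) HM HN).
  - destruct (classic (Some_ M D)) as [HS|HN]; [apply Some_addr; auto|].
    apply Some_add. pose proof (vR _ _ _ _ _ IHbderiv1 HM HN). pose proof (vR _ _ _ _ _ IHbderiv2 HM HN).
    pose proof (vR _ _ _ _ _ IHbderiv3 HM HN). simpl in *. rewrite <- H2, <- H3. auto.
Qed.

Lemma evt_E_gen : forall Sg X (M : model Sg) v r,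
  (forall s (t : term Sg s), evt (expand M X v r) (trt (incl Sg X) t) = evt M t) /\ (forall w (ts : terms Sg w), evts (expand M X v r) (trts (incl Sg X) ts) = tconv (car M) (fun x => x) w (evts M ts)).
Proof.
  intros. apply term_terms_ind.
  - intros w s f ts IH. simpl. pose proof (mfun_castw Sg M w s f (evts M ts)) as H. rewrite <- IH in H. exact H.
  - reflexivity.
  - intros s w t IH ts IH2. simpl. f_equal; [exact IH|exact IH2].
Qed.
Lemma evt_E : forall Sg X (M : model Sg) v r s (t : term Sg s), evt (expand M X v r) (E X t) = evt M t.
Proof. intros. apply evt_E_gen. Qed.
Lemma aden_EA : forall Sg X (M : model Sg) v r s (a : action Sg s), aden (expand M X v r) (EA X a) = aden M a.
Proof.
  intros. unfold EA. induction a; simpl; try rewrite IHa1, IHa2; try rewrite IHa; reflexivity.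
Qed.

Lemma nth1 : forall A (s s' : A) i, nth_error [s] i = Some s' -> s = s'.
Proof. intros A s s' [|[|i]] e; simpl in e; try discriminate; injection e; auto. Qed.
Lemma nth3 : forall A (s s' : A) i, nth_error [s; s; s] i = Some s' -> s = s'.
Proof. intros A s s' [|[|[|[|i]]]] e; simpl in e; try discriminate; injection e; auto. Qed.

Definition val1 {Sg} (M : model Sg) s (x : car M s) : forall s', var (fst (@b1 Sg s)) s' -> car M s' :=
  fun s' u => eq_rect s (car M) x s' (nth1 _ s s' (proj1_sig u) (proj2_sig u)).
Definition val3 {Sg} (M : model Sg) s (x y z : car M s) : forall s', var (fst (@b3 Sg s)) s' -> car M s' :=
  fun s' u => eq_rect s (car M) (match proj1_sig u with 0 => x | 1 => y | _ => z end) s'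
      (nth3 _ s s' (proj1_sig u) (proj2_sig u)).
Definition rnone {Sg} (M : model Sg) (X : block Sg) : forall s', var (snd X) s' -> car M s' -> car M s' -> Prop :=
  fun _ _ _ _ => True.

Lemma evt_vx1 : forall Sg (M : model Sg) s x r, evt (expand M (b1 s) (val1 M s x) r) (vx1 s) = x.
Proof. intros. simpl. unfold val1. simpl. rewrite (UIP_refl _ _ (nth1 _ _ _ _ _)). reflexivity. Qed.
Lemma evt_vx : forall Sg (M : model Sg) s x y z r, evt (expand M (b3 s) (val3 M s x y z) r) (vx s) = x.
Proof. intros. simpl. unfold val3. simpl. rewrite (UIP_refl _ _ (nth3 _ _ _ _ _)). reflexivity. Qed.
Lemma evt_vy : forall Sg (M : model Sg) s x y z r, evt (expand M (b3 s) (val3 M s x y z) r) (vy s) = y.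
Proof. intros. simpl. unfold val3. simpl. rewrite (UIP_refl _ _ (nth3 _ _ _ _ _)). reflexivity. Qed.
Lemma evt_vz : forall Sg (M : model Sg) s x y z r, evt (expand M (b3 s) (val3 M s x y z) r) (vz s) = z.
Proof. intros. simpl. unfold val3. simpl. rewrite (UIP_refl _ _ (nth3 _ _ _ _ _)). reflexivity. Qed.

Lemma sat_tr : forall Sg s (a : action Sg s) t0 t1 (M : model Sg), sat (sTr a t0 t1) M = aden M a (evt M t0) (evt M t1).
Proof. reflexivity. Qed.

Lemma sat_or_ex : forall Sg (Phi : list (sentence Sg)) M,
  sat (sOr Phi) M -> exists i phi, nth_error Phi i = Some phi /\ sat phi M.
Proof.
  intros Sg Phi M. simpl. induction Phi as [|p Phi IH]; simpl; [tauto|].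
  intros [H|H]; [exists 0, p; auto|]. destruct (IH H) as [i [phi [E Hs]]]. exists (S i), phi; auto.
Qed.
Lemma sat_or_in : forall Sg (Phi : list (sentence Sg)) phi M, In phi Phi -> sat phi M -> sat (sOr Phi) M.
Proof.
  intros Sg Phi phi M. simpl. induction Phi as [|p Phi IH]; simpl; [tauto|].
  intros [E|E] Hs; [subst; left; auto|]. right; apply IH; auto.
Qed.
Lemma sat_and_in : forall Sg (Phi : list (sentence Sg)) phi M, In phi Phi -> sat (sAnd Phi) M -> sat phi M.
Proof.
  intros Sg Phi phi M. simpl. induction Phi as [|p Phi IH]; simpl; [tauto|].
  intros [E|E] [Hs1 Hs2]; [subst; auto|]. auto.
Qed.
Lemma sat_and_all : forall Sg (Phi : list (sentence Sg)) M,
  (forall i phi, nth_error Phi i = Some phi -> sat phi M) -> sat (sAnd Phi) M.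
Proof.
  intros Sg Phi M. simpl. induction Phi as [|p Phi IH]; simpl; [tauto|].
  intros H. split; [apply (H 0); reflexivity|]. apply IH. intros i phi E. apply (H (S i)); auto.
Qed.

Lemma Mods_bigcup : forall Sg (Phi : list (sentence Sg)) GF M i phi,
  Mods M (bigcup Phi GF) -> nth_error Phi i = Some phi -> Mods M (GF i).
Proof. intros. intros psi Hp. apply H. exists i, phi; auto. Qed.
Lemma Some_bigcup : forall Sg (Phi : list (sentence Sg)) DF M i phi,
  nth_error Phi i = Some phi -> Some_ M (DF i) -> Some_ M (bigcup Phi DF).
Proof. intros Sg Phi DF M i phi E [psi [H S]]. exists psi. split; auto. exists i, phi; auto. Qed.

Ltac cls H D := match goal with M : model _ |- _ => destruct (classic (Some_ M D)) as [H|H] end.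

Theorem soundness : forall Sg G D, deriv Sg G D -> valid Sg G D.
Proof.
  intros Sg G D H. induction H; intros M HM.
  - apply Mods_cup in HM as [HM _]. apply Some_cupr. apply (bderiv_sound _ _ _ H1 M HM).
  - apply Mods_add in HM as [HP _]. destruct HP.
  - apply Mods_add in HM as [[HP|HP] HM]; apply Mods_cup in HM as [HM0 HM1].
    + apply Some_cupl. apply (vL _ _ _ _ _ IHderiv1 HM0 HP).
    + apply Some_cupr. apply (vL _ _ _ _ _ IHderiv2 HM1 HP).
  - cls HS D; [apply Some_addr; auto|]. apply Some_add. simpl. left. exact (vR _ _ _ _ _ IHderiv HM HS).
  - cls HS D; [apply Some_addr; auto|]. apply Some_add. simpl. right. exact (vR _ _ _ _ _ IHderiv HM HS).
  - apply Mods_add in HM as [HP HM]; apply Mods_cup in HM as [HM0 HM1].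
    cls HS D0; [apply Some_cupl; auto|]. apply Some_cupr. pose proof (vR _ _ _ _ _ IHderiv1 HM0 HS).
    destruct HP as [HP|HP]; [contradiction|]. apply (vL _ _ _ _ _ IHderiv2 HM1 HP).
  - destruct (classic (aden M a0 (evt M t0) (evt M t1))) as [Ha|Ha].
    + assert (HM' : Mods M (add (sTr a0 t0 t1) G)) by (intros p [E|E]; [subst; auto|auto]).
      destruct (IHderiv M HM') as [psi [[E|E] S]].
      * subst. apply Some_add. simpl. right. auto.
      * apply Some_addr. exists psi; auto.
    + apply Some_add. simpl. left. auto.
  - apply Mods_add in HM as [HP HM]. apply (vL _ _ _ _ _ IHderiv HM HP).
  - cls HS D; [apply Some_addr; auto|]. apply Some_add. exact (vR _ _ _ _ _ IHderiv HM HS).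
  - apply Mods_add in HM as [[y [Hy1 Hy2]] HM].
    set (M' := expand M (b1 s) (val1 M s y) (rnone M (b1 s))).
    assert (HM' : Mods M' (add (sTr (EA (b1 s) a0) (E (b1 s) t0) (vx1 s))
        (add (sTr (EA (b1 s) a1) (vx1 s) (E (b1 s) t1)) (up (b1 s) G)))).
    { intros p [E1|[E1|E1]].
      - subst. rewrite sat_tr. unfold M'. rewrite aden_EA, evt_E, evt_vx1. auto.
      - subst. rewrite sat_tr. unfold M'. rewrite aden_EA, evt_E, evt_vx1. auto.
      - revert p E1. apply Mods_up. assumption. }
    apply (Some_up _ _ _ _ _ _ (IHderiv M' HM')).
  - apply Mods_cup in HM as [HM0 HM1].
    cls HS D; [apply Some_addr, Some_cupl; auto|]. cls HS' D'; [apply Some_addr, Some_cupr; auto|].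
    apply Some_add. simpl. exists (evt M t). split; [exact (vR _ _ _ _ _ IHderiv1 HM0 HS)|exact (vR _ _ _ _ _ IHderiv2 HM1 HS')].
  - apply Mods_add in HM as [[y [Hy1 Hy2]] HM].
    set (M' := expand M (b1 s) (val1 M s y) (rnone M (b1 s))).
    assert (HM' : Mods M' (add (sTr (EA (b1 s) a0) (vx1 s) (E (b1 s) t0))
        (add (sTr (EA (b1 s) a1) (vx1 s) (E (b1 s) t1)) (up (b1 s) G)))).
    { intros p [E1|[E1|E1]].
      - subst. rewrite sat_tr. unfold M'. rewrite aden_EA, evt_E, evt_vx1. auto.
      - subst. rewrite sat_tr. unfold M'. rewrite aden_EA, evt_E, evt_vx1. auto.
      - revert p E1. apply Mods_up. assumption. }
    apply (Some_up _ _ _ _ _ _ (IHderiv M' HM')).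
  - apply Mods_cup in HM as [HM0 HM1].
    cls HS D; [apply Some_addr, Some_cupl; auto|]. cls HS' D'; [apply Some_addr, Some_cupr; auto|].
    apply Some_add. simpl. exists (evt M t). split; [exact (vR _ _ _ _ _ IHderiv1 HM0 HS)|exact (vR _ _ _ _ _ IHderiv2 HM1 HS')].
  - apply Mods_add in HM as [HP HM]; apply Mods_cup in HM as [HM0 HM1].
    cls HS D0; [apply Some_cupl; auto|]. apply Some_cupr. pose proof (vR _ _ _ _ _ IHderiv1 HM0 HS).
    apply (vL _ _ _ _ _ IHderiv2 HM1 (HP H1)).
  - destruct (classic (sat phi M)) as [Hp|Hp].
    + assert (HM' : Mods M (add phi G)) by (intros p [E|E]; [subst; auto|auto]).
      destruct (IHderiv M HM') as [q [[E|E] S]].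
      * subst. apply Some_add. simpl. auto.
      * apply Some_addr. exists q; auto.
    + apply Some_add. simpl. tauto.
  - apply Mods_add in HM as [HP HM]. destruct (sat_or_ex _ _ _ HP) as [i [phi [Ei Sp]]].
    apply (Some_bigcup _ _ _ _ i phi Ei). apply (vL _ _ _ _ _ (H0 i phi Ei) (Mods_bigcup _ _ _ _ _ _ HM Ei) Sp).
  - cls HS D; [apply Some_addr; auto|]. apply Some_add. apply (sat_or_in _ _ phi); auto. exact (vR _ _ _ _ _ IHderiv HM HS).
  - apply Mods_add in HM as [HP HM]. apply (vL _ _ _ _ _ IHderiv HM). apply (sat_and_in _ Phi); auto.
  - cls HS (bigcup Phi DF); [apply Some_addr; auto|]. apply Some_add. apply sat_and_all.
    intros i phi Ei. apply (vR _ _ _ _ _ (H0 i phi Ei) (Mods_bigcup _ _ _ _ _ _ HM Ei)).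
    intros HS'. apply HS. apply (Some_bigcup _ _ _ _ i phi Ei HS').
  - apply Mods_add in HM as [[v [r HP]] HM].
    apply (Some_up _ X D M v r). apply IHderiv. intros p [E|E]; [subst; auto|]. revert p E. apply Mods_up. assumption.
  - cls HS D; [apply Some_addr; auto|]. apply Some_add. pose proof (vR _ _ _ _ _ IHderiv HM HS) as Hi.
    apply sat_inst in Hi. simpl. eauto.
  - apply Mods_add in HM as [HP HM]. apply (vL _ _ _ _ _ IHderiv HM). apply sat_inst. apply HP.
  - cls HS D; [apply Some_addr; auto|]. apply Some_add. simpl. intros v r.
    destruct (IHderiv (expand M X v r) (Mods_up _ _ _ _ _ _ HM)) as [q [[E|E] S]]; [subst; auto|].
    exfalso. apply HS. apply (Some_up _ X D M v r). exists q; auto.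
  - apply Mods_add in HM as [HP _]. apply Some_add. auto.
  - apply Mods_cup in HM as [HM0 HM1]. cls HS D0; [apply Some_cupl; auto|]. apply Some_cupr.
    apply (vL _ _ _ _ _ IHderiv2 HM1 (vR _ _ _ _ _ IHderiv1 HM0 HS)).
  - cls HS D; [apply Some_addr; auto|]. apply Some_add. simpl. pose proof (vR _ _ _ _ _ IHderiv HM HS) as E1.
    simpl in E1. rewrite E1. apply rt_refl.
  - apply Mods_cup in HM as [HM0 HM1].
    cls HS D; [apply Some_addr, Some_cupl; auto|]. cls HS' D'; [apply Some_addr, Some_cupr; auto|].
    apply Some_add. simpl. eapply rt_trans; [exact (vR _ _ _ _ _ IHderiv1 HM0 HS)|]. apply rt_step. exact (vR _ _ _ _ _ IHderiv2 HM1 HS').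
  - apply Mods_cup in HM as [HM0 HM1].
    cls HS D; [apply Some_addr, Some_cupl; auto|]. cls HS' D'; [apply Some_addr, Some_cupr; auto|].
    apply Some_add. simpl. eapply rt_trans; [apply rt_step; exact (vR _ _ _ _ _ IHderiv1 HM0 HS)|]. exact (vR _ _ _ _ _ IHderiv2 HM1 HS').
  - apply Mods_add in HM as [HP HM]. apply Mods_cup in HM as [HML HM]. apply Mods_cup in HM as [HMM HMR].
    cls HL DL; [apply Some_cupl; auto|]. cls HMd DM; [apply Some_cupr, Some_cupl; auto|].
    apply Some_cupr, Some_cupr.
    pose proof (vR _ _ _ _ _ IHderiv1 HML HL) as Hb. simpl in Hb.
    assert (Hstep : forall x y z, aden M tt z x -> aden M a x y -> aden M tt z y).
    { intros x y z Hzx Hxy.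
      set (M' := expand M (b3 s) (val3 M s x y z) (rnone M (b3 s))).
      assert (HM' : Mods M' (add (sTr (EA (b3 s) tt) (vz s) (vx s)) (add (sTr (EA (b3 s) a) (vx s) (vy s)) (up (b3 s) GM)))).
      { intros p [E1|[E1|E1]].
        - subst. rewrite sat_tr. unfold M'. rewrite aden_EA, evt_vx, evt_vz. auto.
        - subst. rewrite sat_tr. unfold M'. rewrite aden_EA, evt_vx, evt_vy. auto.
        - revert p E1. apply Mods_up. assumption. }
      destruct (IHderiv2 M' HM') as [q [[E1|E1] S]].
      - subst. rewrite sat_tr in S. unfold M' in S. rewrite aden_EA, evt_vy, evt_vz in S. auto.
      - exfalso. apply HMd. apply (Some_up _ _ _ _ _ _ (ex_intro _ q (conj E1 S))). }
    assert (Hcl : forall x y, clos_refl_trans _ (aden M a) x y -> forall z, aden M tt z x -> aden M tt z y).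
    { intros x y Hr. induction Hr; intros; eauto. }
    apply (vL _ _ _ _ _ IHderiv3 HMR). simpl. apply (Hcl _ _ HP _ Hb).
  - apply Mods_add in HM as [HP HM]. apply Mods_cup in HM as [HML HM]. apply Mods_cup in HM as [HMM HMR].
    cls HL DL; [apply Some_cupl; auto|]. cls HMd DM; [apply Some_cupr, Some_cupl; auto|].
    apply Some_cupr, Some_cupr.
    pose proof (vR _ _ _ _ _ IHderiv1 HML HL) as Hb. simpl in Hb.
    assert (Hstep : forall x y z, aden M a x y -> aden M tt y z -> aden M tt x z).
    { intros x y z Hxy Hyz.
      set (M' := expand M (b3 s) (val3 M s x y z) (rnone M (b3 s))).
      assert (HM' : Mods M' (add (sTr (EA (b3 s) a) (vx s) (vy s)) (add (sTr (EA (b3 s) tt) (vy s) (vz s)) (up (b3 s) GM)))).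
      { intros p [E1|[E1|E1]].
        - subst. rewrite sat_tr. unfold M'. rewrite aden_EA, evt_vx, evt_vy. auto.
        - subst. rewrite sat_tr. unfold M'. rewrite aden_EA, evt_vy, evt_vz. auto.
        - revert p E1. apply Mods_up. assumption. }
      destruct (IHderiv2 M' HM') as [q [[E1|E1] S]].
      - subst. rewrite sat_tr in S. unfold M' in S. rewrite aden_EA, evt_vx, evt_vz in S. auto.
      - exfalso. apply HMd. apply (Some_up _ _ _ _ _ _ (ex_intro _ q (conj E1 S))). }
    assert (Hcl : forall x y, clos_refl_trans _ (aden M a) x y -> forall z, aden M tt y z -> aden M tt x z).
    { intros x y Hr. induction Hr; intros; eauto. }
    apply (vL _ _ _ _ _ IHderiv3 HMR). simpl. apply (Hcl _ _ HP _ Hb).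
Qed.

Ltac dep_inv H :=
  let e := fresh "e" in
  pose proof (f_equal (@projT1 _ _) H) as e; simpl in e; subst; apply inj_pair2 in H.

Inductive sym (Sg : sig) : Type :=
| ySort (s : srt Sg)
| yFun (w : list (srt Sg)) (s : srt Sg) (f : fsym Sg w s)
| yLab (s : srt Sg) (l : lab Sg s).
Arguments ySort {Sg} s.
Arguments yFun {Sg w s} f.
Arguments yLab {Sg s} l.

Fixpoint syms_t {Sg s} (t : term Sg s) : list (sym Sg) :=
  match t with app f ts => yFun f :: syms_ts ts end
with syms_ts {Sg w} (ts : terms Sg w) : list (sym Sg) :=
  match ts with tnil => [] | tcons t ts => syms_t t ++ syms_ts ts end.

Fixpoint syms_a {Sg s} (a : action Sg s) : list (sym Sg) :=
  match a with
  | alab l => [yLab l]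
  | azero s => [ySort s]
  | aone s => [ySort s]
  | aunion a b => syms_a a ++ syms_a b
  | aimp a b => syms_a a ++ syms_a b
  | aseq a b => syms_a a ++ syms_a b
  | arel a b => syms_a a ++ syms_a b
  | astar a => syms_a a
  end.

Definition proj_y {Sg X} (y : sym (ext Sg X)) : list (sym Sg) :=
  match y with
  | ySort s => [@ySort Sg s]
  | @yFun _ w s f => match f with inl g => [@yFun Sg w s g] | inr _ => [] end
  | @yLab _ s l => match l with inl l0 => [@yLab Sg s l0] | inr _ => [] end
  end.
Definition proj_ext {Sg X} (L : list (sym (ext Sg X))) : list (sym Sg) := flat_map proj_y L.

Fixpoint syms {Sg} (phi : sentence Sg) {struct phi} : list (sym Sg) :=
  match phi in sentence S0 return list (sym S0) with
  | sEq t0 t1 => syms_t t0 ++ syms_t t1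
  | sTr a t0 t1 => syms_a a ++ syms_t t0 ++ syms_t t1
  | sImp p q => syms p ++ syms q
  | @sOr S0 l => (fix go (l : list (sentence S0)) := match l with [] => [] | p :: l => syms p ++ go l end) l
  | @sAnd S0 l => (fix go (l : list (sentence S0)) := match l with [] => [] | p :: l => syms p ++ go l end) l
  | sEx X p => map ySort (fst X ++ snd X) ++ proj_ext (syms p)
  | sAll X p => map ySort (fst X ++ snd X) ++ proj_ext (syms p)
  end.

Definition covers {Sf Sg} (i : sigmor Sf Sg) (y : sym Sg) : Prop :=
  match y with
  | ySort s => exists s', ss i s' = s
  | @yFun _ w s f => exists w' s' (f' : fsym Sf w' s'),
      existT (fun w => {s & fsym Sg w s}) (map (ss i) w') (existT _ (ss i s') (sf i f')) =
      existT _ w (existT _ s f)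
  | @yLab _ s l => exists s' (l' : lab Sf s'), existT (lab Sg) (ss i s') (sl i l') = existT _ s l
  end.
Definition Cov {Sf Sg} (i : sigmor Sf Sg) (L : list (sym Sg)) : Prop := forall y, In y L -> covers i y.

Lemma Cov_app : forall Sf Sg (i : sigmor Sf Sg) L1 L2, Cov i (L1 ++ L2) <-> Cov i L1 /\ Cov i L2.
Proof.
  unfold Cov. intros. split.
  - intros H. split; intros; apply H; apply in_or_app; auto.
  - intros [H1 H2] y Hy. apply in_app_or in Hy as [?|?]; auto.
Qed.
Lemma Cov_cons : forall Sf Sg (i : sigmor Sf Sg) y L, Cov i (y :: L) <-> covers i y /\ Cov i L.
Proof.
  unfold Cov. intros. split.
  - intros H. split; [apply H; left; auto|]. intros; apply H; right; auto.
  - intros [H1 H2] y' [E|Hy]; [subst|]; auto.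
Qed.

Lemma map_inj : forall A B (f : A -> B), (forall x y, f x = f y -> x = y) ->
  forall l1 l2, map f l1 = map f l2 -> l1 = l2.
Proof.
  intros A B f Hf l1. induction l1 as [|a l1 IH]; intros [|b l2] H; simpl in H; try discriminate; auto.
  injection H as H1 H2. f_equal; auto.
Qed.

Section Inj.
Context {Sf Sg : sig} (i : sigmor Sf Sg) (Hi : injective_sigmor i).

Definition hd_of {S s} (t : term S s) : {w & (fsym S w s * terms S w)%type} :=
  match t with app f ts => existT _ _ (f, ts) end.

Lemma ss_inj : forall s s', ss i s = ss i s' -> s = s'.
Proof. apply (proj1 Hi). Qed.
Lemma mapss_inj : forall w w', map (ss i) w = map (ss i) w' -> w = w'.
Proof. apply map_inj. apply ss_inj. Qed.

Lemma trt_inj :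
  (forall s (t : term Sf s) s' (t' : term Sf s'),
    existT (term Sg) (ss i s) (trt (mor_of i) t) = existT _ (ss i s') (trt (mor_of i) t') ->
    existT (term Sf) s t = existT _ s' t') /\
  (forall w (ts ts' : terms Sf w), trts (mor_of i) ts = trts (mor_of i) ts' -> ts = ts').
Proof.
  apply term_terms_ind.
  - intros w s f ts IH s' [w' s'' f' ts'] H. simpl in H.
    pose proof (f_equal (@projT1 _ _) H) as e. simpl in e. apply ss_inj in e. subst s''.
    apply inj_pair2 in H.
    pose proof (f_equal hd_of H) as H2. simpl in H2.
    pose proof (f_equal (@projT1 _ _) H2) as e. simpl in e. apply mapss_inj in e. subst w'.
    apply inj_pair2 in H2. injection H2 as H3 H4.
    apply (proj1 (proj2 Hi)) in H3. subst f'. apply IH in H4. subst ts'. reflexivity.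
  - intros ts' _. dependent destruction ts'. reflexivity.
  - intros s w t IH ts IH2 ts' H. dependent destruction ts'. simpl in H. injection H as H1 H2.
    apply inj_pair2 in H1. apply inj_pair2 in H2.
    assert (E1 := IH _ t0 (f_equal (existT _ _) H1)). apply inj_pair2 in E1. subst.
    apply IH2 in H2. subst. reflexivity.
Qed.

Lemma trt_inj1 : forall s (t t' : term Sf s), trt (mor_of i) t = trt (mor_of i) t' -> t = t'.
Proof.
  intros. assert (E1 := proj1 trt_inj _ t _ t' (f_equal (existT _ _) H)). apply inj_pair2 in E1. auto.
Qed.

Lemma tra_inj : forall s (a : action Sf s) s' (a' : action Sf s'),
  existT (action Sg) (ss i s) (tra (mor_of i) a) = existT _ (ss i s') (tra (mor_of i) a') ->
  existT (action Sf) s a = existT _ s' a'.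
Proof.
  intros s a. induction a; intros s' a' H; destruct a'; simpl in H;
   pose proof (f_equal (@projT1 _ _) H) as e; simpl in e; apply ss_inj in e; subst; apply inj_pair2 in H;
   try discriminate; try reflexivity.
  - injection H as H. apply inj_pair2 in H. apply (proj2 (proj2 Hi)) in H. subst. reflexivity.
  - injection H as H1 H2. apply inj_pair2 in H1. apply inj_pair2 in H2.
    specialize (IHa1 _ a'1 (f_equal (existT _ _) H1)). specialize (IHa2 _ a'2 (f_equal (existT _ _) H2)).
    apply inj_pair2 in IHa1. apply inj_pair2 in IHa2. subst. reflexivity.
  - injection H as H1 H2. apply inj_pair2 in H1. apply inj_pair2 in H2.
    specialize (IHa1 _ a'1 (f_equal (existT _ _) H1)). specialize (IHa2 _ a'2 (f_equal (existT _ _) H2)).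
    apply inj_pair2 in IHa1. apply inj_pair2 in IHa2. subst. reflexivity.
  - injection H as H1 H2. apply inj_pair2 in H1. apply inj_pair2 in H2.
    specialize (IHa1 _ a'1 (f_equal (existT _ _) H1)). specialize (IHa2 _ a'2 (f_equal (existT _ _) H2)).
    apply inj_pair2 in IHa1. apply inj_pair2 in IHa2. subst. reflexivity.
  - injection H as H1 H2. apply inj_pair2 in H1. apply inj_pair2 in H2.
    specialize (IHa1 _ a'1 (f_equal (existT _ _) H1)). specialize (IHa2 _ a'2 (f_equal (existT _ _) H2)).
    apply inj_pair2 in IHa1. apply inj_pair2 in IHa2. subst. reflexivity.
  - injection H as H1. apply inj_pair2 in H1.
    specialize (IHa _ a' (f_equal (existT _ _) H1)). apply inj_pair2 in IHa. subst. reflexivity.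
Qed.

Lemma tra_inj1 : forall s (a a' : action Sf s), tra (mor_of i) a = tra (mor_of i) a' -> a = a'.
Proof.
  intros. assert (E1 := tra_inj _ a _ a' (f_equal (existT _ _) H)). apply inj_pair2 in E1. auto.
Qed.

Lemma trt_pre :
  (forall s (t : term Sg s), Cov i (syms_t t) ->
     exists s' (t' : term Sf s'), existT (term Sg) (ss i s') (trt (mor_of i) t') = existT _ s t) /\
  (forall w (ts : terms Sg w), Cov i (syms_ts ts) ->
     exists w' (ts' : terms Sf w'), existT (terms Sg) (map (ss i) w') (trts (mor_of i) ts') = existT _ w ts).
Proof.
  apply term_terms_ind.
  - intros w s f ts IH HC. simpl in HC. apply Cov_cons in HC as [[w' [s' [f' Hf]]] HC].
    pose proof (f_equal (@projT1 _ _) Hf) as e; simpl in e; subst w. apply inj_pair2 in Hf.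
    pose proof (f_equal (@projT1 _ _) Hf) as e; simpl in e; subst s. apply inj_pair2 in Hf. subst f.
    destruct (IH HC) as [w'' [ts' Hts]].
    pose proof (f_equal (@projT1 _ _) Hts) as e; simpl in e. apply mapss_inj in e. subst w''.
    apply inj_pair2 in Hts. subst ts. exists s', (app f' ts'). reflexivity.
  - intros _. exists [], tnil. reflexivity.
  - intros s w t IH ts IH2 HC. simpl in HC. apply Cov_app in HC as [H1 H2].
    destruct (IH H1) as [s' [t' Ht]]. destruct (IH2 H2) as [w' [ts' Hts]].
    dep_inv Ht. dep_inv Hts. subst. exists (s' :: w'), (tcons t' ts'). reflexivity.
Qed.

Lemma tra_pre : forall s (a : action Sg s), Cov i (syms_a a) ->
  exists s' (a' : action Sf s'), existT (action Sg) (ss i s') (tra (mor_of i) a') = existT _ s a.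
Proof.
  intros s a. induction a; simpl; intros HC; try (apply Cov_app in HC as [H1 H2]).
  - apply Cov_cons in HC as [[s' [l' Hl]] _]. dep_inv Hl. subst. exists s', (alab l'). reflexivity.
  - apply Cov_cons in HC as [[s' Hs] _]. subst. exists s', (azero s'). reflexivity.
  - apply Cov_cons in HC as [[s' Hs] _]. subst. exists s', (aone s'). reflexivity.
  - destruct (IHa1 H1) as [s1 [b1 E1]]. destruct (IHa2 H2) as [s2 [b2 E2]].
    dep_inv E1. pose proof (f_equal (@projT1 _ _) E2) as e2; simpl in e2; apply ss_inj in e2; subst; apply inj_pair2 in E2; subst. exists s1, (aunion b1 b2). reflexivity.
  - destruct (IHa1 H1) as [s1 [b1 E1]]. destruct (IHa2 H2) as [s2 [b2 E2]].
    dep_inv E1. pose proof (f_equal (@projT1 _ _) E2) as e2; simpl in e2; apply ss_inj in e2; subst; apply inj_pair2 in E2; subst. exists s1, (aimp b1 b2). reflexivity.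
  - destruct (IHa1 H1) as [s1 [b1 E1]]. destruct (IHa2 H2) as [s2 [b2 E2]].
    dep_inv E1. pose proof (f_equal (@projT1 _ _) E2) as e2; simpl in e2; apply ss_inj in e2; subst; apply inj_pair2 in E2; subst. exists s1, (aseq b1 b2). reflexivity.
  - destruct (IHa1 H1) as [s1 [b1 E1]]. destruct (IHa2 H2) as [s2 [b2 E2]].
    dep_inv E1. pose proof (f_equal (@projT1 _ _) E2) as e2; simpl in e2; apply ss_inj in e2; subst; apply inj_pair2 in E2; subst. exists s1, (arel b1 b2). reflexivity.
  - destruct (IHa HC) as [s1 [b1 E1]]. dep_inv E1. subst. exists s1, (astar b1). reflexivity.
Qed.

Lemma trt_pre1 : forall s (t : term Sg (ss i s)), Cov i (syms_t t) -> exists t', trt (mor_of i) t' = t.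
Proof.
  intros. destruct (proj1 trt_pre _ t H) as [s' [t' E1]].
  pose proof (f_equal (@projT1 _ _) E1) as e; simpl in e. apply ss_inj in e. subst.
  apply inj_pair2 in E1. eauto.
Qed.
Lemma tra_pre1 : forall s (a : action Sg (ss i s)), Cov i (syms_a a) -> exists a', tra (mor_of i) a' = a.
Proof.
  intros. destruct (tra_pre _ a H) as [s' [a' E1]].
  pose proof (f_equal (@projT1 _ _) E1) as e; simpl in e. apply ss_inj in e. subst.
  apply inj_pair2 in E1. eauto.
Qed.
End Inj.

Definition Rel3 {S3 : sig} {w1 w2 : list (srt S3)} {s1 s2 : srt S3}
  (x : (fsym S3 w1 s1 + term S3 s1)%type) (y : (fsym S3 w2 s2 + term S3 s2)%type) : Prop :=
  match x, y with
  | inl h1, inl h2 => existT (fun w => {s & fsym S3 w s}) w1 (existT _ s1 h1) = existT _ w2 (existT _ s2 h2)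
  | inr u1, inr u2 => existT (term S3) s1 u1 = existT _ s2 u2
  | _, _ => False
  end.

Definition comp12 {S1 S2 S3} (m1 : mor S1 S2) (m2 : mor S2 S3) {w s} (f : fsym S1 w s)
  : (fsym S3 (map (ms m2) (map (ms m1) w)) (ms m2 (ms m1 s)) + term S3 (ms m2 (ms m1 s)))%type :=
  match mf m1 f with inl g => mf m2 g | inr u => inr (trt m2 u) end.

Record CR {S1 S2 S3} (m1 : mor S1 S2) (m2 : mor S2 S3) (m3 : mor S1 S3) : Prop := {
  cr_s : forall s, ms m3 s = ms m2 (ms m1 s);
  cr_f : forall w s (f : fsym S1 w s), Rel3 (mf m3 f) (comp12 m1 m2 f);
  cr_l : forall s (l : lab S1 s), existT (action S3) _ (ml m3 l) = existT _ _ (tra m2 (ml m1 l)) }.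

Lemma app_cong : forall S w1 w2 s1 s2 (h1 : fsym S w1 s1) (h2 : fsym S w2 s2) ts1 ts2,
  existT (fun w => {s & fsym S w s}) w1 (existT _ s1 h1) = existT _ w2 (existT _ s2 h2) ->
  existT (terms S) w1 ts1 = existT _ w2 ts2 ->
  existT (term S) s1 (app h1 ts1) = existT _ s2 (app h2 ts2).
Proof.
  intros. dep_inv H. dep_inv H. subst. dep_inv H0. subst. reflexivity.
Qed.
Lemma tcons_cong : forall S s1 s2 w1 w2 (t1 : term S s1) (t2 : term S s2) (ts1 : terms S w1) (ts2 : terms S w2),
  existT (term S) s1 t1 = existT _ s2 t2 -> existT (terms S) w1 ts1 = existT _ w2 ts2 ->
  existT (terms S) (s1 :: w1) (tcons t1 ts1) = existT _ (s2 :: w2) (tcons t2 ts2).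
Proof. intros. dep_inv H. dep_inv H0. subst. reflexivity. Qed.
Lemma bin_cong : forall S (C : forall s, action S s -> action S s -> action S s) s1 s2 a1 a2 b1 b2,
  existT (action S) s1 a1 = existT _ s2 a2 -> existT (action S) s1 b1 = existT _ s2 b2 ->
  existT (action S) s1 (C s1 a1 b1) = existT _ s2 (C s2 a2 b2).
Proof. intros. dep_inv H. apply inj_pair2 in H0. subst. reflexivity. Qed.
Lemma un_cong : forall S (C : forall s, action S s -> action S s) s1 s2 a1 a2,
  existT (action S) s1 a1 = existT _ s2 a2 -> existT (action S) s1 (C s1 a1) = existT _ s2 (C s2 a2).
Proof. intros. dep_inv H. subst. reflexivity. Qed.

Section CRT.
Context {S1 S2 S3} (m1 : mor S1 S2) (m2 : mor S2 S3) (m3 : mor S1 S3) (H : CR m1 m2 m3).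

Lemma cr_term :
  (forall s (t : term S1 s), existT (term S3) _ (trt m3 t) = existT _ _ (trt m2 (trt m1 t))) /\
  (forall w (ts : terms S1 w), existT (terms S3) _ (trts m3 ts) = existT _ _ (trts m2 (trts m1 ts))).
Proof.
  apply term_terms_ind.
  - intros w s f ts IH. pose proof (cr_f _ _ _ H w s f) as R. unfold comp12 in R. simpl.
    destruct (mf m1 f) as [g|u]; simpl.
    + destruct (mf m3 f) as [h3|u3]; destruct (mf m2 g) as [h2|u2]; simpl in R; try contradiction.
      * apply app_cong; auto.
      * exact R.
    + destruct (mf m3 f) as [h3|u3]; simpl in R; try contradiction. exact R.
  - reflexivity.
  - intros s w t IH ts IH2. simpl. apply tcons_cong; auto.
Qed.

Lemma cr_action : forall s (a : action S1 s), existT (action S3) _ (tra m3 a) = existT _ _ (tra m2 (tra m1 a)).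
Proof.
  intros s a. induction a; simpl.
  - apply (cr_l _ _ _ H).
  - rewrite (cr_s _ _ _ H s). reflexivity.
  - rewrite (cr_s _ _ _ H s). reflexivity.
  - apply (bin_cong _ (fun s => @aunion S3 s)); auto.
  - apply (bin_cong _ (fun s => @aimp S3 s)); auto.
  - apply (bin_cong _ (fun s => @aseq S3 s)); auto.
  - apply (bin_cong _ (fun s => @arel S3 s)); auto.
  - apply (un_cong _ (fun s => @astar S3 s)); auto.
Qed.
End CRT.

Section Ret.
Context {T S3 : sig}.

Definition tf {Z Z' : block S3} (e : Z = Z') {w s} (x : (fsym (ext S3 Z) w s + term (ext S3 Z) s)%type)
  : (fsym (ext S3 Z') w s + term (ext S3 Z') s)%type :=
  eq_rect Z (fun Z0 => (fsym (ext S3 Z0) w s + term (ext S3 Z0) s)%type) x Z' e.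
Definition tt_ {Z Z' : block S3} (e : Z = Z') {s} (x : term (ext S3 Z) s) : term (ext S3 Z') s :=
  eq_rect Z (fun Z0 => term (ext S3 Z0) s) x Z' e.
Definition ta {Z Z' : block S3} (e : Z = Z') {s} (x : action (ext S3 Z) s) : action (ext S3 Z') s :=
  eq_rect Z (fun Z0 => action (ext S3 Z0) s) x Z' e.

Definition retarget {Z Z' : block S3} (e : Z = Z') (n : mor T (ext S3 Z)) : mor T (ext S3 Z') :=
  Mor T (ext S3 Z') (ms n) (fun w s f => tf e (mf n f)) (fun s l => ta e (ml n l)).

Lemma retarget_refl : forall Z (n : mor T (ext S3 Z)), retarget (@eq_refl _ Z) n = n.
Proof. intros Z [a b c]. reflexivity. Qed.

Lemma trs_retarget_ex : forall Z Z' (e : Z = Z') (n : mor T (ext S3 Z)) (p : sentence T),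
  sEx Z (trs p _ n) = sEx Z' (trs p _ (retarget e n)).
Proof. intros. destruct e. destruct n. reflexivity. Qed.
Lemma trs_retarget_all : forall Z Z' (e : Z = Z') (n : mor T (ext S3 Z)) (p : sentence T),
  sAll Z (trs p _ n) = sAll Z' (trs p _ (retarget e n)).
Proof. intros. destruct e. destruct n. reflexivity. Qed.
Lemma trt_retarget : forall Z Z' (e : Z = Z') (n : mor T (ext S3 Z)) s (t : term T s),
  trt (retarget e n) t = tt_ e (trt n t).
Proof. intros. destruct e. destruct n. reflexivity. Qed.
Lemma tra_retarget : forall Z Z' (e : Z = Z') (n : mor T (ext S3 Z)) s (a : action T s),
  tra (retarget e n) a = ta e (tra n a).
Proof. intros. destruct e. destruct n. reflexivity. Qed.

Lemma tf_inl_inl : forall Z Z' (e : Z = Z') w s (h : fsym S3 w s),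
  tf e (inl (inl h) : (fsym (ext S3 Z) w s + term (ext S3 Z) s)%type) = inl (inl h).
Proof. intros. destruct e. reflexivity. Qed.
Lemma tf_inr : forall Z Z' (e : Z = Z') w s (u : term (ext S3 Z) s),
  tf e (inr u : (fsym (ext S3 Z) w s + term (ext S3 Z) s)%type) = inr (tt_ e u).
Proof. intros. destruct e. reflexivity. Qed.
Lemma tt_embt : forall Z Z' (e : Z = Z') s (u : term S3 s), tt_ e (embt Z u) = embt Z' u.
Proof. intros. destruct e. reflexivity. Qed.
Lemma ta_emba : forall Z Z' (e : Z = Z') s (a : action S3 s), ta e (emba Z a) = emba Z' a.
Proof. intros. destruct e. reflexivity. Qed.
Lemma tf_var : forall Z Z' (e : Z = Z') s (v : var (fst Z) s),
  exists v' : var (fst Z') s,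
  tf e (inl (inr v) : (fsym (ext S3 Z) [] s + term (ext S3 Z) s)%type) = inl (inr v') /\ proj1_sig v' = proj1_sig v.
Proof. intros. destruct e. exists v. auto. Qed.
Lemma ta_var : forall Z Z' (e : Z = Z') s (v : var (snd Z) s),
  exists v' : var (snd Z') s,
  ta e (@alab (ext S3 Z) s (inr v)) = @alab (ext S3 Z') s (inr v') /\ proj1_sig v' = proj1_sig v.
Proof. intros. destruct e. exists v. auto. Qed.
End Ret.

Lemma var_existT : forall A (l : list A) s s' (v : var l s) (v' : var l s'),
  proj1_sig v = proj1_sig v' -> existT (var l) s v = existT _ s' v'.
Proof.
  intros A l s s' [i e] [i' e'] E. simpl in E. subst i'.
  assert (s = s') by congruence. subst s'. f_equal. f_equal. apply proof_irrelevance.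
Qed.

Lemma trt_lift_embt : forall S1 S2 (m : mor S1 S2) (Y : block S1),
  (forall s (u : term S1 s), trt (lift m Y) (embt Y u) = embt (mapb (ms m) Y) (trt m u)) /\
  (forall w (us : terms S1 w), trts (lift m Y) (embts Y us) = embts (mapb (ms m) Y) (trts m us)).
Proof.
  intros. apply term_terms_ind.
  - intros w s f ts IH. simpl. destruct (mf m f); simpl; [rewrite IH|]; reflexivity.
  - reflexivity.
  - intros s w t IH ts IH2. simpl. rewrite IH, IH2. reflexivity.
Qed.
Lemma tra_lift_emba : forall S1 S2 (m : mor S1 S2) (Y : block S1) s (a : action S1 s),
  tra (lift m Y) (emba Y a) = emba (mapb (ms m) Y) (tra m a).
Proof.
  intros. induction a; simpl; try rewrite IHa1, IHa2; try rewrite IHa; reflexivity.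
Qed.

Lemma embt_cong : forall S (Z : block S) s1 s2 (u1 : term S s1) (u2 : term S s2),
  existT (term S) s1 u1 = existT _ s2 u2 -> existT (term (ext S Z)) s1 (embt Z u1) = existT _ s2 (embt Z u2).
Proof. intros. dep_inv H. subst. reflexivity. Qed.
Lemma emba_cong : forall S (Z : block S) s1 s2 (u1 : action S s1) (u2 : action S s2),
  existT (action S) s1 u1 = existT _ s2 u2 -> existT (action (ext S Z)) s1 (emba Z u1) = existT _ s2 (emba Z u2).
Proof. intros. dep_inv H. subst. reflexivity. Qed.
Lemma inl_cong : forall S (Z : block S) w1 w2 s1 s2 (h1 : fsym S w1 s1) (h2 : fsym S w2 s2),
  existT (fun w => {s & fsym S w s}) w1 (existT _ s1 h1) = existT _ w2 (existT _ s2 h2) ->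
  existT (fun w => {s & fsym (ext S Z) w s}) w1 (existT _ s1 (inl h1)) = existT _ w2 (existT _ s2 (inl h2)).
Proof. intros. dep_inv H. dep_inv H. subst. reflexivity. Qed.

Lemma Rel3_tf_embt : forall S3 (Z Z' : block S3) (e : Z = Z') w1 w2 s1 s2 (u1 : term S3 s1) (u2 : term S3 s2),
  existT (term S3) s1 u1 = existT _ s2 u2 ->
  Rel3 (inr (embt Z' u1) : (fsym (ext S3 Z') w1 s1 + term (ext S3 Z') s1)%type)
       (tf e (inr (embt Z u2) : (fsym (ext S3 Z) w2 s2 + term (ext S3 Z) s2)%type)).
Proof. intros. destruct e. simpl. apply embt_cong. auto. Qed.
Lemma Rel3_tf_inl : forall S3 (Z Z' : block S3) (e : Z = Z') w1 w2 s1 s2 (h1 : fsym S3 w1 s1) (h2 : fsym S3 w2 s2),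
  existT (fun w => {s & fsym S3 w s}) w1 (existT _ s1 h1) = existT _ w2 (existT _ s2 h2) ->
  Rel3 (inl (inl h1) : (fsym (ext S3 Z') w1 s1 + term (ext S3 Z') s1)%type)
       (tf e (inl (inl h2) : (fsym (ext S3 Z) w2 s2 + term (ext S3 Z) s2)%type)).
Proof. intros. destruct e. simpl. apply inl_cong. auto. Qed.
Lemma Rel3_tf_var : forall S3 (Z Z' : block S3) (e : Z = Z') s1 s2 (v1 : var (fst Z') s1) (v2 : var (fst Z) s2),
  proj1_sig v1 = proj1_sig v2 ->
  Rel3 (inl (inr v1) : (fsym (ext S3 Z') [] s1 + term (ext S3 Z') s1)%type)
       (tf e (inl (inr v2) : (fsym (ext S3 Z) [] s2 + term (ext S3 Z) s2)%type)).
Proof.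
  intros. destruct e. simpl. pose proof (var_existT _ _ _ _ v1 v2 H) as E1. dep_inv E1. subst. reflexivity.
Qed.

Lemma mapb_comp : forall S1 S2 S3 (m1 : mor S1 S2) (m2 : mor S2 S3) (m3 : mor S1 S3),
  CR m1 m2 m3 -> forall X, mapb (ms m2) (mapb (ms m1) X) = mapb (ms m3) X.
Proof.
  intros. unfold mapb. simpl. rewrite !map_map. f_equal; apply map_ext; intros; rewrite (cr_s _ _ _ H); auto.
Qed.

Lemma CR_lift : forall S1 S2 S3 (m1 : mor S1 S2) (m2 : mor S2 S3) (m3 : mor S1 S3) (H : CR m1 m2 m3) X,
  CR (lift m1 X) (retarget (mapb_comp _ _ _ _ _ _ H X) (lift m2 (mapb (ms m1) X))) (lift m3 X).
Proof.
  intros. set (e := mapb_comp _ _ _ _ _ _ H X). constructor.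
  - intros s. apply (cr_s _ _ _ H).
  - intros w s [g|v].
    + pose proof (cr_f _ _ _ H w s g) as R. unfold comp12 in R |- *. simpl.
      destruct (mf m1 g) as [g2|u1]; simpl.
      * destruct (mf m3 g) as [h3|u3]; destruct (mf m2 g2) as [h2|u2]; simpl in R; try contradiction.
        -- apply Rel3_tf_inl. exact R.
        -- apply Rel3_tf_embt. exact R.
      * destruct (mf m3 g) as [h3|u3]; simpl in R; try contradiction. simpl.
        rewrite trt_retarget, (proj1 (trt_lift_embt _ _ _ _)), tt_embt. exact (embt_cong S3 (mapb (ms m3) X) _ _ u3 _ R).
    + destruct w; [|destruct v]. unfold comp12. simpl.
      exact (Rel3_tf_var S3 _ _ e _ _ (mapvar (ms m3) (fst X) s v)
        (mapvar (ms m2) (map (ms m1) (fst X)) (ms m1 s) (mapvar (ms m1) (fst X) s v)) eq_refl).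
  - intros s [l0|v]; simpl.
    + rewrite tra_retarget, tra_lift_emba, ta_emba. apply emba_cong. apply (cr_l _ _ _ H).
    + destruct (ta_var _ _ e _ (mapvar (ms m2) (map (ms m1) (snd X)) (ms m1 s) (mapvar (ms m1) (snd X) s v))) as [v' [E1 E2]].
      simpl in E1. rewrite E1. pose proof (var_existT _ _ _ _ (mapvar (ms m3) (snd X) s v) v' (eq_sym E2)) as HV.
      exact (f_equal (fun p : sigT (var (map (ms m3) (snd X))) =>
        existT (action (ext S3 (mapb (ms m3) X))) (projT1 p) (@alab (ext S3 (mapb (ms m3) X)) _ (inr (projT2 p)))) HV).
Qed.

Lemma sEq_cong : forall S s1 s2 (a b : term S s1) (c d : term S s2),
  existT (term S) s1 a = existT _ s2 c -> existT (term S) s1 b = existT _ s2 d -> sEq a b = sEq c d.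
Proof. intros. dep_inv H. apply inj_pair2 in H0. subst. reflexivity. Qed.
Lemma sTr_cong : forall S s1 s2 (x : action S s1) (y : action S s2) (a b : term S s1) (c d : term S s2),
  existT (action S) s1 x = existT _ s2 y ->
  existT (term S) s1 a = existT _ s2 c -> existT (term S) s1 b = existT _ s2 d -> sTr x a b = sTr y c d.
Proof. intros. dep_inv H. apply inj_pair2 in H0. apply inj_pair2 in H1. subst. reflexivity. Qed.

Lemma cr_sent : forall S1 (phi : sentence S1) S2 S3 (m1 : mor S1 S2) (m2 : mor S2 S3) (m3 : mor S1 S3),
  CR m1 m2 m3 -> trs phi S3 m3 = trs (trs phi S2 m1) S3 m2.
Proof.
  apply (sentence_ind2 (fun S1 phi => forall S2 S3 (m1 : mor S1 S2) (m2 : mor S2 S3) (m3 : mor S1 S3),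
    CR m1 m2 m3 -> trs phi S3 m3 = trs (trs phi S2 m1) S3 m2)).
  - intros. simpl. apply sEq_cong; apply (proj1 (cr_term _ _ _ H)).
  - intros. simpl. apply sTr_cong; [apply (cr_action _ _ _ H)|apply (proj1 (cr_term _ _ _ H))|apply (proj1 (cr_term _ _ _ H))].
  - intros. simpl. f_equal; auto.
  - intros Sg l IH S2 S3 m1 m2 m3 H. simpl. f_equal. rewrite map_map. induction IH; simpl; f_equal; auto.
  - intros Sg l IH S2 S3 m1 m2 m3 H. simpl. f_equal. rewrite map_map. induction IH; simpl; f_equal; auto.
  - intros Sg X p IH S2 S3 m1 m2 m3 H. simpl.
    rewrite (trs_retarget_ex _ _ (mapb_comp _ _ _ _ _ _ H X)). f_equal. apply IH. apply CR_lift.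
  - intros Sg X p IH S2 S3 m1 m2 m3 H. simpl.
    rewrite (trs_retarget_all _ _ (mapb_comp _ _ _ _ _ _ H X)). f_equal. apply IH. apply CR_lift.
Qed.

Lemma castw_existT : forall S w s (f : fsym S w s),
  existT (fun w => {s & fsym S w s}) (map (fun x => x) w) (existT _ s (castw f)) = existT _ w (existT _ s f).
Proof.
  intros. unfold castw, eq_rect_r. generalize (eq_sym (map_id w)). generalize (map (fun x => x) w).
  intros w' e. destruct e. reflexivity.
Qed.

Lemma sf_cong : forall Sf Sg (i : sigmor Sf Sg) w1 w2 s1 s2 (f1 : fsym Sf w1 s1) (f2 : fsym Sf w2 s2),
  existT (fun w => {s & fsym Sf w s}) w1 (existT _ s1 f1) = existT _ w2 (existT _ s2 f2) ->
  existT (fun w => {s & fsym Sg w s}) (map (ss i) w1) (existT _ (ss i s1) (sf i f1)) =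
  existT _ (map (ss i) w2) (existT _ (ss i s2) (sf i f2)).
Proof. intros. dep_inv H. dep_inv H. subst. reflexivity. Qed.

Definition lift_sig {Sf Sg} (i : sigmor Sf Sg) (X : block Sf) : sigmor (ext Sf X) (ext Sg (mapb (ss i) X)) :=
  SigMor (ext Sf X) (ext Sg (mapb (ss i) X)) (ss i)
    (fun w s (f : fsym (ext Sf X) w s) => match f with
       | inl g => inl (sf i g)
       | inr v => inr (mapfvar (ss i) (fst X) w s v) end)
    (fun s (l : lab (ext Sf X) s) => match l with
       | inl l0 => inl (sl i l0)
       | inr v => inr (mapvar (ss i) (snd X) s v) end).

Lemma lift_mor_of : forall Sf Sg (i : sigmor Sf Sg) X, lift (mor_of i) X = mor_of (lift_sig i X).
Proof.
  intros. unfold lift, mor_of. simpl. f_equal.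
  - apply functional_extensionality_dep; intro w. apply functional_extensionality_dep; intro s.
    apply functional_extensionality_dep; intros [g|v]; reflexivity.
  - apply functional_extensionality_dep; intro s. apply functional_extensionality_dep; intros [l|v]; reflexivity.
Qed.

Lemma mapvar_inj : forall A B (f : A -> B) l s (v v' : var l s), mapvar f l s v = mapvar f l s v' -> v = v'.
Proof.
  intros A B f l s [i e] [i' e'] H. unfold mapvar in H. simpl in H. injection H as H. subst.
  f_equal. apply proof_irrelevance.
Qed.

Lemma var_eq : forall A (l : list A) s (v v' : var l s), proj1_sig v = proj1_sig v' -> v = v'.
Proof. intros A l s [i e] [i' e'] H. simpl in H. subst. f_equal. apply proof_irrelevance. Qed.

Lemma lift_sig_inj : forall Sf Sg (i : sigmor Sf Sg) X, injective_sigmor i -> injective_sigmor (lift_sig i X).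
Proof.
  intros Sf Sg i X [H1 [H2 H3]]. split; [|split].
  - exact H1.
  - intros w s [g|v] [g'|v'] H; simpl in H; try discriminate; injection H as H.
    + f_equal. apply H2. auto.
    + f_equal. destruct w; [|destruct v]. apply var_eq. simpl in H. unfold mapvar in H. apply (f_equal (@proj1_sig _ _)) in H. exact H.
  - intros s [l|v] [l'|v'] H; simpl in H; try discriminate; injection H as H.
    + f_equal. apply H3. auto.
    + f_equal. apply var_eq. exact H.
Qed.

Definition inclsig (Sg : sig) (X : block Sg) : sigmor Sg (ext Sg X) :=
  SigMor Sg (ext Sg X) (fun s => s) (fun w s f => inl (castw f)) (fun s l => inl l).

Lemma incl_mor_of : forall Sg X, incl Sg X = mor_of (inclsig Sg X).
Proof. reflexivity. Qed.

Lemma castw_inj : forall S w s (f f' : fsym S w s), castw f = castw f' -> f = f'.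
Proof.
  intros. pose proof (castw_existT S w s f) as E1. pose proof (castw_existT S w s f') as E2.
  rewrite H in E1. rewrite E1 in E2. apply inj_pair2 in E2. apply inj_pair2 in E2. auto.
Qed.

Lemma inclsig_inj : forall Sg X, injective_sigmor (inclsig Sg X).
Proof.
  intros. split; [|split].
  - auto.
  - intros w s f f' H. simpl in H. injection H as H. apply castw_inj in H. auto.
  - intros s l l' H. simpl in H. injection H. auto.
Qed.

Section C1.
Context {Sf Sg} (i : sigmor Sf Sg) (X : block Sf).

Definition m3c1 : mor Sf (ext Sg (mapb (ss i) X)) :=
  Mor Sf (ext Sg (mapb (ss i) X)) (ss i) (fun w s f => inl (inl (sf i f)))
      (fun s l => @alab (ext Sg (mapb (ss i) X)) _ (inl (sl i l))).

Lemma CR_c1a : CR (incl Sf X) (mor_of (lift_sig i X)) m3c1.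
Proof.
  constructor.
  - reflexivity.
  - intros w s f. unfold comp12. simpl.
    apply (inl_cong Sg (mapb (ss i) X)). apply sf_cong. symmetry. apply castw_existT.
  - reflexivity.
Qed.
Lemma CR_c1b : CR (mor_of i) (incl Sg (mapb (ss i) X)) m3c1.
Proof.
  constructor.
  - reflexivity.
  - intros w s f. unfold comp12. simpl.
    apply (inl_cong Sg (mapb (ss i) X)). symmetry. apply castw_existT.
  - reflexivity.
Qed.

Lemma C1 : forall phi : sentence Sf,
  trs (trs phi _ (incl Sf X)) _ (mor_of (lift_sig i X)) = trs (trs phi _ (mor_of i)) _ (incl Sg (mapb (ss i) X)).
Proof. intros. rewrite <- (cr_sent _ phi _ _ _ _ _ CR_c1a). apply (cr_sent _ phi _ _ _ _ _ CR_c1b). Qed.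

Lemma C1t : forall s (t : term Sf s),
  trt (mor_of (lift_sig i X)) (E X t) = E (mapb (ss i) X) (trt (mor_of i) t).
Proof.
  intros. pose proof (proj1 (cr_term _ _ _ CR_c1a) s t) as H1. pose proof (proj1 (cr_term _ _ _ CR_c1b) s t) as H2.
  rewrite H1 in H2. apply inj_pair2 in H2. exact H2.
Qed.
Lemma C1a : forall s (a : action Sf s),
  tra (mor_of (lift_sig i X)) (EA X a) = EA (mapb (ss i) X) (tra (mor_of i) a).
Proof.
  intros. pose proof (cr_action _ _ _ CR_c1a s a) as H1. pose proof (cr_action _ _ _ CR_c1b s a) as H2.
  rewrite H1 in H2. apply inj_pair2 in H2. exact H2.
Qed.
End C1.

Section C2.
Context {Sf Sg} (i : sigmor Sf Sg) (X : block Sf) (th' : subst Sf X) (th : subst Sg (mapb (ss i) X))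
  (HF : forall s v, sub_f th (ss i s) (mapvar (ss i) (fst X) s v) = trt (mor_of i) (sub_f th' s v))
  (HL : forall s v, sub_l th (ss i s) (mapvar (ss i) (snd X) s v) = tra (mor_of i) (sub_l th' s v)).

Definition m3c2 : mor (ext Sf X) Sg :=
  Mor (ext Sf X) Sg (ss i)
    (fun w s (f : fsym (ext Sf X) w s) => match f with
      | inl g => inl (sf i g)
      | inr v => inr ((match w return fvar (fst X) w s -> term Sg (ss i s) with
                       | [] => fun v => trt (mor_of i) (sub_f th' s v)
                       | _ :: _ => fun e => match e with end end) v) end)
    (fun s (l : lab (ext Sf X) s) => match l with
      | inl l0 => alab (sl i l0)
      | inr v => tra (mor_of i) (sub_l th' s v) end).

Lemma CR_c2a : CR (subst_mor th') (mor_of i) m3c2.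
Proof.
  constructor.
  - reflexivity.
  - intros w s [g|v]; unfold comp12; simpl.
    + apply sf_cong. symmetry. apply castw_existT.
    + destruct w; [|destruct v]. reflexivity.
  - intros s [l|v]; reflexivity.
Qed.
Lemma CR_c2b : CR (mor_of (lift_sig i X)) (subst_mor th) m3c2.
Proof.
  constructor.
  - reflexivity.
  - intros w s [g|v]; unfold comp12; simpl.
    + symmetry. apply castw_existT.
    + destruct w; [|destruct v]. simpl. rewrite HF. reflexivity.
  - intros s [l|v]; simpl; [reflexivity|]. rewrite HL. reflexivity.
Qed.

Lemma C2 : forall phi : sentence (ext Sf X),
  trs (inst th' phi) _ (mor_of i) = inst th (trs phi _ (mor_of (lift_sig i X))).
Proof.
  intros. unfold inst. rewrite <- (cr_sent _ phi _ _ _ _ _ CR_c2a). apply (cr_sent _ phi _ _ _ _ _ CR_c2b).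
Qed.
End C2.

Definition getEq {S} (p : sentence S) : option {s & (term S s * term S s)%type} :=
  match p with sEq t0 t1 => Some (existT _ _ (t0, t1)) | _ => None end.
Definition getTr {S} (p : sentence S) : option {s & (action S s * term S s * term S s)%type} :=
  match p with sTr a t0 t1 => Some (existT _ _ (a, t0, t1)) | _ => None end.
Definition getImp {S} (p : sentence S) : option (sentence S * sentence S) :=
  match p with sImp a b => Some (a, b) | _ => None end.
Definition getOr {S} (p : sentence S) : option (list (sentence S)) :=
  match p with sOr l => Some l | _ => None end.
Definition getAnd {S} (p : sentence S) : option (list (sentence S)) :=
  match p with sAnd l => Some l | _ => None end.
Definition getEx {S} (p : sentence S) : option {X : block S & sentence (ext S X)} :=
  match p with sEx X q => Some (existT _ X q) | _ => None end.
Definition getAll {S} (p : sentence S) : option {X : block S & sentence (ext S X)} :=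
  match p with sAll X q => Some (existT _ X q) | _ => None end.

Lemma Some_inj' : forall A (x y : A), Some x = Some y -> x = y.
Proof. intros. injection H. auto. Qed.

Lemma mapb_inj : forall S1 S2 (f : srt S1 -> srt S2), (forall x y, f x = f y -> x = y) ->
  forall X Y, mapb f X = mapb f Y -> X = Y.
Proof.
  intros S1 S2 f Hf [a b] [c d] H. unfold mapb in H. simpl in H. injection H as H1 H2.
  apply map_inj in H1; auto. apply map_inj in H2; auto. subst. reflexivity.
Qed.

Lemma trs_inj : forall Sf (phi : sentence Sf) Sg (i : sigmor Sf Sg), injective_sigmor i ->
  forall psi, trs phi Sg (mor_of i) = trs psi Sg (mor_of i) -> phi = psi.
Proof.
  apply (sentence_ind2 (fun Sf phi => forall Sg (i : sigmor Sf Sg), injective_sigmor i ->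
    forall psi, trs phi Sg (mor_of i) = trs psi Sg (mor_of i) -> phi = psi)).
  - intros Sf s t0 t1 Sg i Hi psi H. dependent destruction psi; simpl in H; try discriminate.
    apply (f_equal getEq) in H. simpl in H. apply Some_inj' in H.
    pose proof (f_equal (@projT1 _ _) H) as e. simpl in e. apply (ss_inj i Hi) in e. subst.
    apply inj_pair2 in H. injection H as H1 H2. apply (trt_inj1 i Hi) in H1. apply (trt_inj1 i Hi) in H2. subst. reflexivity.
  - intros Sf s a t0 t1 Sg i Hi psi H. dependent destruction psi; simpl in H; try discriminate.
    apply (f_equal getTr) in H. simpl in H. apply Some_inj' in H.
    pose proof (f_equal (@projT1 _ _) H) as e. simpl in e. apply (ss_inj i Hi) in e. subst.
    apply inj_pair2 in H. injection H as H1 H2 H3. apply (tra_inj1 i Hi) in H1.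
    apply (trt_inj1 i Hi) in H2. apply (trt_inj1 i Hi) in H3. subst. reflexivity.
  - intros Sf p q IHp IHq Sg i Hi psi H. dependent destruction psi; simpl in H; try discriminate.
    injection H as H1 H2. apply inj_pair2 in H1. apply inj_pair2 in H2. apply IHp in H1; auto. apply IHq in H2; auto. subst. reflexivity.
  - intros Sf l IH Sg i Hi psi H. dependent destruction psi; simpl in H; try discriminate.
    apply (f_equal getOr) in H. simpl in H. apply Some_inj' in H. f_equal.
    revert l0 H. induction IH as [|x l Hx Hl IHl]; intros [|y l'] H; simpl in H; try discriminate; auto.
    injection H as H1 H2. f_equal; [apply (Hx _ i Hi); auto|]. apply IHl; auto.
  - intros Sf l IH Sg i Hi psi H. dependent destruction psi; simpl in H; try discriminate.
    apply (f_equal getAnd) in H. simpl in H. apply Some_inj' in H. f_equal.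
    revert l0 H. induction IH as [|x l Hx Hl IHl]; intros [|y l'] H; simpl in H; try discriminate; auto.
    injection H as H1 H2. f_equal; [apply (Hx _ i Hi); auto|]. apply IHl; auto.
  - intros Sf X p IH Sg i Hi psi H. dependent destruction psi; simpl in H; try discriminate.
    apply (f_equal getEx) in H. simpl in H. apply Some_inj' in H.
    pose proof (f_equal (@projT1 _ _) H) as e. simpl in e. apply mapb_inj in e; [|apply (ss_inj i Hi)]. subst.
    apply inj_pair2 in H. rewrite !lift_mor_of in H. apply IH in H; [subst; reflexivity|]. apply lift_sig_inj; auto.
  - intros Sf X p IH Sg i Hi psi H. dependent destruction psi; simpl in H; try discriminate.
    apply (f_equal getAll) in H. simpl in H. apply Some_inj' in H.
    pose proof (f_equal (@projT1 _ _) H) as e. simpl in e. apply mapb_inj in e; [|apply (ss_inj i Hi)]. subst.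
    apply inj_pair2 in H. rewrite !lift_mor_of in H. apply IH in H; [subst; reflexivity|]. apply lift_sig_inj; auto.
Qed.

Definition sym_map {S1 S2} (j : sigmor S1 S2) (y : sym S1) : sym S2 :=
  match y with
  | ySort s => ySort (ss j s)
  | yFun f => yFun (sf j f)
  | yLab l => yLab (sl j l)
  end.

Lemma syms_trt : forall S1 S2 (j : sigmor S1 S2),
  (forall s (t : term S1 s), syms_t (trt (mor_of j) t) = map (sym_map j) (syms_t t)) /\
  (forall w (ts : terms S1 w), syms_ts (trts (mor_of j) ts) = map (sym_map j) (syms_ts ts)).
Proof.
  intros. apply term_terms_ind.
  - intros w s f ts IH. simpl. f_equal. exact IH.
  - reflexivity.
  - intros s w t IH ts IH2. simpl. rewrite map_app. f_equal; [exact IH|exact IH2].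
Qed.
Lemma syms_tra : forall S1 S2 (j : sigmor S1 S2) s (a : action S1 s),
  syms_a (tra (mor_of j) a) = map (sym_map j) (syms_a a).
Proof.
  intros. induction a; simpl; try (rewrite map_app; f_equal; assumption); try assumption; reflexivity.
Qed.

Lemma proj_map : forall S1 S2 (j : sigmor S1 S2) X (L : list (sym (ext S1 X))),
  proj_ext (map (sym_map (lift_sig j X)) L) = map (sym_map j) (proj_ext L).
Proof.
  intros. unfold proj_ext. induction L as [|y L IH]; [reflexivity|]. simpl. rewrite IH, map_app. f_equal.
  destruct y as [s|w s [g|v]|s [l|v]]; reflexivity.
Qed.

Lemma syms_trs : forall S1 (phi : sentence S1) S2 (j : sigmor S1 S2),
  syms (trs phi S2 (mor_of j)) = map (sym_map j) (syms phi).
Proof.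
  apply (sentence_ind2 (fun S1 phi => forall S2 (j : sigmor S1 S2),
    syms (trs phi S2 (mor_of j)) = map (sym_map j) (syms phi))).
  - intros. simpl. rewrite map_app. f_equal; apply (proj1 (syms_trt _ _ j)).
  - intros. simpl. rewrite !map_app. f_equal; [apply syms_tra|]. f_equal; apply (proj1 (syms_trt _ _ j)).
  - intros. simpl. rewrite H, H0, map_app. reflexivity.
  - intros Sg l IH S2 j. simpl. induction IH; simpl; [reflexivity|]. rewrite H, IHIH, map_app. reflexivity.
  - intros Sg l IH S2 j. simpl. induction IH; simpl; [reflexivity|]. rewrite H, IHIH, map_app. reflexivity.
  - intros Sg X p IH S2 j. simpl. rewrite lift_mor_of, IH, proj_map, !map_app, !map_map. reflexivity.
  - intros Sg X p IH S2 j. simpl. rewrite lift_mor_of, IH, proj_map, !map_app, !map_map. reflexivity.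
Qed.

Lemma Cov_image : forall S1 S2 (j : sigmor S1 S2) L, Cov j (map (sym_map j) L).
Proof.
  intros S1 S2 j L y Hy. apply in_map_iff in Hy as [x [E Hx]]. subst.
  destruct x as [s|w s f|s l]; simpl.
  - eauto.
  - exists w, s, f. reflexivity.
  - exists s, l. reflexivity.
Qed.

Lemma list_pre : forall A B (f : A -> B) l, (forall x, In x l -> exists y, f y = x) -> exists l', map f l' = l.
Proof.
  intros A B f l. induction l as [|a l IH]; intros H; [exists []; reflexivity|].
  destruct (H a (or_introl eq_refl)) as [y Hy]. destruct IH as [l' Hl']; [intros; apply H; right; auto|].
  exists (y :: l'). simpl. congruence.
Qed.

Lemma nth_error_map_inv : forall A B (f : A -> B) l j b, nth_error (map f l) j = Some b ->
  exists a, nth_error l j = Some a /\ f a = b.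
Proof.
  intros. rewrite nth_error_map in H. destruct (nth_error l j) as [a|]; simpl in H; [|discriminate].
  injection H. eauto.
Qed.

Lemma Cov_lift : forall Sf Sg (i : sigmor Sf Sg) X (L : list (sym (ext Sg (mapb (ss i) X)))),
  Cov i (proj_ext L) -> Cov (lift_sig i X) L.
Proof.
  intros Sf Sg i X L HC y Hy.
  assert (HP : forall y', In y' (proj_y y) -> covers i y').
  { intros y' Hy'. apply HC. unfold proj_ext. apply in_flat_map. eauto. }
  destruct y as [s|w s [g|v]|s [l|v]]; simpl in HP |- *.
  - apply (HP (@ySort Sg s)). auto.
  - destruct (HP (yFun g) (or_introl eq_refl)) as [w' [s' [f' Hf]]].
    exists w', s', (inl f'). exact (inl_cong Sg (mapb (ss i) X) _ _ _ _ (sf i f') g Hf).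
  - destruct w; [|destruct v]. destruct v as [j E0].
    destruct (nth_error_map_inv _ _ _ _ _ _ E0) as [s' [E1 E2]]. subst s.
    exists [], s', (inr (exist _ j E1)). simpl.
    pose proof (var_existT _ (map (ss i) (fst X)) _ _ (mapvar (ss i) (fst X) s' (exist _ j E1)) (exist _ j E0) eq_refl) as HV.
    exact (f_equal (fun p : sigT (var (map (ss i) (fst X))) =>
      existT (fun w => {s & fsym (ext Sg (mapb (ss i) X)) w s}) [] (existT _ (projT1 p) (inr (projT2 p)))) HV).
  - destruct (HP (yLab l) (or_introl eq_refl)) as [s' [l' Hl]].
    exists s', (inl l'). simpl.
    exact (f_equal (fun p : sigT (lab Sg) => existT (lab (ext Sg (mapb (ss i) X))) (projT1 p) (inl (projT2 p))) Hl).
  - destruct v as [j E0].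
    destruct (nth_error_map_inv _ _ _ _ _ _ E0) as [s' [E1 E2]]. subst s.
    exists s', (inr (exist _ j E1)). simpl.
    pose proof (var_existT _ (map (ss i) (snd X)) _ _ (mapvar (ss i) (snd X) s' (exist _ j E1)) (exist _ j E0) eq_refl) as HV.
    exact (f_equal (fun p : sigT (var (map (ss i) (snd X))) =>
      existT (lab (ext Sg (mapb (ss i) X))) (projT1 p) (inr (projT2 p))) HV).
Qed.

Lemma trs_pre : forall Sg (phi : sentence Sg) Sf (i : sigmor Sf Sg), injective_sigmor i ->
  Cov i (syms phi) -> exists phi', trs phi' Sg (mor_of i) = phi.
Proof.
  apply (sentence_ind2 (fun Sg phi => forall Sf (i : sigmor Sf Sg), injective_sigmor i ->
    Cov i (syms phi) -> exists phi', trs phi' Sg (mor_of i) = phi)).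
  - intros Sg s t0 t1 Sf i Hi HC. simpl in HC. apply Cov_app in HC as [H0 H1].
    destruct (proj1 (trt_pre i Hi) _ t0 H0) as [s' [t0' E0]]. dep_inv E0. subst.
    destruct (trt_pre1 i Hi _ t1 H1) as [t1' E1]. subst. exists (sEq t0' t1'). reflexivity.
  - intros Sg s a t0 t1 Sf i Hi HC. simpl in HC. apply Cov_app in HC as [Ha HC]. apply Cov_app in HC as [H0 H1].
    destruct (tra_pre i Hi _ a Ha) as [s' [a' Ea]]. dep_inv Ea. subst.
    destruct (trt_pre1 i Hi _ t0 H0) as [t0' E0]. destruct (trt_pre1 i Hi _ t1 H1) as [t1' E1]. subst.
    exists (sTr a' t0' t1'). reflexivity.
  - intros Sg p q IHp IHq Sf i Hi HC. simpl in HC. apply Cov_app in HC as [H1 H2].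
    destruct (IHp _ i Hi H1) as [p' Ep]. destruct (IHq _ i Hi H2) as [q' Eq]. subst. exists (sImp p' q'). reflexivity.
  - intros Sg l IH Sf i Hi HC. simpl in HC.
    assert (exists l', map (fun p => trs p Sg (mor_of i)) l' = l) as [l' El].
    { induction IH as [|x l Hx Hl IHl]; [exists []; reflexivity|]. apply Cov_app in HC as [H1 H2].
      destruct (Hx _ i Hi H1) as [x' Ex]. destruct (IHl H2) as [l' El]. exists (x' :: l'). simpl. congruence. }
    exists (sOr l'). simpl. congruence.
  - intros Sg l IH Sf i Hi HC. simpl in HC.
    assert (exists l', map (fun p => trs p Sg (mor_of i)) l' = l) as [l' El].
    { induction IH as [|x l Hx Hl IHl]; [exists []; reflexivity|]. apply Cov_app in HC as [H1 H2].
      destruct (Hx _ i Hi H1) as [x' Ex]. destruct (IHl H2) as [l' El]. exists (x' :: l'). simpl. congruence. }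
    exists (sAnd l'). simpl. congruence.
  - intros Sg [l1 l2] p IH Sf i Hi HC. simpl in HC. apply Cov_app in HC as [HS HC].
    destruct (list_pre _ _ (ss i) l1) as [l1' E1].
    { intros x Hx. apply (HS (ySort x)). apply in_map. apply in_or_app. auto. }
    destruct (list_pre _ _ (ss i) l2) as [l2' E2].
    { intros x Hx. apply (HS (ySort x)). apply in_map. apply in_or_app. auto. }
    subst l1 l2.
    destruct (IH _ (lift_sig i (l1', l2')) (lift_sig_inj _ _ _ _ Hi) (Cov_lift _ _ i (l1', l2') _ HC)) as [p' Ep].
    exists (sEx (l1', l2') p'). cbn [trs]. rewrite lift_mor_of. exact (f_equal (@sEx Sg (map (ss i) l1', map (ss i) l2')) Ep).
  - intros Sg [l1 l2] p IH Sf i Hi HC. simpl in HC. apply Cov_app in HC as [HS HC].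
    destruct (list_pre _ _ (ss i) l1) as [l1' E1].
    { intros x Hx. apply (HS (ySort x)). apply in_map. apply in_or_app. auto. }
    destruct (list_pre _ _ (ss i) l2) as [l2' E2].
    { intros x Hx. apply (HS (ySort x)). apply in_map. apply in_or_app. auto. }
    subst l1 l2.
    destruct (IH _ (lift_sig i (l1', l2')) (lift_sig_inj _ _ _ _ Hi) (Cov_lift _ _ i (l1', l2') _ HC)) as [p' Ep].
    exists (sAll (l1', l2') p'). cbn [trs]. rewrite lift_mor_of. exact (f_equal (@sAll Sg (map (ss i) l1', map (ss i) l2')) Ep).
Qed.

Definition strip_f {S : sig} {l : list (srt S)} (p : {w & {s & (fsym S w s + fvar l w s)%type}}) :
  option {w & {s & fsym S w s}} :=
  match p with existT _ w (existT _ s x) => match x with inl g => Some (existT _ w (existT _ s g)) | inr _ => None end end.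
Definition strip_l {S : sig} {l : list (srt S)} (p : {s & (lab S s + var l s)%type}) : option {s & lab S s} :=
  match p with existT _ s x => match x with inl g => Some (existT _ s g) | inr _ => None end end.

Lemma Cov_incl_back : forall Sf Sg (i : sigmor Sf Sg) X (L : list (sym Sg)),
  Cov (lift_sig i X) (map (sym_map (inclsig Sg (mapb (ss i) X))) L) -> Cov i L.
Proof.
  intros Sf Sg i X L HC y Hy. specialize (HC _ (in_map _ _ _ Hy)).
  destruct y as [s|w s f|s l]; simpl in HC |- *.
  - exact HC.
  - destruct HC as [w' [s' [[f'|v] Hf]]].
    + apply (f_equal (@strip_f Sg (map (ss i) (fst X)))) in Hf. simpl in Hf. apply Some_inj' in Hf.
      exists w', s', f'. rewrite Hf. apply castw_existT.
    + apply (f_equal (@strip_f Sg (map (ss i) (fst X)))) in Hf. simpl in Hf. discriminate.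
  - destruct HC as [s' [[l'|v] Hl]].
    + apply (f_equal (@strip_l Sg (map (ss i) (snd X)))) in Hl. simpl in Hl. apply Some_inj' in Hl.
      exists s', l'. exact Hl.
    + apply (f_equal (@strip_l Sg (map (ss i) (snd X)))) in Hl. simpl in Hl. discriminate.
Qed.

Lemma D1_pre : forall Sf Sg (i : sigmor Sf Sg), injective_sigmor i -> forall X (psi : sentence (ext Sf X)) (phi : sentence Sg),
  trs psi _ (mor_of (lift_sig i X)) = trs phi _ (incl Sg (mapb (ss i) X)) ->
  exists phi', trs phi' Sg (mor_of i) = phi /\ psi = trs phi' _ (incl Sf X).
Proof.
  intros Sf Sg i Hi X psi phi H.
  assert (HC : Cov (lift_sig i X) (syms (trs phi _ (incl Sg (mapb (ss i) X))))).
  { rewrite <- H, syms_trs. apply Cov_image. }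
  rewrite incl_mor_of, syms_trs in HC. apply Cov_incl_back in HC.
  destruct (trs_pre _ phi _ i Hi HC) as [phi' Ep]. exists phi'. split; auto.
  apply (trs_inj _ psi _ (lift_sig i X) (lift_sig_inj _ _ _ _ Hi)).
  rewrite H, C1, Ep. reflexivity.
Qed.

Definition pre {Sf Sg} (i : sigmor Sf Sg) (G : sset Sg) : sset Sf := fun psi => G (trs psi Sg (mor_of i)).

Lemma sset_ext : forall S (G G' : sset S), (forall phi, G phi <-> G' phi) -> G = G'.
Proof. intros. apply functional_extensionality. intros. apply propositional_extensionality. auto. Qed.

Section Pre.
Context {Sf Sg} (i : sigmor Sf Sg) (Hi : injective_sigmor i).

Lemma pre_add : forall (P' : sentence Sf) (G : sset Sg), pre i (add (trs P' Sg (mor_of i)) G) = add P' (pre i G).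
Proof.
  intros. apply sset_ext. intros phi. unfold pre, add. split; intros [E|E]; auto.
  - left. apply (trs_inj _ phi _ i Hi). auto.
  - left. subst. reflexivity.
Qed.

Lemma pre_up : forall X (G : sset Sg), pre (lift_sig i X) (up (mapb (ss i) X) G) = up X (pre i G).
Proof.
  intros. apply sset_ext. intros psi. unfold pre, up. split.
  - intros [phi [HG E]]. destruct (D1_pre _ _ i Hi X psi phi E) as [phi' [E1 E2]]. subst. exists phi'. auto.
  - intros [phi' [HG E]]. subst. exists (trs phi' Sg (mor_of i)). split; auto. apply C1.
Qed.

Lemma pre_bigcup : forall (Phi' : list (sentence Sf)) (GF : nat -> sset Sg),
  pre i (bigcup (map (fun p => trs p Sg (mor_of i)) Phi') GF) = bigcup Phi' (fun k => pre i (GF k)).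
Proof.
  intros. apply sset_ext. intros psi. unfold pre, bigcup. split.
  - intros [k [phi [E H]]]. rewrite nth_error_map in E. destruct (nth_error Phi' k) as [p|] eqn:Ek; [|discriminate].
    exists k, p. auto.
  - intros [k [phi [E H]]]. exists k, (trs phi Sg (mor_of i)). rewrite nth_error_map, E. auto.
Qed.

Lemma basic_pre : forall G, basicset G -> basicset (pre i G).
Proof.
  intros G H psi Hp. apply H in Hp. destruct psi; simpl in Hp |- *; auto.
  destruct a; simpl in Hp; auto.
Qed.
End Pre.

Lemma argpair_map : forall Sf Sg (i : sigmor Sf Sg) w (ts ts' : terms Sf w) s u u',
  argpair Sf w ts ts' s u u' ->
  argpair Sg (map (ss i) w) (trts (mor_of i) ts) (trts (mor_of i) ts') (ss i s) (trt (mor_of i) u) (trt (mor_of i) u').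
Proof.
  intros. induction H; simpl; constructor; auto.
Qed.

Lemma argpair_list : forall Sg w (ts ts' : terms Sg w),
  exists L : list {s & (term Sg s * term Sg s)%type},
  forall s u u', argpair Sg w ts ts' s u u' <-> In (existT _ s (u, u')) L.
Proof.
  intros Sg w ts. induction ts as [|s w t ts IH]; intros ts'.
  - exists []. intros. split; [intros H; inversion H|intros []].
  - dependent destruction ts'. destruct (IH ts') as [L HL]. exists (existT _ s (t, t0) :: L).
    intros s' u u'. split.
    + intros H. dependent destruction H; [left; reflexivity|]. right. apply HL. auto.
    + intros [E|E].
      * dep_inv E. injection E as E1 E2. subst. constructor.
      * constructor. apply HL. auto.
Qed.

Definition Kmono {Sg} (P : list (sym Sg) -> Prop) := forall K K', (forall y, In y K -> In y K') -> P K -> P K'.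

Lemma union_list : forall Sg A (L : list A) (P : A -> list (sym Sg) -> Prop),
  (forall a, In a L -> exists K, P a K) ->
  exists K, forall a, In a L -> exists K', P a K' /\ (forall y, In y K' -> In y K).
Proof.
  intros Sg A L P. induction L as [|a L IH]; intros H.
  - exists []. intros a [].
  - destruct (H a (or_introl eq_refl)) as [Ka Ha]. destruct IH as [K HK]; [intros; apply H; right; auto|].
    exists (Ka ++ K). intros b [E|Hb].
    + subst. exists Ka. split; auto. intros; apply in_or_app; auto.
    + destruct (HK b Hb) as [K' [H1 H2]]. exists K'. split; auto. intros; apply in_or_app; right; auto.
Qed.

Lemma union_nat : forall Sg (n : nat) (P : nat -> list (sym Sg) -> Prop),
  (forall k, k < n -> exists K, P k K) ->
  exists K, forall k, k < n -> exists K', P k K' /\ (forall y, In y K' -> In y K).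
Proof.
  intros. destruct (union_list Sg nat (seq 0 n) P) as [K HK].
  - intros a Ha. apply in_seq in Ha. apply H. lia.
  - exists K. intros k Hk. apply HK. apply in_seq. lia.
Qed.

Lemma Cov_sub : forall Sf Sg (i : sigmor Sf Sg) K K', (forall y, In y K' -> In y K) -> Cov i K -> Cov i K'.
Proof. unfold Cov. auto. Qed.

Ltac covsplit := repeat match goal with
  | H : Cov _ (_ ++ _) |- _ => apply Cov_app in H as [? ?]
  | H : Cov _ (_ :: _) |- _ => apply Cov_cons in H as [? ?]
  end.

Ltac ptt i Hi t x := match goal with H : Cov i (syms_t t) |- _ =>
  first [ destruct (trt_pre1 i Hi _ t H) as [x ?]; subst t
        | let s' := fresh "s" in let E := fresh "E" in
          destruct (proj1 (trt_pre i Hi) _ t H) as [s' [x E]]; dep_inv E; subst t ] end.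
Ltac pta i Hi t x := match goal with H : Cov i (syms_a t) |- _ =>
  first [ destruct (tra_pre1 i Hi _ t H) as [x ?]; subst t
        | let s' := fresh "s" in let E := fresh "E" in
          destruct (tra_pre i Hi _ t H) as [s' [x E]]; dep_inv E; subst t ] end.

Ltac specK i Hi := repeat match goal with
  | HK : forall Sf (j : sigmor Sf _), injective_sigmor j -> Cov j ?K -> _, H : Cov i ?K |- _ => specialize (HK _ i Hi H)
  end.

Definition BP {Sg} (P : forall Sf, sigmor Sf Sg -> Prop) :=
  exists K, forall Sf (i : sigmor Sf Sg), injective_sigmor i -> Cov i K -> P Sf i.

Lemma hd_app_eq : forall Sf Sg (i : sigmor Sf Sg), injective_sigmor i ->
  forall s (t1 t2 : term Sf s) w (f : fsym Sg w (ss i s)) ts ts',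
  trt (mor_of i) t1 = app f ts -> trt (mor_of i) t2 = app f ts' ->
  exists w' (f' : fsym Sf w' s) ts1 ts2, t1 = app f' ts1 /\ t2 = app f' ts2 /\
    existT (fun w => (fsym Sg w (ss i s) * terms Sg w * terms Sg w)%type) (map (ss i) w') (sf i f', trts (mor_of i) ts1, trts (mor_of i) ts2)
    = existT _ w (f, ts, ts').
Proof.
  intros Sf Sg i Hi s t1 t2 w f ts ts' E1 E2.
  destruct t1 as [w1 s1 f1 ts1]. destruct t2 as [w2 s2 f2 ts2]. simpl in E1, E2.
  apply (f_equal hd_of) in E1. apply (f_equal hd_of) in E2. simpl in E1, E2.
  dep_inv E1. pose proof (f_equal fst E1) as Ef1. pose proof (f_equal snd E1) as Et1. simpl in Ef1, Et1. subst.
  pose proof (f_equal (@projT1 _ _) E2) as e2. simpl in e2.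
  apply (mapss_inj i Hi) in e2. subst. apply inj_pair2 in E2.
  pose proof (f_equal fst E2) as Ef2. pose proof (f_equal snd E2) as Et2. simpl in Ef2, Et2.
  apply (proj1 (proj2 Hi)) in Ef2. subst.
  exists w1, f1, ts1, ts2. split; auto.
Qed.

Lemma bderiv_B : forall Sg G D, bderiv Sg G D -> BP (fun Sf i => bderiv Sf (pre i G) (pre i D)).
Proof.
  intros Sg G D H. induction H.
  - exists (syms phi). intros Sf i Hi HC. destruct (trs_pre _ phi _ i Hi HC) as [phi' E]. subst.
    rewrite !(pre_add i Hi). apply b_init.
  - exists (syms_t t). intros Sf i Hi HC. ptt i Hi t u. rewrite (pre_add i Hi (sEq u u)). apply b_refl.
  - destruct IHbderiv as [K HK]. exists (syms (sEq t t') ++ K). intros Sf i Hi HC. simpl in HC. covsplit. specK i Hi.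
    ptt i Hi t u. ptt i Hi t' u'.
    rewrite (pre_add i Hi (sEq u' u)). rewrite (pre_add i Hi (sEq u u')) in HK. apply b_sym. auto.
  - destruct IHbderiv1 as [K1 HK1]. destruct IHbderiv2 as [K2 HK2].
    exists (syms (sEq t1 t2) ++ syms_t t3 ++ K1 ++ K2). intros Sf i Hi HC. simpl in HC. covsplit. specK i Hi.
    ptt i Hi t1 u1. ptt i Hi t2 u2. ptt i Hi t3 u3.
    rewrite (pre_add i Hi (sEq u1 u2)) in HK1. rewrite (pre_add i Hi (sEq u2 u3)) in HK2.
    rewrite (pre_add i Hi (sEq u1 u3)). eapply b_trans; eauto.
  -
    destruct (argpair_list Sg w ts ts') as [L HL].
    destruct (union_list Sg _ L (fun p K => forall Sf (i : sigmor Sf Sg), injective_sigmor i -> Cov i K ->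
       bderiv Sf (pre i G) (pre i (add (sEq (fst (projT2 p)) (snd (projT2 p))) D)))) as [K HK].
    { intros [s' [u u']] Hp. apply HL in Hp. destruct (H0 _ _ _ Hp) as [K HK]. exists K. exact HK. }
    exists (syms_t (app f ts) ++ syms_t (app f ts') ++ K). intros Sf i Hi HC. covsplit.
    destruct (proj1 (trt_pre i Hi) _ _ H1) as [s1 [t1 E1]]. dep_inv E1.
    destruct (trt_pre1 i Hi _ _ H2) as [t2 E2].
    destruct (hd_app_eq _ _ i Hi _ t1 t2 _ f ts ts' E1 E2) as [w' [f' [ts1 [ts2 [-> [-> E]]]]]].
    dep_inv E. injection E as E3 E4 E5. subst.
    rewrite (pre_add i Hi (sEq (app f' ts1) (app f' ts2))). apply b_cong.
    intros s'' u u' Hp. apply (argpair_map _ _ i) in Hp. apply HL in Hp.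
    destruct (HK _ Hp) as [K' [HK1 HK2]]. simpl in HK1.
    specialize (HK1 Sf i Hi (Cov_sub _ _ i K K' HK2 H3)). rewrite (pre_add i Hi (sEq u u')) in HK1. exact HK1.
  - destruct IHbderiv1 as [K1 HK1]. destruct IHbderiv2 as [K2 HK2]. destruct IHbderiv3 as [K3 HK3].
    exists (syms (sTr (alab l) t0 t1) ++ syms_t t0' ++ syms_t t1' ++ K1 ++ K2 ++ K3). intros Sf i Hi HC. simpl in HC. covsplit. specK i Hi.
    match goal with Hc : covers i (yLab l) |- _ => destruct Hc as [s' [l' El]] end. dep_inv El. subst.
    ptt i Hi t0 u0. ptt i Hi t1 u1. ptt i Hi t0' v0. ptt i Hi t1' v1.
    rewrite (pre_add i Hi (sEq u0 v0)) in HK1. rewrite (pre_add i Hi (sEq u1 v1)) in HK2.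
    rewrite (pre_add i Hi (sTr (alab l') u0 u1)) in HK3. rewrite (pre_add i Hi (sTr (alab l') v0 v1)).
    eapply b_repl; eauto.
Qed.

Fixpoint allvars {A} (l : list A) : list {s : A & var l s} :=
  match l return list {s : A & var l s} with
  | [] => []
  | a :: l' => existT _ a (exist (fun i => nth_error (a :: l') i = Some a) 0 eq_refl) ::
      map (fun p => existT (fun s => var (a :: l') s) (projT1 p)
             (exist (fun i => nth_error (a :: l') i = Some (projT1 p)) (S (proj1_sig (projT2 p))) (proj2_sig (projT2 p))))
          (allvars l')
  end.

Lemma allvars_in : forall A (l : list A) s (v : var l s), In (existT _ s v) (allvars l).
Proof.
  intros A l. induction l as [|a l IH]; intros s [j e].
  - destruct j; discriminate e.
  - destruct j as [|j].
    + simpl in e. injection e as e'. subst. left. f_equal. f_equal. apply proof_irrelevance.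
    + right. simpl. apply in_map_iff. exists (existT _ s (exist _ j e)). split; auto.
Qed.

Definition syms_sub {Sg X} (th : subst Sg X) : list (sym Sg) :=
  flat_map (fun p => syms_t (sub_f th (projT1 p) (projT2 p))) (allvars (fst X)) ++
  flat_map (fun p => syms_a (sub_l th (projT1 p) (projT2 p))) (allvars (snd X)).

Lemma sub_pre : forall Sf Sg (i : sigmor Sf Sg), injective_sigmor i -> forall X (th : subst Sg (mapb (ss i) X)),
  Cov i (syms_sub th) ->
  exists th' : subst Sf X,
    (forall s v, sub_f th (ss i s) (mapvar (ss i) (fst X) s v) = trt (mor_of i) (sub_f th' s v)) /\
    (forall s v, sub_l th (ss i s) (mapvar (ss i) (snd X) s v) = tra (mor_of i) (sub_l th' s v)).
Proof.
  intros Sf Sg i Hi X th HC. unfold syms_sub in HC. apply Cov_app in HC as [H1 H2].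
  assert (Ef : forall s (v : var (fst X) s), { t' : term Sf s | trt (mor_of i) t' = sub_f th (ss i s) (mapvar (ss i) (fst X) s v) }).
  { intros s v. apply constructive_indefinite_description. apply (trt_pre1 i Hi).
    intros y Hy. apply H1. apply in_flat_map. exists (existT _ _ (mapvar (ss i) (fst X) s v)). split; auto.
    apply allvars_in. }
  assert (El : forall s (v : var (snd X) s), { a' : action Sf s | tra (mor_of i) a' = sub_l th (ss i s) (mapvar (ss i) (snd X) s v) }).
  { intros s v. apply constructive_indefinite_description. apply (tra_pre1 i Hi).
    intros y Hy. apply H2. apply in_flat_map. exists (existT _ _ (mapvar (ss i) (snd X) s v)). split; auto.
    apply allvars_in. }
  exists (Subst Sf X (fun s v => proj1_sig (Ef s v)) (fun s v => proj1_sig (El s v))). simpl. split.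
  - intros. symmetry. exact (proj2_sig (Ef s v)).
  - intros. symmetry. exact (proj2_sig (El s v)).
Qed.

Lemma vx1_tr : forall Sf Sg (i : sigmor Sf Sg) x, trt (mor_of (lift_sig i (b1 x))) (vx1 x) = vx1 (ss i x).
Proof. intros. unfold vx1, vx, vy, vz, vt. simpl. f_equal. f_equal. apply var_eq. reflexivity. Qed.
Lemma vx_tr : forall Sf Sg (i : sigmor Sf Sg) x, trt (mor_of (lift_sig i (b3 x))) (vx x) = vx (ss i x).
Proof. intros. unfold vx1, vx, vy, vz, vt. simpl. f_equal. f_equal. apply var_eq. reflexivity. Qed.
Lemma vy_tr : forall Sf Sg (i : sigmor Sf Sg) x, trt (mor_of (lift_sig i (b3 x))) (vy x) = vy (ss i x).
Proof. intros. unfold vx1, vx, vy, vz, vt. simpl. f_equal. f_equal. apply var_eq. reflexivity. Qed.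
Lemma vz_tr : forall Sf Sg (i : sigmor Sf Sg) x, trt (mor_of (lift_sig i (b3 x))) (vz x) = vz (ss i x).
Proof. intros. unfold vx1, vx, vy, vz, vt. simpl. f_equal. f_equal. apply var_eq. reflexivity. Qed.

Lemma pre_cup : forall Sf Sg (i : sigmor Sf Sg) (A B : sset Sg), pre i (cup A B) = cup (pre i A) (pre i B).
Proof. reflexivity. Qed.

Lemma Or_pre : forall Sf Sg (i : sigmor Sf Sg), injective_sigmor i -> forall Phi, Cov i (syms (sOr Phi)) ->
  exists Phi', map (fun p => trs p Sg (mor_of i)) Phi' = Phi.
Proof.
  intros. destruct (trs_pre _ _ _ i H H0) as [psi E]. dependent destruction psi; simpl in E; try discriminate.
  injection E as E. apply inj_pair2 in E. eauto.
Qed.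
Lemma And_pre : forall Sf Sg (i : sigmor Sf Sg), injective_sigmor i -> forall Phi, Cov i (syms (sAnd Phi)) ->
  exists Phi', map (fun p => trs p Sg (mor_of i)) Phi' = Phi.
Proof.
  intros. destruct (trs_pre _ _ _ i H H0) as [psi E]. dependent destruction psi; simpl in E; try discriminate.
  injection E as E. apply inj_pair2 in E. eauto.
Qed.

Lemma block_pre : forall Sf Sg (i : sigmor Sf Sg) (X : block Sg),
  Cov i (map ySort (fst X ++ snd X)) -> exists X', mapb (ss i) X' = X.
Proof.
  intros Sf Sg i [l1 l2] HS. simpl in HS.
  destruct (list_pre _ _ (ss i) l1) as [l1' E1].
  { intros x Hx. apply (HS (ySort x)). apply in_map. apply in_or_app. auto. }
  destruct (list_pre _ _ (ss i) l2) as [l2' E2].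
  { intros x Hx. apply (HS (ySort x)). apply in_map. apply in_or_app. auto. }
  exists (l1', l2'). unfold mapb. simpl. congruence.
Qed.

Section Bspec.
Context {Sf Sg} (i : sigmor Sf Sg) (Hi : injective_sigmor i) (x : srt Sf).
Lemma C1a_b1 : forall s (a : action Sf s), tra (mor_of (lift_sig i (b1 x))) (EA (b1 x) a) = @EA Sg (b1 (ss i x)) (ss i s) (tra (mor_of i) a).
Proof. intros. exact (C1a i (b1 x) s a). Qed.
Lemma C1t_b1 : forall s (t : term Sf s), trt (mor_of (lift_sig i (b1 x))) (E (b1 x) t) = @E Sg (b1 (ss i x)) (ss i s) (trt (mor_of i) t).
Proof. intros. exact (C1t i (b1 x) s t). Qed.
Lemma C1a_b3 : forall s (a : action Sf s), tra (mor_of (lift_sig i (b3 x))) (EA (b3 x) a) = @EA Sg (b3 (ss i x)) (ss i s) (tra (mor_of i) a).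
Proof. intros. exact (C1a i (b3 x) s a). Qed.
Lemma pre_up_b1 : forall (G : sset Sg), pre (lift_sig i (b1 x)) (up (b1 (ss i x)) G) = up (b1 x) (pre i G).
Proof. intros. exact (pre_up i Hi (b1 x) G). Qed.
Lemma pre_up_b3 : forall (G : sset Sg), pre (lift_sig i (b3 x)) (up (b3 (ss i x)) G) = up (b3 x) (pre i G).
Proof. intros. exact (pre_up i Hi (b3 x) G). Qed.
End Bspec.

Ltac st K := exists K; intros Sf i Hi HC; simpl in HC; covsplit; specK i Hi.
Ltac srt_of b := match type of b with action _ ?x => x | term _ ?x => x end.
Ltac spec_ext HK K x i Hi X :=
  match goal with HP : Cov i (proj_ext K) |- _ =>
    specialize (HK _ (lift_sig i X) (lift_sig_inj _ _ _ _ Hi) (Cov_lift _ _ i X K HP)) end.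

Ltac pts i Hi phi x := match goal with H : Cov i (syms phi) |- _ =>
  let E := fresh "E" in destruct (trs_pre _ phi _ i Hi H) as [x E]; subst phi end.

Lemma deriv_B : forall Sg G D, deriv Sg G D -> BP (fun Sf i => deriv Sf (pre i G) (pre i D)).
Proof.
  intros Sg G D H. induction H.
  - destruct (bderiv_B _ _ _ H1) as [K HK]. exists K. intros Sf i Hi HC.
    rewrite !pre_cup. apply d_atom; [apply basic_pre; auto|apply basic_pre; auto|apply HK; auto].
  - st (syms_t t0 ++ syms_t t1). ptt i Hi t0 u0. ptt i Hi t1 u1.
    rewrite (pre_add i Hi (sTr (azero _) u0 u1)). apply d_zero.
  - destruct IHderiv1 as [K1 HK1]. destruct IHderiv2 as [K2 HK2].
    st (syms (sTr (aunion a0 a1) t0 t1) ++ K1 ++ K2).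
    pta i Hi a0 c0. pta i Hi a1 c1. ptt i Hi t0 u0. ptt i Hi t1 u1.
    rewrite (pre_add i Hi (sTr c0 u0 u1)) in HK1. rewrite (pre_add i Hi (sTr c1 u0 u1)) in HK2.
    rewrite (pre_add i Hi (sTr (aunion c0 c1) u0 u1)), !pre_cup. apply d_unionL; auto.
  - destruct IHderiv as [K HK]. st (syms (sTr (aunion a0 a1) t0 t1) ++ K).
    pta i Hi a0 c0. pta i Hi a1 c1. ptt i Hi t0 u0. ptt i Hi t1 u1.
    rewrite (pre_add i Hi (sTr c0 u0 u1)) in HK. rewrite (pre_add i Hi (sTr (aunion c0 c1) u0 u1)). apply d_unionR0; auto.
  - destruct IHderiv as [K HK]. st (syms (sTr (aunion a0 a1) t0 t1) ++ K).
    pta i Hi a0 c0. pta i Hi a1 c1. ptt i Hi t0 u0. ptt i Hi t1 u1.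
    rewrite (pre_add i Hi (sTr c1 u0 u1)) in HK. rewrite (pre_add i Hi (sTr (aunion c0 c1) u0 u1)). apply d_unionR1; auto.
  - destruct IHderiv1 as [K1 HK1]. destruct IHderiv2 as [K2 HK2].
    st (syms (sTr (aimp a0 a1) t0 t1) ++ K1 ++ K2).
    pta i Hi a0 c0. pta i Hi a1 c1. ptt i Hi t0 u0. ptt i Hi t1 u1.
    rewrite (pre_add i Hi (sTr c0 u0 u1)) in HK1. rewrite (pre_add i Hi (sTr c1 u0 u1)) in HK2.
    rewrite (pre_add i Hi (sTr (aimp c0 c1) u0 u1)), !pre_cup. apply d_aimpL; auto.
  - destruct IHderiv as [K HK]. st (syms (sTr (aimp a0 a1) t0 t1) ++ K).
    pta i Hi a0 c0. pta i Hi a1 c1. ptt i Hi t0 u0. ptt i Hi t1 u1.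
    rewrite (pre_add i Hi (sTr c0 u0 u1)), (pre_add i Hi (sTr c1 u0 u1)) in HK.
    rewrite (pre_add i Hi (sTr (aimp c0 c1) u0 u1)). apply d_aimpR; auto.
  - destruct IHderiv as [K HK]. st (syms_t t0 ++ syms_t t1 ++ K). ptt i Hi t0 u0. ptt i Hi t1 u1.
    rewrite (pre_add i Hi (sEq u0 u1)) in HK. rewrite (pre_add i Hi (sTr (aone _) u0 u1)). apply d_oneL; auto.
  - destruct IHderiv as [K HK]. st (syms_t t0 ++ syms_t t1 ++ K). ptt i Hi t0 u0. ptt i Hi t1 u1.
    rewrite (pre_add i Hi (sEq u0 u1)) in HK. rewrite (pre_add i Hi (sTr (aone _) u0 u1)). apply d_oneR; auto.
  - destruct IHderiv as [K HK]. st (syms (sTr (aseq a0 a1) t0 t1) ++ proj_ext K).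
    pta i Hi a0 c0. pta i Hi a1 c1. ptt i Hi t0 u0. ptt i Hi t1 u1.
    let x := srt_of u0 in
    spec_ext HK K x i Hi (b1 x);
    rewrite <- (C1a_b1 i x _ c0), <- (C1a_b1 i x _ c1), <- (C1t_b1 i x _ u0), <- (C1t_b1 i x _ u1),
      <- (vx1_tr _ _ i x) in HK;
    rewrite (pre_add (lift_sig i (b1 x)) (lift_sig_inj _ _ _ _ Hi) (sTr (EA (b1 x) c0) (E (b1 x) u0) (vx1 x))),
      (pre_add (lift_sig i (b1 x)) (lift_sig_inj _ _ _ _ Hi) (sTr (EA (b1 x) c1) (vx1 x) (E (b1 x) u1))),
      !(pre_up_b1 i Hi x) in HK.
    rewrite (pre_add i Hi (sTr (aseq c0 c1) u0 u1)). apply d_seqL; auto.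
  - destruct IHderiv1 as [K1 HK1]. destruct IHderiv2 as [K2 HK2].
    st (syms (sTr (aseq a0 a1) t0 t1) ++ syms_t t ++ K1 ++ K2).
    pta i Hi a0 c0. pta i Hi a1 c1. ptt i Hi t0 u0. ptt i Hi t1 u1. ptt i Hi t u.
    rewrite (pre_add i Hi (sTr c0 u0 u)) in HK1. rewrite (pre_add i Hi (sTr c1 u u1)) in HK2.
    rewrite (pre_add i Hi (sTr (aseq c0 c1) u0 u1)), !pre_cup. eapply d_seqR; eauto.
  - destruct IHderiv as [K HK]. st (syms (sTr (arel a0 a1) t0 t1) ++ proj_ext K).
    pta i Hi a0 c0. pta i Hi a1 c1. ptt i Hi t0 u0. ptt i Hi t1 u1.
    let x := srt_of u0 in
    spec_ext HK K x i Hi (b1 x);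
    rewrite <- (C1a_b1 i x _ c0), <- (C1a_b1 i x _ c1), <- (C1t_b1 i x _ u0), <- (C1t_b1 i x _ u1),
      <- (vx1_tr _ _ i x) in HK;
    rewrite (pre_add (lift_sig i (b1 x)) (lift_sig_inj _ _ _ _ Hi) (sTr (EA (b1 x) c0) (vx1 x) (E (b1 x) u0))),
      (pre_add (lift_sig i (b1 x)) (lift_sig_inj _ _ _ _ Hi) (sTr (EA (b1 x) c1) (vx1 x) (E (b1 x) u1))),
      !(pre_up_b1 i Hi x) in HK.
    rewrite (pre_add i Hi (sTr (arel c0 c1) u0 u1)). apply d_relL; auto.
  - destruct IHderiv1 as [K1 HK1]. destruct IHderiv2 as [K2 HK2].
    st (syms (sTr (arel a0 a1) t0 t1) ++ syms_t t ++ K1 ++ K2).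
    pta i Hi a0 c0. pta i Hi a1 c1. ptt i Hi t0 u0. ptt i Hi t1 u1. ptt i Hi t u.
    rewrite (pre_add i Hi (sTr c0 u u0)) in HK1. rewrite (pre_add i Hi (sTr c1 u u1)) in HK2.
    rewrite (pre_add i Hi (sTr (arel c0 c1) u0 u1)), !pre_cup. eapply d_relR; eauto.
  - destruct IHderiv1 as [K1 HK1]. destruct IHderiv2 as [K2 HK2].
    st (syms phi ++ syms psi ++ K1 ++ K2).
    pts i Hi phi phi'. pts i Hi psi psi'.
    rewrite (pre_add i Hi phi') in HK1. rewrite (pre_add i Hi psi') in HK2.
    rewrite (pre_add i Hi (sImp phi' psi')), !pre_cup. apply d_impL; auto.
  - destruct IHderiv as [K HK]. st (syms phi ++ syms psi ++ K).
    pts i Hi phi phi'. pts i Hi psi psi'.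
    rewrite (pre_add i Hi phi'), (pre_add i Hi psi') in HK.
    rewrite (pre_add i Hi (sImp phi' psi')). apply d_impR; auto.
  -
    destruct (union_nat Sg (length Phi) (fun k K => forall phi, nth_error Phi k = Some phi -> forall Sf (i : sigmor Sf Sg),
       injective_sigmor i -> Cov i K -> deriv Sf (pre i (add phi (GF k))) (pre i (DF k)))) as [K HK].
    { intros k Hk. destruct (nth_error Phi k) as [phi|] eqn:Ek; [|apply nth_error_None in Ek; lia].
      destruct (H0 k phi Ek) as [K HK]. exists K. intros phi' Ek'. injection Ek' as <-. exact HK. }
    exists (syms (sOr Phi) ++ K). intros Sf i Hi HC. apply Cov_app in HC as [HP HC].
    destruct (Or_pre _ _ i Hi Phi HP) as [Phi' EP]. subst Phi.
    rewrite (pre_add i Hi (sOr Phi')), !(pre_bigcup i). apply d_orL. intros k phi' Ek.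
    assert (Hk : k < length (map (fun p => trs p Sg (mor_of i)) Phi')).
    { rewrite length_map. apply nth_error_Some. congruence. }
    destruct (HK k Hk) as [K' [HK1 HK2]].
    specialize (HK1 (trs phi' Sg (mor_of i))). rewrite nth_error_map, Ek in HK1.
    specialize (HK1 eq_refl Sf i Hi (Cov_sub _ _ i K K' HK2 HC)).
    rewrite (pre_add i Hi phi') in HK1. exact HK1.
  - destruct IHderiv as [K HK]. exists (syms (sOr Phi) ++ syms phi ++ K). intros Sf i Hi HC.
    apply Cov_app in HC as [HP HC]. apply Cov_app in HC as [H1 HC]. specK i Hi.
    destruct (Or_pre _ _ i Hi Phi HP) as [Phi' EP]. subst Phi.
    destruct (trs_pre _ phi _ i Hi H1) as [phi' E1]. subst phi.
    rewrite (pre_add i Hi phi') in HK. rewrite (pre_add i Hi (sOr Phi')). apply d_orR with phi'; auto.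
    apply in_map_iff in H as [x [Ex Hx]]. apply (trs_inj _ x _ i Hi) in Ex. subst. auto.
  - destruct IHderiv as [K HK]. exists (syms (sAnd Phi) ++ syms phi ++ K). intros Sf i Hi HC.
    apply Cov_app in HC as [HP HC]. apply Cov_app in HC as [H1 HC]. specK i Hi.
    destruct (And_pre _ _ i Hi Phi HP) as [Phi' EP]. subst Phi.
    destruct (trs_pre _ phi _ i Hi H1) as [phi' E1]. subst phi.
    rewrite (pre_add i Hi phi') in HK. rewrite (pre_add i Hi (sAnd Phi')). apply d_andL with phi'; auto.
    apply in_map_iff in H as [x [Ex Hx]]. apply (trs_inj _ x _ i Hi) in Ex. subst. auto.
  -
    destruct (union_nat Sg (length Phi) (fun k K => forall phi, nth_error Phi k = Some phi -> forall Sf (i : sigmor Sf Sg),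
       injective_sigmor i -> Cov i K -> deriv Sf (pre i (GF k)) (pre i (add phi (DF k))))) as [K HK].
    { intros k Hk. destruct (nth_error Phi k) as [phi|] eqn:Ek; [|apply nth_error_None in Ek; lia].
      destruct (H0 k phi Ek) as [K HK]. exists K. intros phi' Ek'. injection Ek' as <-. exact HK. }
    exists (syms (sAnd Phi) ++ K). intros Sf i Hi HC. apply Cov_app in HC as [HP HC].
    destruct (And_pre _ _ i Hi Phi HP) as [Phi' EP]. subst Phi.
    rewrite (pre_add i Hi (sAnd Phi')), !(pre_bigcup i). apply d_andR. intros k phi' Ek.
    assert (Hk : k < length (map (fun p => trs p Sg (mor_of i)) Phi')).
    { rewrite length_map. apply nth_error_Some. congruence. }
    destruct (HK k Hk) as [K' [HK1 HK2]].
    specialize (HK1 (trs phi' Sg (mor_of i))). rewrite nth_error_map, Ek in HK1.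
    specialize (HK1 eq_refl Sf i Hi (Cov_sub _ _ i K K' HK2 HC)).
    rewrite (pre_add i Hi phi') in HK1. exact HK1.
  - destruct IHderiv as [K HK]. exists (syms (sEx X phi) ++ proj_ext K). intros Sf i Hi HC.
    apply Cov_app in HC as [HS HC]. simpl in HS. apply Cov_app in HS as [HS HP].
    destruct (block_pre _ _ i X HS) as [X' EX]. subst X.
    destruct (trs_pre _ phi _ (lift_sig i X') (lift_sig_inj _ _ _ _ Hi) (Cov_lift _ _ i X' _ HP)) as [phi' E1]. subst phi.
    specialize (HK _ (lift_sig i X') (lift_sig_inj _ _ _ _ Hi) (Cov_lift _ _ i X' K HC)).
    rewrite (pre_add (lift_sig i X') (lift_sig_inj _ _ _ _ Hi) phi'), !(pre_up i Hi X') in HK.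
    rewrite <- lift_mor_of. rewrite (pre_add i Hi (sEx X' phi')). apply d_exL. exact HK.
  - destruct IHderiv as [K HK]. exists (syms (sEx X phi) ++ syms_sub th ++ K). intros Sf i Hi HC.
    apply Cov_app in HC as [HS HC]. simpl in HS. apply Cov_app in HS as [HS HP]. apply Cov_app in HC as [HT HC].
    specK i Hi.
    destruct (block_pre _ _ i X HS) as [X' EX]. subst X.
    destruct (trs_pre _ phi _ (lift_sig i X') (lift_sig_inj _ _ _ _ Hi) (Cov_lift _ _ i X' _ HP)) as [phi' E1]. subst phi.
    destruct (sub_pre _ _ i Hi X' th HT) as [th' [HF HL]].
    rewrite <- (C2 i X' th' th HF HL phi') in HK. rewrite (pre_add i Hi (inst th' phi')) in HK.
    rewrite <- lift_mor_of. rewrite (pre_add i Hi (sEx X' phi')). eapply d_exR. exact HK.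
  - destruct IHderiv as [K HK]. exists (syms (sAll X phi) ++ syms_sub th ++ K). intros Sf i Hi HC.
    apply Cov_app in HC as [HS HC]. simpl in HS. apply Cov_app in HS as [HS HP]. apply Cov_app in HC as [HT HC].
    specK i Hi.
    destruct (block_pre _ _ i X HS) as [X' EX]. subst X.
    destruct (trs_pre _ phi _ (lift_sig i X') (lift_sig_inj _ _ _ _ Hi) (Cov_lift _ _ i X' _ HP)) as [phi' E1]. subst phi.
    destruct (sub_pre _ _ i Hi X' th HT) as [th' [HF HL]].
    rewrite <- (C2 i X' th' th HF HL phi') in HK. rewrite (pre_add i Hi (inst th' phi')) in HK.
    rewrite <- lift_mor_of. rewrite (pre_add i Hi (sAll X' phi')). eapply d_allL. exact HK.
  - destruct IHderiv as [K HK]. exists (syms (sAll X phi) ++ proj_ext K). intros Sf i Hi HC.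
    apply Cov_app in HC as [HS HC]. simpl in HS. apply Cov_app in HS as [HS HP].
    destruct (block_pre _ _ i X HS) as [X' EX]. subst X.
    destruct (trs_pre _ phi _ (lift_sig i X') (lift_sig_inj _ _ _ _ Hi) (Cov_lift _ _ i X' _ HP)) as [phi' E1]. subst phi.
    specialize (HK _ (lift_sig i X') (lift_sig_inj _ _ _ _ Hi) (Cov_lift _ _ i X' K HC)).
    rewrite (pre_add (lift_sig i X') (lift_sig_inj _ _ _ _ Hi) phi'), !(pre_up i Hi X') in HK.
    rewrite <- lift_mor_of. rewrite (pre_add i Hi (sAll X' phi')). apply d_allR. exact HK.
  - st (syms (sTr (astar a) t0 t1)). pta i Hi a c0. ptt i Hi t0 u0. ptt i Hi t1 u1.
    rewrite !(pre_add i Hi (sTr (astar c0) u0 u1)). apply d_starAx.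
  - destruct IHderiv1 as [K1 HK1]. destruct IHderiv2 as [K2 HK2].
    st (syms (sTr (astar a) t0 t1) ++ K1 ++ K2). pta i Hi a c0. ptt i Hi t0 u0. ptt i Hi t1 u1.
    rewrite (pre_add i Hi (sTr (astar c0) u0 u1)) in HK1, HK2. rewrite !pre_cup. eapply d_starCut; eauto.
  - destruct IHderiv as [K HK]. st (syms (sTr (astar a) t0 t1) ++ K).
    pta i Hi a c0. ptt i Hi t0 u0. ptt i Hi t1 u1.
    rewrite (pre_add i Hi (sEq u0 u1)) in HK. rewrite (pre_add i Hi (sTr (astar c0) u0 u1)). apply d_starR0; auto.
  - destruct IHderiv1 as [K1 HK1]. destruct IHderiv2 as [K2 HK2].
    st (syms (sTr (astar a) t0 t1) ++ syms_t t ++ K1 ++ K2).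
    pta i Hi a c0. ptt i Hi t0 u0. ptt i Hi t1 u1. ptt i Hi t u.
    rewrite (pre_add i Hi (sTr (astar c0) u0 u)) in HK1. rewrite (pre_add i Hi (sTr c0 u u1)) in HK2.
    rewrite (pre_add i Hi (sTr (astar c0) u0 u1)), !pre_cup. eapply d_starR1; eauto.
  - destruct IHderiv1 as [K1 HK1]. destruct IHderiv2 as [K2 HK2].
    st (syms (sTr (astar a) t0 t1) ++ syms_t t ++ K1 ++ K2).
    pta i Hi a c0. ptt i Hi t0 u0. ptt i Hi t1 u1. ptt i Hi t u.
    rewrite (pre_add i Hi (sTr c0 u0 u)) in HK1. rewrite (pre_add i Hi (sTr (astar c0) u u1)) in HK2.
    rewrite (pre_add i Hi (sTr (astar c0) u0 u1)), !pre_cup. eapply d_starR2; eauto.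
  - destruct IHderiv1 as [K1 HK1]. destruct IHderiv2 as [K2 HK2]. destruct IHderiv3 as [K3 HK3].
    st (syms (sTr (astar a) t0 t1) ++ syms_a tt ++ syms_t t ++ K1 ++ proj_ext K2 ++ K3).
    pta i Hi a c0. pta i Hi tt d0. ptt i Hi t0 u0. ptt i Hi t1 u1. ptt i Hi t w0.
    rewrite (pre_add i Hi (sTr d0 w0 u0)) in HK1. rewrite (pre_add i Hi (sTr d0 w0 u1)) in HK3.
    let x := srt_of u0 in
    spec_ext HK2 K2 x i Hi (b3 x);
    rewrite <- (C1a_b3 i x _ c0), <- (C1a_b3 i x _ d0), <- (vx_tr _ _ i x), <- (vy_tr _ _ i x), <- (vz_tr _ _ i x) in HK2;
    rewrite (pre_add (lift_sig i (b3 x)) (lift_sig_inj _ _ _ _ Hi) (sTr (EA (b3 x) d0) (vz x) (vx x))),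
      (pre_add (lift_sig i (b3 x)) (lift_sig_inj _ _ _ _ Hi) (sTr (EA (b3 x) c0) (vx x) (vy x))),
      (pre_add (lift_sig i (b3 x)) (lift_sig_inj _ _ _ _ Hi) (sTr (EA (b3 x) d0) (vz x) (vy x))),
      !(pre_up_b3 i Hi x) in HK2.
    rewrite (pre_add i Hi (sTr (astar c0) u0 u1)), !pre_cup. eapply d_starIndL; eauto.
  - destruct IHderiv1 as [K1 HK1]. destruct IHderiv2 as [K2 HK2]. destruct IHderiv3 as [K3 HK3].
    st (syms (sTr (astar a) t0 t1) ++ syms_a tt ++ syms_t t ++ K1 ++ proj_ext K2 ++ K3).
    pta i Hi a c0. pta i Hi tt d0. ptt i Hi t0 u0. ptt i Hi t1 u1. ptt i Hi t w0.
    rewrite (pre_add i Hi (sTr d0 u1 w0)) in HK1. rewrite (pre_add i Hi (sTr d0 u0 w0)) in HK3.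
    let x := srt_of u0 in
    spec_ext HK2 K2 x i Hi (b3 x);
    rewrite <- (C1a_b3 i x _ c0), <- (C1a_b3 i x _ d0), <- (vx_tr _ _ i x), <- (vy_tr _ _ i x), <- (vz_tr _ _ i x) in HK2;
    rewrite (pre_add (lift_sig i (b3 x)) (lift_sig_inj _ _ _ _ Hi) (sTr (EA (b3 x) c0) (vx x) (vy x))),
      (pre_add (lift_sig i (b3 x)) (lift_sig_inj _ _ _ _ Hi) (sTr (EA (b3 x) d0) (vy x) (vz x))),
      (pre_add (lift_sig i (b3 x)) (lift_sig_inj _ _ _ _ Hi) (sTr (EA (b3 x) d0) (vx x) (vz x))),
      !(pre_up_b3 i Hi x) in HK2.
    rewrite (pre_add i Hi (sTr (astar c0) u0 u1)), !pre_cup. eapply d_starIndR; eauto.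
Qed.

Definition fin {S} (G : sset S) := exists L : list (sentence S), forall phi, G phi <-> In phi L.
Definition sub {S} (G G' : sset S) := forall phi, G phi -> G' phi.
Definition inter {S} (A B : sset S) : sset S := fun phi => A phi /\ B phi.
Definition upre {Sg} (X : block Sg) (B : sset Sg) (A : sset (ext Sg X)) : sset Sg :=
  fun phi => B phi /\ A (trs phi _ (incl Sg X)).
Definition empty {S} : sset S := fun _ => False.

Lemma fin_empty : forall S, fin (@empty S).
Proof. intros. exists []. unfold empty. simpl. tauto. Qed.
Lemma fin_add : forall S (P : sentence S) G, fin G -> fin (add P G).
Proof. intros S P G [L HL]. exists (P :: L). unfold add. simpl. intros. rewrite HL. intuition. Qed.
Lemma fin_cup : forall S (A B : sset S), fin A -> fin B -> fin (cup A B).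
Proof. intros S A B [L1 H1] [L2 H2]. exists (L1 ++ L2). unfold cup. intros. rewrite in_app_iff, H1, H2. tauto. Qed.
Lemma fin_sub : forall S (A B : sset S), fin A -> sub B A -> fin B.
Proof.
  intros S A B [L HL] Hs.
  assert (exists L', forall phi, In phi L' <-> In phi L /\ B phi) as [L' HL'].
  { clear HL. induction L as [|a L IH]; [exists []; simpl; tauto|]. destruct IH as [L' HL'].
    destruct (classic (B a)) as [Hb|Hb].
    - exists (a :: L'). intros. simpl. rewrite HL'. intuition; subst; auto.
    - exists L'. intros. simpl. rewrite HL'. intuition; subst; tauto. }
  exists L'. intros. rewrite HL'. rewrite <- HL. split; [intros; split; auto|tauto].
Qed.
Lemma fin_inter : forall S (A B : sset S), fin A -> fin (inter A B).
Proof. intros. apply (fin_sub _ A); auto. unfold sub, inter. tauto. Qed.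
Lemma fin_up : forall Sg X (A : sset Sg), fin A -> fin (up X A).
Proof.
  intros Sg X A [L HL]. exists (map (fun p => trs p _ (incl Sg X)) L). intros psi. unfold up.
  rewrite in_map_iff. split; intros [phi [H1 H2]]; exists phi; split; auto; apply HL; auto.
Qed.
Lemma fin_upre : forall Sg X (B : sset Sg) (A : sset (ext Sg X)), fin A -> fin (upre X B A).
Proof.
  intros Sg X B A [L HL].
  assert (exists L', forall phi, In phi L' <-> B phi /\ In (trs phi _ (incl Sg X)) L) as [L' HL'].
  { clear HL. induction L as [|a L IH].
    - exists []. simpl. tauto.
    - destruct IH as [L' HL'].
      destruct (classic (exists phi, B phi /\ trs phi _ (incl Sg X) = a)) as [[phi [Hb Ea]]|Hn].
      + exists (phi :: L'). intros q. simpl. rewrite HL'. split.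
        * intros [E|[H1 H2]]; [subst; auto|auto].
        * intros [H1 [E|H2]]; auto. left. rewrite incl_mor_of in *.
          apply (trs_inj _ phi _ _ (inclsig_inj Sg X)). congruence.
      + exists L'. intros q. simpl. rewrite HL'. split; [tauto|].
        intros [H1 [E|H2]]; auto. exfalso. apply Hn. exists q. auto. }
  exists L'. intros phi. unfold upre. rewrite HL', HL. tauto.
Qed.
Lemma fin_bigcup : forall S (Phi : list (sentence S)) GF,
  (forall k phi, nth_error Phi k = Some phi -> fin (GF k)) -> fin (bigcup Phi GF).
Proof.
  intros S Phi GF H.
  assert (forall n, n <= length Phi -> fin (fun psi => exists k phi, k < n /\ nth_error Phi k = Some phi /\ GF k psi)) as Hn.
  { induction n as [|n IH]; intros Hle.
    - exists []. simpl. intros psi. split; [intros [k [p [Hk _]]]; lia|tauto].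
    - destruct (nth_error Phi n) as [phi|] eqn:En; [|apply nth_error_None in En; lia].
      destruct (H n phi En) as [L HL]. destruct (IH ltac:(lia)) as [L' HL'].
      exists (L ++ L'). intros psi. rewrite in_app_iff, <- HL, <- HL'. split.
      + intros [k [p [Hk [Ek Hg]]]]. destruct (PeanoNat.Nat.eq_dec k n); [subst; left; auto|right; exists k, p; split; [lia|auto]].
      + intros [Hg|[k [p [Hk [Ek Hg]]]]]; [exists n, phi; auto|exists k, p; split; [lia|auto]]. }
  destruct (Hn (length Phi) (le_n _)) as [L HL]. exists L. intros psi. rewrite <- HL. unfold bigcup. split.
  - intros [k [p [Ek Hg]]]. exists k, p. split; auto. apply nth_error_Some. congruence.
  - intros [k [p [_ [Ek Hg]]]]. exists k, p. auto.
Qed.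

Lemma L_add : forall S (A B : sset S) a, sub A (add a B) -> A a -> A = add a (inter A B).
Proof.
  intros. apply sset_ext. intros phi. unfold add, inter, sub in *. split.
  - intros Hp. destruct (H phi Hp); auto.
  - intros [E|[E _]]; subst; auto.
Qed.
Lemma L_up : forall Sg X (A : sset (ext Sg X)) (B : sset Sg), sub A (up X B) -> A = up X (upre X B A).
Proof.
  intros. apply sset_ext. intros psi. unfold up, upre, sub in *. split.
  - intros Hp. destruct (H psi Hp) as [phi [Hb E]]. exists phi. subst. auto.
  - intros [phi [[Hb Ha] E]]. subst. auto.
Qed.
Lemma L_1up : forall Sg X (A : sset (ext Sg X)) (B : sset Sg) a, sub A (add a (up X B)) -> A a ->
  A = add a (up X (upre X B A)).
Proof.
  intros. apply sset_ext. intros psi. unfold up, upre, add, sub in *. split.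
  - intros Hp. destruct (H psi Hp) as [E|[phi [Hb E]]]; auto. right. exists phi. subst. auto.
  - intros [E|[phi [[Hb Ha] E]]]; subst; auto.
Qed.
Lemma L_2up : forall Sg X (A : sset (ext Sg X)) (B : sset Sg) a b, sub A (add a (add b (up X B))) -> A a -> A b ->
  A = add a (add b (up X (upre X B A))).
Proof.
  intros. apply sset_ext. intros psi. unfold up, upre, add, sub in *. split.
  - intros Hp. destruct (H psi Hp) as [E|[E|[phi [Hb E]]]]; auto. right. right. exists phi. subst. auto.
  - intros [E|[E|[phi [[Hb Ha] E]]]]; subst; auto.
Qed.

Lemma up_in : forall Sg X (A : sset Sg) phi, A phi -> up X A (trs phi _ (incl Sg X)).
Proof. intros. exists phi. auto. Qed.

Lemma bderiv_ext : forall S G D G' D', bderiv S G D -> G = G' -> D = D' -> bderiv S G' D'.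
Proof. intros. subst. auto. Qed.

Lemma bderiv_weak : forall S G D, bderiv S G D -> forall G' D', sub G G' -> sub D D' -> bderiv S G' D'.
Proof.
  intros S G D H. induction H; intros G'' D'' HG HD.
  - rewrite (L_add _ G'' G'' phi) by (unfold sub, add; auto; apply HG; left; auto).
    rewrite (L_add _ D'' D'' phi) by (unfold sub, add; auto; apply HD; left; auto). apply b_init.
  - rewrite (L_add _ D'' D'' (sEq t t)) by (unfold sub, add; auto; apply HD; left; auto). apply b_refl.
  - rewrite (L_add _ D'' D'' (sEq t' t)) by (unfold sub, add; auto; apply HD; left; auto). apply b_sym.
    apply IHbderiv; [auto|]. unfold sub, add, inter in *. intros p [E|E]; [left; auto|right; split; apply HD; right; auto].
  - rewrite (L_add _ D'' D'' (sEq t1 t3)) by (unfold sub, add; auto; apply HD; left; auto). apply b_trans with (t2 := t2).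
    + apply IHbderiv1; [auto|]. unfold sub, add, inter in *. intros p [E|E]; [left; auto|right; split; apply HD; right; auto].
    + apply IHbderiv2; [auto|]. unfold sub, add, inter in *. intros p [E|E]; [left; auto|right; split; apply HD; right; auto].
  - rewrite (L_add _ D'' D'' (sEq (app f ts) (app f ts'))) by (unfold sub, add; auto; apply HD; left; auto). apply b_cong.
    intros s0 u u' Hap. apply (H0 _ _ _ Hap); [auto|]. unfold sub, add, inter in *. intros p [E|E]; [left; auto|right; split; apply HD; right; auto].
  - rewrite (L_add _ D'' D'' (sTr (alab l) t0' t1')) by (unfold sub, add; auto; apply HD; left; auto). apply b_repl with (t0 := t0) (t1 := t1).
    + apply IHbderiv1; [auto|]. unfold sub, add, inter in *. intros p [E|E]; [left; auto|right; split; apply HD; right; auto].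
    + apply IHbderiv2; [auto|]. unfold sub, add, inter in *. intros p [E|E]; [left; auto|right; split; apply HD; right; auto].
    + apply IHbderiv3; [auto|]. unfold sub, add, inter in *. intros p [E|E]; [left; auto|right; split; apply HD; right; auto].
Qed.

Definition bfin {S} (G D : sset S) := exists G' D', fin G' /\ fin D' /\ sub G' G /\ sub D' D /\ bderiv S G' D'.

Lemma bfin_add : forall S (G D : sset S) P, bfin G (add P D) ->
  exists G' D', fin G' /\ fin D' /\ sub G' G /\ sub D' D /\ bderiv S G' (add P D').
Proof.
  intros S G D P [G' [D' [f1 [f2 [s1 [s2 d]]]]]]. exists G', (inter D' D). repeat split; auto.
  - apply fin_inter; auto.
  - unfold sub, inter. tauto.
  - apply (bderiv_weak _ _ _ d); unfold sub, add, inter in *; auto. intros p Hp. destruct (s2 p Hp); auto.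
Qed.

Lemma bderiv_fin : forall S G D, bderiv S G D -> bfin G D.
Proof.
  intros S G D H. induction H.
  - exists (add phi empty), (add phi empty). repeat split; try apply fin_add; try apply fin_empty;
     unfold sub, add, empty; try (intros p [E|[]]; auto). apply b_init.
  - exists empty, (add (sEq t t) empty). repeat split; try apply fin_add; try apply fin_empty;
     unfold sub, add, empty; try (intros p [E|[]]; auto); try (intros p []). apply b_refl.
  - destruct (bfin_add _ _ _ _ IHbderiv) as [G' [D' [f1 [f2 [s1 [s2 d]]]]]].
    exists G', (add (sEq t' t) D'). repeat split; auto; try apply fin_add; auto.
    + unfold sub, add in *. intros p [E|E]; auto.
    + apply b_sym; auto.
  - destruct (bfin_add _ _ _ _ IHbderiv1) as [G1 [D1 [f1 [f2 [s1 [s2 d1]]]]]].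
    destruct (bfin_add _ _ _ _ IHbderiv2) as [G2 [D2 [f3 [f4 [s3 [s4 d2]]]]]].
    exists (cup G1 G2), (add (sEq t1 t3) (cup D1 D2)). repeat split; try apply fin_add; try apply fin_cup; auto.
    + unfold sub, cup in *. intros p [E|E]; auto.
    + unfold sub, add, cup in *. intros p [E|[E|E]]; auto.
    + apply b_trans with (t2 := t2); [eapply bderiv_weak; [exact d1| |]|eapply bderiv_weak; [exact d2| |]];
        unfold sub, add, cup; intros p Hp; intuition.
  - destruct (argpair_list S w ts ts') as [L HL].
    assert (HU : forall L' : list {s : srt S & (term S s * term S s)%type}, (forall p, In p L' -> bfin G (add (sEq (fst (projT2 p)) (snd (projT2 p))) D)) ->
       exists G' D', fin G' /\ fin D' /\ sub G' G /\ sub D' D /\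
       forall p, In p L' -> bderiv S G' (add (sEq (fst (projT2 p)) (snd (projT2 p))) D')).
    { intros L'. induction L' as [|p L' IH]; intros HP.
      - exists empty, empty. repeat split; try apply fin_empty; unfold sub, empty; try tauto. intros p [].
      - destruct IH as [G2 [D2 [f3 [f4 [s3 [s4 d2]]]]]]; [intros; apply HP; right; auto|].
        destruct (bfin_add _ _ _ _ (HP p (or_introl eq_refl))) as [G1 [D1 [f1 [f2 [s1 [s2 d1]]]]]].
        exists (cup G1 G2), (cup D1 D2). repeat split; try apply fin_cup; auto.
        + unfold sub, cup in *. intros q [E|E]; auto.
        + unfold sub, cup in *. intros q [E|E]; auto.
        + intros q [E|Hq].
          * subst. eapply bderiv_weak; [exact d1| |]; unfold sub, add, cup; intros r Hr; intuition.
          * eapply bderiv_weak; [exact (d2 q Hq)| |]; unfold sub, add, cup; intros r Hr; intuition. }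
    destruct (HU L) as [G' [D' [f1 [f2 [s1 [s2 d]]]]]].
    { intros [s0 [u u']] Hp. apply HL in Hp. apply H0. auto. }
    exists G', (add (sEq (app f ts) (app f ts')) D'). repeat split; try apply fin_add; auto.
    + unfold sub, add in *. intros p [E|E]; auto.
    + apply b_cong. intros s0 u u' Hap. apply HL in Hap. apply (d _ Hap).
  - destruct (bfin_add _ _ _ _ IHbderiv1) as [G1 [D1 [f1 [f2 [s1 [s2 d1]]]]]].
    destruct (bfin_add _ _ _ _ IHbderiv2) as [G2 [D2 [f3 [f4 [s3 [s4 d2]]]]]].
    destruct (bfin_add _ _ _ _ IHbderiv3) as [G3 [D3 [f5 [f6 [s5 [s6 d3]]]]]].
    exists (cup G1 (cup G2 G3)), (add (sTr (alab l) t0' t1') (cup D1 (cup D2 D3))).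
    repeat split; repeat (apply fin_add || apply fin_cup); auto.
    + unfold sub, cup in *. intros p [E|[E|E]]; auto.
    + unfold sub, add, cup in *. intros p [E|[E|[E|E]]]; auto.
    + apply b_repl with (t0 := t0) (t1 := t1);
        [eapply bderiv_weak; [exact d1| |]|eapply bderiv_weak; [exact d2| |]|eapply bderiv_weak; [exact d3| |]];
        unfold sub, add, cup; intros p Hp; intuition.
Qed.

Definition AP {Sg} (G D : sset Sg) := forall Gx Dx, fin Gx -> fin Dx -> sub Gx G -> sub Dx D ->
  exists G' D', fin G' /\ fin D' /\ sub Gx G' /\ sub G' G /\ sub Dx D' /\ sub D' D /\ deriv Sg G' D'.

Ltac fins := repeat (apply fin_add || apply fin_cup || apply fin_up || apply fin_upre || apply fin_inter || apply fin_empty); auto.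
Definition Done (P : Prop) := True.
Ltac brk := repeat match goal with
  | H : add _ _ _ |- _ => destruct H as [H|H]; [subst|]
  | H : cup _ _ _ |- _ => destruct H as [H|H]
  | H : inter _ _ _ |- _ => destruct H
  | H : upre _ _ _ _ |- _ => destruct H
  | H : up _ _ _ |- _ => let p := fresh "p" in destruct H as [p [? H]]; subst
  | H : empty _ |- _ => destruct H
  end.
Ltac fwd := repeat match goal with
  | S : sub ?A ?B, H : ?A ?x |- _ => lazymatch goal with _ : Done (B x) |- _ => fail
      | _ => assert (Done (B x)) by exact I; pose proof (S x H); brk end
  end.
Ltac sol n := lazymatch n with
  | 0 => fail
  | S ?m => first [ assumption
         | lazymatch goal with |- add _ _ _ => first [left; reflexivity | right; sol m] end
         | lazymatch goal with |- cup _ _ _ => first [left; sol m | right; sol m] end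
         | lazymatch goal with |- inter _ _ _ => split; sol m end
         | lazymatch goal with |- upre _ _ _ _ => split; sol m end
         | lazymatch goal with |- up _ _ (trs ?p _ _) => exists p; split; [sol m|reflexivity] end
         | match goal with S : sub ?A ?B |- ?B ?x => apply S; sol m end ] end.
Ltac sets := let x := fresh "x" in let Hx := fresh "Hx" in intros x Hx; brk; fwd; sol 10.
Ltac spl7 := split; [|split; [|split; [|split; [|split; [|split]]]]].
Ltac IHx IH Gx1 Dx1 nG1 nD1 ns1 ns2 ns3 ns4 nd1 :=
  let f1 := fresh "f" in let f2 := fresh "f" in
  destruct (IH Gx1 Dx1) as [nG1 [nD1 [f1 [f2 [ns1 [ns2 [ns3 [ns4 nd1]]]]]]]]; [fins|fins|sets|sets|].

Lemma deriv_A : forall Sg G D, deriv Sg G D -> AP G D.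
Proof.
  intros Sg G D H. induction H; intros Gx Dx fGx fDx sGx sDx.
  - destruct (bderiv_fin _ _ _ H1) as [Gb' [Db' [f1 [f2 [s1 [s2 d]]]]]].
    exists (cup Gb' Gx), (cup Dx Db'). spl7; [fins|fins|sets|sets|sets|sets|].
    apply d_atom; auto; intros p Hp; [apply H|apply H0]; auto.
  - exists (add (sTr (azero s) t0 t1) Gx), Dx. spl7; [fins|fins|sets|sets|sets|sets|]. apply d_zero.
  -
    IHx IHderiv1 (add (sTr a0 t0 t1) (inter Gx G0)) (inter Dx D0) G2 D2 s1 s2 s3 s4 d1.
    IHx IHderiv2 (add (sTr a1 t0 t1) (inter Gx G1)) (inter Dx D1) G3 D3 s5 s6 s7 s8 d2.
    rewrite (L_add _ G2 G0 _ s2 (s1 _ (or_introl eq_refl))) in d1.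
    rewrite (L_add _ G3 G1 _ s6 (s5 _ (or_introl eq_refl))) in d2.
    exists (add (sTr (aunion a0 a1) t0 t1) (cup (inter G2 G0) (inter G3 G1))), (cup D2 D3).
    spl7; [fins|fins|sets|sets|sets|sets|]. apply d_unionL; auto.
  -
    IHx IHderiv Gx (add (sTr a0 t0 t1) (inter Dx D)) G2 D2 s1 s2 s3 s4 d1.
    rewrite (L_add _ D2 D _ s4 (s3 _ (or_introl eq_refl))) in d1.
    exists G2, (add (sTr (aunion a0 a1) t0 t1) (inter D2 D)). spl7; [fins|fins|sets|sets|sets|sets|]. apply d_unionR0; auto.
  -
    IHx IHderiv Gx (add (sTr a1 t0 t1) (inter Dx D)) G2 D2 s1 s2 s3 s4 d1.
    rewrite (L_add _ D2 D _ s4 (s3 _ (or_introl eq_refl))) in d1.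
    exists G2, (add (sTr (aunion a0 a1) t0 t1) (inter D2 D)). spl7; [fins|fins|sets|sets|sets|sets|]. apply d_unionR1; auto.
  -
    IHx IHderiv1 (inter Gx G0) (add (sTr a0 t0 t1) (inter Dx D0)) G2 D2 s1 s2 s3 s4 d1.
    IHx IHderiv2 (add (sTr a1 t0 t1) (inter Gx G1)) (inter Dx D1) G3 D3 s5 s6 s7 s8 d2.
    rewrite (L_add _ D2 D0 _ s4 (s3 _ (or_introl eq_refl))) in d1.
    rewrite (L_add _ G3 G1 _ s6 (s5 _ (or_introl eq_refl))) in d2.
    exists (add (sTr (aimp a0 a1) t0 t1) (cup G2 (inter G3 G1))), (cup (inter D2 D0) D3).
    spl7; [fins|fins|sets|sets|sets|sets|]. apply d_aimpL; auto.
  -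
    IHx IHderiv (add (sTr a0 t0 t1) (inter Gx G)) (add (sTr a1 t0 t1) (inter Dx D)) G2 D2 s1 s2 s3 s4 d1.
    rewrite (L_add _ G2 G _ s2 (s1 _ (or_introl eq_refl))), (L_add _ D2 D _ s4 (s3 _ (or_introl eq_refl))) in d1.
    exists (inter G2 G), (add (sTr (aimp a0 a1) t0 t1) (inter D2 D)). spl7; [fins|fins|sets|sets|sets|sets|]. apply d_aimpR; auto.
  -
    IHx IHderiv (add (sEq t0 t1) (inter Gx G)) Dx G2 D2 s1 s2 s3 s4 d1.
    rewrite (L_add _ G2 G _ s2 (s1 _ (or_introl eq_refl))) in d1.
    exists (add (sTr (aone s) t0 t1) (inter G2 G)), D2. spl7; [fins|fins|sets|sets|sets|sets|]. apply d_oneL; auto.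
  -
    IHx IHderiv Gx (add (sEq t0 t1) (inter Dx D)) G2 D2 s1 s2 s3 s4 d1.
    rewrite (L_add _ D2 D _ s4 (s3 _ (or_introl eq_refl))) in d1.
    exists G2, (add (sTr (aone s) t0 t1) (inter D2 D)). spl7; [fins|fins|sets|sets|sets|sets|]. apply d_oneR; auto.
  -
    IHx IHderiv (add (sTr (EA (b1 s) a0) (E (b1 s) t0) (vx1 s)) (add (sTr (EA (b1 s) a1) (vx1 s) (E (b1 s) t1)) (up (b1 s) (inter Gx G))))
      (up (b1 s) Dx) G2 D2 s1 s2 s3 s4 d1.
    rewrite (L_2up _ _ G2 G _ _ s2 (s1 _ (or_introl eq_refl)) (s1 _ (or_intror (or_introl eq_refl)))), (L_up _ _ D2 D s4) in d1.
    exists (add (sTr (aseq a0 a1) t0 t1) (upre (b1 s) G G2)), (upre (b1 s) D D2).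
    spl7; [fins|fins|sets|sets|sets|sets|]. apply d_seqL; auto.
  -
    IHx IHderiv1 (inter Gx G) (add (sTr a0 t0 t) (inter Dx D)) G2 D2 s1 s2 s3 s4 d1.
    IHx IHderiv2 (inter Gx G') (add (sTr a1 t t1) (inter Dx D')) G3 D3 s5 s6 s7 s8 d2.
    rewrite (L_add _ D2 D _ s4 (s3 _ (or_introl eq_refl))) in d1.
    rewrite (L_add _ D3 D' _ s8 (s7 _ (or_introl eq_refl))) in d2.
    exists (cup G2 G3), (add (sTr (aseq a0 a1) t0 t1) (cup (inter D2 D) (inter D3 D'))).
    spl7; [fins|fins|sets|sets|sets|sets|]. apply d_seqR with (t := t); auto.
  -
    IHx IHderiv (add (sTr (EA (b1 s) a0) (vx1 s) (E (b1 s) t0)) (add (sTr (EA (b1 s) a1) (vx1 s) (E (b1 s) t1)) (up (b1 s) (inter Gx G))))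
      (up (b1 s) Dx) G2 D2 s1 s2 s3 s4 d1.
    rewrite (L_2up _ _ G2 G _ _ s2 (s1 _ (or_introl eq_refl)) (s1 _ (or_intror (or_introl eq_refl)))), (L_up _ _ D2 D s4) in d1.
    exists (add (sTr (arel a0 a1) t0 t1) (upre (b1 s) G G2)), (upre (b1 s) D D2).
    spl7; [fins|fins|sets|sets|sets|sets|]. apply d_relL; auto.
  -
    IHx IHderiv1 (inter Gx G) (add (sTr a0 t t0) (inter Dx D)) G2 D2 s1 s2 s3 s4 d1.
    IHx IHderiv2 (inter Gx G') (add (sTr a1 t t1) (inter Dx D')) G3 D3 s5 s6 s7 s8 d2.
    rewrite (L_add _ D2 D _ s4 (s3 _ (or_introl eq_refl))) in d1.
    rewrite (L_add _ D3 D' _ s8 (s7 _ (or_introl eq_refl))) in d2.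
    exists (cup G2 G3), (add (sTr (arel a0 a1) t0 t1) (cup (inter D2 D) (inter D3 D'))).
    spl7; [fins|fins|sets|sets|sets|sets|]. apply d_relR with (t := t); auto.
  -
    IHx IHderiv1 (inter Gx G0) (add phi (inter Dx D0)) G2 D2 s1 s2 s3 s4 d1.
    IHx IHderiv2 (add psi (inter Gx G1)) (inter Dx D1) G3 D3 s5 s6 s7 s8 d2.
    rewrite (L_add _ D2 D0 _ s4 (s3 _ (or_introl eq_refl))) in d1.
    rewrite (L_add _ G3 G1 _ s6 (s5 _ (or_introl eq_refl))) in d2.
    exists (add (sImp phi psi) (cup G2 (inter G3 G1))), (cup (inter D2 D0) D3).
    spl7; [fins|fins|sets|sets|sets|sets|]. apply d_impL; auto.
  -
    IHx IHderiv (add phi (inter Gx G)) (add psi (inter Dx D)) G2 D2 s1 s2 s3 s4 d1.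
    rewrite (L_add _ G2 G _ s2 (s1 _ (or_introl eq_refl))), (L_add _ D2 D _ s4 (s3 _ (or_introl eq_refl))) in d1.
    exists (inter G2 G), (add (sImp phi psi) (inter D2 D)). spl7; [fins|fins|sets|sets|sets|sets|]. apply d_impR; auto.
  -
    assert (HC : forall k, exists p : sset Sg * sset Sg, forall phi, nth_error Phi k = Some phi ->
      fin (fst p) /\ fin (snd p) /\ sub (inter Gx (GF k)) (fst p) /\ sub (fst p) (GF k) /\
      sub (inter Dx (DF k)) (snd p) /\ sub (snd p) (DF k) /\ deriv Sg (add phi (fst p)) (snd p)).
    { intros k. destruct (nth_error Phi k) as [phi|] eqn:Ek.
      - IHx (H0 k phi Ek) (add phi (inter Gx (GF k))) (inter Dx (DF k)) G2 D2 s1 s2 s3 s4 d1.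
        rewrite (L_add _ G2 (GF k) _ s2 (s1 _ (or_introl eq_refl))) in d1.
        exists (inter G2 (GF k), D2). intros phi' E'. injection E' as <-. simpl.
        spl7; [fins|auto|sets|sets|auto|auto|auto].
      - exists (empty, empty). intros phi E'. discriminate. }
    set (f := fun k => proj1_sig (constructive_indefinite_description _ (HC k))).
    assert (Hf : forall k phi, nth_error Phi k = Some phi ->
      fin (fst (f k)) /\ fin (snd (f k)) /\ sub (inter Gx (GF k)) (fst (f k)) /\ sub (fst (f k)) (GF k) /\
      sub (inter Dx (DF k)) (snd (f k)) /\ sub (snd (f k)) (DF k) /\ deriv Sg (add phi (fst (f k))) (snd (f k))).
    { intros k. exact (proj2_sig (constructive_indefinite_description _ (HC k))). }
    exists (add (sOr Phi) (bigcup Phi (fun k => fst (f k)))), (bigcup Phi (fun k => snd (f k))).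
    spl7.
    + apply fin_add, fin_bigcup. intros k phi Ek. apply (Hf k phi Ek).
    + apply fin_bigcup. intros k phi Ek. apply (Hf k phi Ek).
    + intros x Hx. destruct (sGx x Hx) as [E|[k [phi [Ek Hg]]]]; [left; auto|right; exists k, phi; split; auto].
      apply (Hf k phi Ek). split; auto.
    + intros x [E|[k [phi [Ek Hg]]]]; [left; auto|right; exists k, phi; split; auto]. apply (Hf k phi Ek). auto.
    + intros x Hx. destruct (sDx x Hx) as [k [phi [Ek Hg]]]. exists k, phi; split; auto. apply (Hf k phi Ek). split; auto.
    + intros x [k [phi [Ek Hg]]]. exists k, phi; split; auto. apply (Hf k phi Ek). auto.
    + apply d_orL. intros k phi Ek. apply (Hf k phi Ek).
  -
    IHx IHderiv Gx (add phi (inter Dx D)) G2 D2 s1 s2 s3 s4 d1.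
    rewrite (L_add _ D2 D _ s4 (s3 _ (or_introl eq_refl))) in d1.
    exists G2, (add (sOr Phi) (inter D2 D)). spl7; [fins|fins|sets|sets|sets|sets|]. apply d_orR with phi; auto.
  -
    IHx IHderiv (add phi (inter Gx G)) Dx G2 D2 s1 s2 s3 s4 d1.
    rewrite (L_add _ G2 G _ s2 (s1 _ (or_introl eq_refl))) in d1.
    exists (add (sAnd Phi) (inter G2 G)), D2. spl7; [fins|fins|sets|sets|sets|sets|]. apply d_andL with phi; auto.
  -
    assert (HC : forall k, exists p : sset Sg * sset Sg, forall phi, nth_error Phi k = Some phi ->
      fin (fst p) /\ fin (snd p) /\ sub (inter Gx (GF k)) (fst p) /\ sub (fst p) (GF k) /\
      sub (inter Dx (DF k)) (snd p) /\ sub (snd p) (DF k) /\ deriv Sg (fst p) (add phi (snd p))).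
    { intros k. destruct (nth_error Phi k) as [phi|] eqn:Ek.
      - IHx (H0 k phi Ek) (inter Gx (GF k)) (add phi (inter Dx (DF k))) G2 D2 s1 s2 s3 s4 d1.
        rewrite (L_add _ D2 (DF k) _ s4 (s3 _ (or_introl eq_refl))) in d1.
        exists (G2, inter D2 (DF k)). intros phi' E'. injection E' as <-. simpl.
        spl7; [auto|fins|auto|auto|sets|sets|auto].
      - exists (empty, empty). intros phi E'. discriminate. }
    set (f := fun k => proj1_sig (constructive_indefinite_description _ (HC k))).
    assert (Hf : forall k phi, nth_error Phi k = Some phi ->
      fin (fst (f k)) /\ fin (snd (f k)) /\ sub (inter Gx (GF k)) (fst (f k)) /\ sub (fst (f k)) (GF k) /\
      sub (inter Dx (DF k)) (snd (f k)) /\ sub (snd (f k)) (DF k) /\ deriv Sg (fst (f k)) (add phi (snd (f k)))).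
    { intros k. exact (proj2_sig (constructive_indefinite_description _ (HC k))). }
    exists (bigcup Phi (fun k => fst (f k))), (add (sAnd Phi) (bigcup Phi (fun k => snd (f k)))).
    spl7.
    + apply fin_bigcup. intros k phi Ek. apply (Hf k phi Ek).
    + apply fin_add, fin_bigcup. intros k phi Ek. apply (Hf k phi Ek).
    + intros x Hx. destruct (sGx x Hx) as [k [phi [Ek Hg]]]. exists k, phi; split; auto. apply (Hf k phi Ek). split; auto.
    + intros x [k [phi [Ek Hg]]]. exists k, phi; split; auto. apply (Hf k phi Ek). auto.
    + intros x Hx. destruct (sDx x Hx) as [E|[k [phi [Ek Hg]]]]; [left; auto|right; exists k, phi; split; auto].
      apply (Hf k phi Ek). split; auto.
    + intros x [E|[k [phi [Ek Hg]]]]; [left; auto|right; exists k, phi; split; auto]. apply (Hf k phi Ek). auto.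
    + apply d_andR. intros k phi Ek. apply (Hf k phi Ek).
  -
    IHx IHderiv (add phi (up X (inter Gx G))) (up X Dx) G2 D2 s1 s2 s3 s4 d1.
    rewrite (L_1up _ X G2 G phi s2 (s1 _ (or_introl eq_refl))), (L_up _ X D2 D s4) in d1.
    exists (add (sEx X phi) (upre X G G2)), (upre X D D2). spl7; [fins|fins|sets|sets|sets|sets|]. apply d_exL; auto.
  -
    IHx IHderiv Gx (add (inst th phi) (inter Dx D)) G2 D2 s1 s2 s3 s4 d1.
    rewrite (L_add _ D2 D _ s4 (s3 _ (or_introl eq_refl))) in d1.
    exists G2, (add (sEx X phi) (inter D2 D)). spl7; [fins|fins|sets|sets|sets|sets|]. eapply d_exR; eauto.
  -
    IHx IHderiv (add (inst th phi) (inter Gx G)) Dx G2 D2 s1 s2 s3 s4 d1.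
    rewrite (L_add _ G2 G _ s2 (s1 _ (or_introl eq_refl))) in d1.
    exists (add (sAll X phi) (inter G2 G)), D2. spl7; [fins|fins|sets|sets|sets|sets|]. eapply d_allL; eauto.
  -
    IHx IHderiv (up X (inter Gx G)) (add phi (up X (inter Dx D))) G2 D2 s1 s2 s3 s4 d1.
    rewrite (L_up _ X G2 G s2), (L_1up _ X D2 D phi s4 (s3 _ (or_introl eq_refl))) in d1.
    exists (upre X G G2), (add (sAll X phi) (upre X D D2)). spl7; [fins|fins|sets|sets|sets|sets|]. apply d_allR; auto.
  -
    exists (add (sTr (astar a) t0 t1) Gx), (add (sTr (astar a) t0 t1) Dx). spl7; [fins|fins|sets|sets|sets|sets|]. apply d_starAx.
  -
    IHx IHderiv1 (inter Gx G0) (add (sTr (astar a) t0 t1) (inter Dx D0)) G2 D2 s1 s2 s3 s4 d1.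
    IHx IHderiv2 (add (sTr (astar a) t0 t1) (inter Gx G1)) (inter Dx D1) G3 D3 s5 s6 s7 s8 d2.
    rewrite (L_add _ D2 D0 _ s4 (s3 _ (or_introl eq_refl))) in d1.
    rewrite (L_add _ G3 G1 _ s6 (s5 _ (or_introl eq_refl))) in d2.
    exists (cup G2 (inter G3 G1)), (cup (inter D2 D0) D3).
    spl7; [fins|fins|sets|sets|sets|sets|]. eapply d_starCut; eauto.
  -
    IHx IHderiv Gx (add (sEq t0 t1) (inter Dx D)) G2 D2 s1 s2 s3 s4 d1.
    rewrite (L_add _ D2 D _ s4 (s3 _ (or_introl eq_refl))) in d1.
    exists G2, (add (sTr (astar a) t0 t1) (inter D2 D)). spl7; [fins|fins|sets|sets|sets|sets|]. apply d_starR0; auto.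
  -
    IHx IHderiv1 (inter Gx G) (add (sTr (astar a) t0 t) (inter Dx D)) G2 D2 s1 s2 s3 s4 d1.
    IHx IHderiv2 (inter Gx G') (add (sTr a t t1) (inter Dx D')) G3 D3 s5 s6 s7 s8 d2.
    rewrite (L_add _ D2 D _ s4 (s3 _ (or_introl eq_refl))) in d1.
    rewrite (L_add _ D3 D' _ s8 (s7 _ (or_introl eq_refl))) in d2.
    exists (cup G2 G3), (add (sTr (astar a) t0 t1) (cup (inter D2 D) (inter D3 D'))).
    spl7; [fins|fins|sets|sets|sets|sets|]. apply d_starR1 with (t := t); auto.
  -
    IHx IHderiv1 (inter Gx G) (add (sTr a t0 t) (inter Dx D)) G2 D2 s1 s2 s3 s4 d1.
    IHx IHderiv2 (inter Gx G') (add (sTr (astar a) t t1) (inter Dx D')) G3 D3 s5 s6 s7 s8 d2.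
    rewrite (L_add _ D2 D _ s4 (s3 _ (or_introl eq_refl))) in d1.
    rewrite (L_add _ D3 D' _ s8 (s7 _ (or_introl eq_refl))) in d2.
    exists (cup G2 G3), (add (sTr (astar a) t0 t1) (cup (inter D2 D) (inter D3 D'))).
    spl7; [fins|fins|sets|sets|sets|sets|]. apply d_starR2 with (t := t); auto.
  -
    IHx IHderiv1 (inter Gx GL) (add (sTr tt t t0) (inter Dx DL)) G2 D2 s1 s2 s3 s4 d1.
    IHx IHderiv2 (add (sTr (EA (b3 s) tt) (vz s) (vx s)) (add (sTr (EA (b3 s) a) (vx s) (vy s)) (up (b3 s) (inter Gx GM))))
      (add (sTr (EA (b3 s) tt) (vz s) (vy s)) (up (b3 s) (inter Dx DM))) G3 D3 s5 s6 s7 s8 d2.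
    IHx IHderiv3 (add (sTr tt t t1) (inter Gx GR)) (inter Dx DR) G4 D4 s9 s10 s11 s12 d3.
    rewrite (L_add _ D2 DL _ s4 (s3 _ (or_introl eq_refl))) in d1.
    rewrite (L_2up _ _ G3 GM _ _ s6 (s5 _ (or_introl eq_refl)) (s5 _ (or_intror (or_introl eq_refl)))),
      (L_1up _ _ D3 DM _ s8 (s7 _ (or_introl eq_refl))) in d2.
    rewrite (L_add _ G4 GR _ s10 (s9 _ (or_introl eq_refl))) in d3.
    exists (add (sTr (astar a) t0 t1) (cup G2 (cup (upre (b3 s) GM G3) (inter G4 GR)))),
      (cup (inter D2 DL) (cup (upre (b3 s) DM D3) D4)).
    spl7; [fins|fins|sets|sets|sets|sets|]. eapply d_starIndL; eauto.
  -
    IHx IHderiv1 (inter Gx GL) (add (sTr tt t1 t) (inter Dx DL)) G2 D2 s1 s2 s3 s4 d1.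
    IHx IHderiv2 (add (sTr (EA (b3 s) a) (vx s) (vy s)) (add (sTr (EA (b3 s) tt) (vy s) (vz s)) (up (b3 s) (inter Gx GM))))
      (add (sTr (EA (b3 s) tt) (vx s) (vz s)) (up (b3 s) (inter Dx DM))) G3 D3 s5 s6 s7 s8 d2.
    IHx IHderiv3 (add (sTr tt t0 t) (inter Gx GR)) (inter Dx DR) G4 D4 s9 s10 s11 s12 d3.
    rewrite (L_add _ D2 DL _ s4 (s3 _ (or_introl eq_refl))) in d1.
    rewrite (L_2up _ _ G3 GM _ _ s6 (s5 _ (or_introl eq_refl)) (s5 _ (or_intror (or_introl eq_refl)))),
      (L_1up _ _ D3 DM _ s8 (s7 _ (or_introl eq_refl))) in d2.
    rewrite (L_add _ G4 GR _ s10 (s9 _ (or_introl eq_refl))) in d3.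
    exists (add (sTr (astar a) t0 t1) (cup G2 (cup (upre (b3 s) GM G3) (inter G4 GR)))),
      (cup (inter D2 DL) (cup (upre (b3 s) DM D3) D4)).
    spl7; [fins|fins|sets|sets|sets|sets|]. eapply d_starIndR; eauto.
Qed.

Definition sortsK {Sg} (K : list (sym Sg)) : list (srt Sg) :=
  flat_map (fun y => match y with ySort s => [s] | @yFun _ w s f => s :: w | @yLab _ s l => [s] end) K.

Definition subsig {Sg} (K : list (sym Sg)) : sig :=
  {| srt := {s : srt Sg | In s (sortsK K)};
     fsym := fun w s => {f : fsym Sg (map (@proj1_sig _ _) w) (proj1_sig s) | In (yFun f) K};
     lab := fun s => {l : lab Sg (proj1_sig s) | In (yLab l) K} |}.

Definition subi {Sg} (K : list (sym Sg)) : sigmor (subsig K) Sg :=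
  SigMor (subsig K) Sg (@proj1_sig _ _) (fun w s f => proj1_sig f) (fun s l => proj1_sig l).

Lemma sig_eq : forall A (P : A -> Prop) (x y : {a | P a}), proj1_sig x = proj1_sig y -> x = y.
Proof. intros A P [a p] [b q] H. simpl in H. subst. f_equal. apply proof_irrelevance. Qed.

Lemma subi_inj : forall Sg (K : list (sym Sg)), injective_sigmor (subi K).
Proof.
  intros. split; [|split].
  - intros s s' H. apply sig_eq. auto.
  - intros w s f f' H. apply sig_eq. auto.
  - intros s l l' H. apply sig_eq. auto.
Qed.

Lemma lift_list : forall A (P : A -> Prop) (w : list A), (forall x, In x w -> P x) ->
  exists w' : list {a | P a}, map (@proj1_sig _ _) w' = w.
Proof.
  intros A P w. induction w as [|a w IH]; intros H; [exists []; reflexivity|].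
  destruct IH as [w' E]; [intros; apply H; right; auto|].
  exists (exist _ a (H a (or_introl eq_refl)) :: w'). simpl. congruence.
Qed.

Lemma sortsK_in : forall Sg (K : list (sym Sg)) y, In y K ->
  match y with ySort s => In s (sortsK K) | @yFun _ w s f => forall x, In x (s :: w) -> In x (sortsK K)
  | @yLab _ s l => In s (sortsK K) end.
Proof.
  intros. unfold sortsK. destruct y as [s|w s f|s l].
  - apply in_flat_map. exists (ySort s). simpl. auto.
  - intros x Hx. apply in_flat_map. exists (yFun f). auto.
  - apply in_flat_map. exists (yLab l). simpl. auto.
Qed.

Lemma subi_cov : forall Sg (K : list (sym Sg)), Cov (subi K) K.
Proof.
  intros Sg K y Hy. pose proof (sortsK_in _ K y Hy) as HS. destruct y as [s|w s f|s l]; simpl in HS |- *.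
  - exists (exist _ s HS). reflexivity.
  - destruct (lift_list _ _ w (fun x Hx => HS x (or_intror Hx))) as [w' E]. subst w.
    exists w', (exist _ s (HS s (or_introl eq_refl))), (exist _ f Hy). reflexivity.
  - exists (exist _ s HS), (exist _ l Hy). reflexivity.
Qed.

Fixpoint attach {A} (L : list A) : list {x | In x L} :=
  match L return list {x | In x L} with
  | [] => []
  | a :: L' => exist (fun x => In x (a :: L')) a (or_introl eq_refl) ::
      map (fun p => exist (fun x => In x (a :: L')) (proj1_sig p) (or_intror (proj2_sig p))) (attach L')
  end.
Lemma attach_in : forall A (L : list A) x (p : In x L), In (exist _ x p) (attach L).
Proof.
  intros A L. induction L as [|a L IH]; intros x p; [destruct p|].
  simpl. destruct p as [E|p].
  - subst. left. reflexivity.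
  - right. apply in_map_iff. exists (exist _ x p). split; auto.
Qed.

Definition symF {Sg} (y : sym Sg) : option {w & {s & fsym Sg w s}} :=
  match y with @yFun _ w s f => Some (existT _ w (existT _ s f)) | _ => None end.
Definition symL {Sg} (y : sym Sg) : option {s & lab Sg s} :=
  match y with @yLab _ s l => Some (existT _ s l) | _ => None end.

Lemma subsig_fin : forall Sg (K : list (sym Sg)), finite_sig (subsig K).
Proof.
  intros Sg K. split; [|split].
  - exists (attach (sortsK K)). intros s. destruct s as [s p]. apply attach_in.
  - assert (HL : forall K', (forall y, In y K' -> In y K) -> exists l : list {w & {s & fsym (subsig K) w s}},
      forall w s (f : fsym (subsig K) w s), In (yFun (proj1_sig f)) K' -> In (existT _ w (existT _ s f)) l).
    { intros K'. induction K' as [|y K' IH]; intros Hsub.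
      - exists []. intros w s f [].
      - destruct IH as [l Hl]; [intros; apply Hsub; right; auto|].
        assert (Hy : In y K) by (apply Hsub; left; auto).
        destruct y as [s0|w0 s0 f0|s0 l0].
        + exists l. intros w s f [E|E]; [discriminate|auto].
        + pose proof (sortsK_in _ K _ Hy) as HS. simpl in HS.
          destruct (lift_list _ _ w0 (fun x Hx => HS x (or_intror Hx))) as [w' Ew]. subst w0.
          exists (existT _ w' (existT (fun s => fsym (subsig K) w' s) (exist _ s0 (HS s0 (or_introl eq_refl))) (exist _ f0 Hy)) :: l).
          intros w s f [E|E]; [|right; auto]. left.
          apply (f_equal symF) in E. simpl in E. apply Some_inj' in E.
          pose proof (f_equal (@projT1 _ _) E) as e. simpl in e.
          apply map_inj in e; [|intros a b; apply sig_eq]. subst w'.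
          apply inj_pair2 in E. pose proof (f_equal (@projT1 _ _) E) as e. simpl in e.
          assert (Es : exist _ s0 (HS s0 (or_introl eq_refl)) = s) by (apply sig_eq; simpl; auto). subst s.
          simpl in E. apply inj_pair2 in E. destruct f as [f1 H1]. simpl in E. subst f1.
          f_equal. f_equal. f_equal. apply proof_irrelevance.
        + exists l. intros w s f [E|E]; [discriminate|auto]. }
    destruct (HL K (fun y H => H)) as [l Hl]. exists l. intros w s f. apply Hl. destruct f. simpl. auto.
  - assert (HL : forall K', (forall y, In y K' -> In y K) -> exists l : list {s & lab (subsig K) s},
      forall s (x : lab (subsig K) s), In (yLab (proj1_sig x)) K' -> In (existT _ s x) l).
    { intros K'. induction K' as [|y K' IH]; intros Hsub.
      - exists []. intros s x [].
      - destruct IH as [l Hl]; [intros; apply Hsub; right; auto|].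
        assert (Hy : In y K) by (apply Hsub; left; auto).
        destruct y as [s0|w0 s0 f0|s0 l0].
        + exists l. intros s x [E|E]; [discriminate|auto].
        + exists l. intros s x [E|E]; [discriminate|auto].
        + pose proof (sortsK_in _ K _ Hy) as HS. simpl in HS.
          exists (existT (lab (subsig K)) (exist _ s0 HS) (exist _ l0 Hy) :: l).
          intros s x [E|E]; [|right; auto]. left.
          apply (f_equal symL) in E. simpl in E. apply Some_inj' in E.
          pose proof (f_equal (@projT1 _ _) E) as e. simpl in e.
          assert (Es : exist _ s0 HS = s) by (apply sig_eq; simpl; auto). subst s.
          simpl in E. apply inj_pair2 in E. destruct x as [x1 H1]. simpl in E. subst x1.
          f_equal. f_equal. apply proof_irrelevance. }
    destruct (HL K (fun y H => H)) as [l Hl]. exists l. intros s x. apply Hl. destruct x. simpl. auto.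
Qed.

Lemma list_trs_pre : forall Sg Sf (i : sigmor Sf Sg), injective_sigmor i -> forall L : list (sentence Sg),
  Cov i (flat_map syms L) -> exists L', map (fun p => trs p Sg (mor_of i)) L' = L.
Proof.
  intros Sg Sf i Hi L. induction L as [|a L IH]; intros HC; [exists []; reflexivity|].
  simpl in HC. apply Cov_app in HC as [H1 H2]. destruct (trs_pre _ a _ i Hi H1) as [a' Ea].
  destruct (IH H2) as [L' EL]. exists (a' :: L'). simpl. congruence.
Qed.

Theorem compactness : forall (Sg : sig) (G D : sset Sg), deriv Sg G D ->
     exists (Sf : sig) (i : sigmor Sf Sg) (Gf Df : list (sentence Sf)),
       finite_sig Sf /\ injective_sigmor i /\
       (forall phi, In phi Gf -> G (trs phi Sg (mor_of i))) /\
       (forall phi, In phi Df -> D (trs phi Sg (mor_of i))) /\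
       deriv Sf (fun phi => In phi Gf) (fun phi => In phi Df).
Proof.
  intros Sg G D H.
  destruct (deriv_A _ _ _ H empty empty (fin_empty _) (fin_empty _) (fun _ x => match x with end) (fun _ x => match x with end))
    as [G' [D' [[Lg HLg] [[Ld HLd] [_ [sG [_ [sD d]]]]]]]].
  destruct (deriv_B _ _ _ d) as [K HK].
  set (K' := K ++ flat_map syms Lg ++ flat_map syms Ld).
  set (i := subi K').
  assert (Hi : injective_sigmor i) by apply subi_inj.
  assert (HC : Cov i K') by apply subi_cov.
  assert (HC1 : Cov i K) by (intros y Hy; apply HC; unfold K'; apply in_or_app; auto).
  assert (HC2 : Cov i (flat_map syms Lg)) by (intros y Hy; apply HC; unfold K'; apply in_or_app; right; apply in_or_app; auto).
  assert (HC3 : Cov i (flat_map syms Ld)) by (intros y Hy; apply HC; unfold K'; apply in_or_app; right; apply in_or_app; auto).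
  specialize (HK _ i Hi HC1). clearbody i. clearbody K'.
  destruct (list_trs_pre _ _ i Hi Lg HC2) as [Gf EG]. destruct (list_trs_pre _ _ i Hi Ld HC3) as [Df ED].
  exists (subsig K'), i, Gf, Df. split; [apply subsig_fin|]. split; [auto|]. split; [|split].
  - intros phi Hp. apply sG. apply HLg. rewrite <- EG. apply (in_map (fun p => trs p Sg (mor_of i))). auto.
  - intros phi Hp. apply sD. apply HLd. rewrite <- ED. apply (in_map (fun p => trs p Sg (mor_of i))). auto.
  - assert (E1 : pre i G' = fun phi => In phi Gf).
    { apply sset_ext. intros phi. unfold pre. rewrite HLg, <- EG, in_map_iff. split.
      - intros [x [Ex Hx]]. apply (trs_inj _ x _ i Hi) in Ex. subst. auto.
      - intros Hp. exists phi. auto. }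
    assert (E2 : pre i D' = fun phi => In phi Df).
    { apply sset_ext. intros phi. unfold pre. rewrite HLd, <- ED, in_map_iff. split.
      - intros [x [Ex Hx]]. apply (trs_inj _ x _ i Hi) in Ex. subst. auto.
      - intros Hp. exists phi. auto. }
    rewrite <- E1, <- E2. exact HK.
Qed.

Definition Sg0 : sig := {| srt := unit;
  fsym := fun w s => match w with [] => bool | _ :: _ => Empty_set end;
  lab := fun _ => unit |}.

Definition cst (b : bool) : term Sg0 tt := @app Sg0 [] tt b tnil.
Definition lam : action Sg0 tt := @alab Sg0 tt tt.
Fixpoint apow (n : nat) : action Sg0 tt :=
  match n with 0 => @aone Sg0 tt | S n => aseq lam (apow n) end.
Definition Sstar : sentence Sg0 := sTr (astar lam) (cst true) (cst false).
Definition Sneg (n : nat) : sentence Sg0 := sImp (sTr (apow n) (cst true) (cst false)) (sOr []).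
Definition G0 : sset Sg0 := fun phi => phi = Sstar \/ exists n, phi = Sneg n.
Definition D0 : sset Sg0 := fun _ => False.

Lemma apow_add : forall (M : model Sg0) n m x y z, aden M (apow n) x y -> aden M (apow m) y z -> aden M (apow (n + m)) x z.
Proof.
  intros M n. induction n as [|n IH]; intros m x y z H1 H2; simpl in *.
  - subst. auto.
  - destruct H1 as [u [H1 H3]]. exists u. split; auto. eapply IH; eauto.
Qed.

Lemma rt_apow : forall (M : model Sg0) x y, clos_refl_trans _ (aden M lam) x y -> exists n, aden M (apow n) x y.
Proof.
  intros M x y H. induction H.
  - exists 1. simpl. exists y. auto.
  - exists 0. simpl. auto.
  - destruct IHclos_refl_trans1 as [n1 H1]. destruct IHclos_refl_trans2 as [n2 H2]. exists (n1 + n2). eapply apow_add; eauto.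
Qed.

Lemma valid0 : valid Sg0 G0 D0.
Proof.
  intros M HM. exfalso. assert (Hs := HM Sstar (or_introl eq_refl)). simpl in Hs.
  destruct (rt_apow _ _ _ Hs) as [n Hn]. apply (HM (Sneg n) (or_intror (ex_intro _ n eq_refl))). exact Hn.
Qed.

Definition MN (N : nat) : model Sg0 :=
  Model Sg0 (fun _ => nat)
    (fun w s => match w return fsym Sg0 w s -> tuple (fun _ => nat) w -> nat with
                | [] => fun b _ => if b then 0 else N
                | _ :: _ => fun e => match e with end end)
    (fun s l x y => y = S x).

Lemma aden_apow : forall N n x y, aden (MN N) (apow n) x y <-> y = n + x.
Proof.
  intros N n. induction n as [|n IH]; intros x y; simpl.
  - split; intros; subst; auto.
  - split.
    + intros [u [H1 H2]]. apply IH in H2. subst. lia.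
    + intros E. exists (S x). split; auto. apply IH. lia.
Qed.

Lemma sat_MN : forall N phi, G0 phi -> (phi = Sstar \/ exists n, n < N /\ phi = Sneg n) -> sat phi (MN N).
Proof.
  intros N phi _ [E|[n [Hn E]]]; subst; simpl.
  - assert (Hr : forall k, clos_refl_trans _ (fun x y : nat => y = S x) 0 k).
    { induction k; [apply rt_refl|]. eapply rt_trans; [exact IHk|]. apply rt_step. reflexivity. }
    apply Hr.
  - intros H. apply (aden_apow N n) in H. simpl in H. lia.
Qed.

Lemma bound : forall Sf (i : sigmor Sf Sg0) (Gf : list (sentence Sf)),
  (forall phi, In phi Gf -> G0 (trs phi Sg0 (mor_of i))) ->
  exists N, forall phi, In phi Gf -> trs phi Sg0 (mor_of i) = Sstar \/ exists n, n < N /\ trs phi Sg0 (mor_of i) = Sneg n.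
Proof.
  intros Sf i Gf. induction Gf as [|a Gf IH]; intros H.
  - exists 0. intros phi [].
  - destruct IH as [N HN]; [intros; apply H; right; auto|].
    destruct (H a (or_introl eq_refl)) as [E|[n E]].
    + exists N. intros phi [Ep|Hp]; [subst; auto|auto].
    + exists (S (N + n)). intros phi [Ep|Hp].
      * subst. right. exists n. split; [lia|auto].
      * destruct (HN phi Hp) as [E'|[m [Hm E']]]; [auto|right; exists m; split; [lia|auto]].
Qed.

Lemma not_deriv0 : ~ deriv Sg0 G0 D0.
Proof.
  intros Hd. destruct (compactness _ _ _ Hd) as [Sf [i [Gf [Df [_ [_ [HG [HD Hder]]]]]]]].
  destruct (bound _ i Gf HG) as [N HN].
  destruct (soundness _ _ _ Hder (red (mor_of i) (MN N))) as [psi [Hpsi _]].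
  - intros phi Hp. apply sat_trs. apply sat_MN; auto.
  - exact (HD psi Hpsi).
Qed.

Theorem lemma22 :
  (* soundness *)
  (forall (Sg : sig) (G D : sset Sg), deriv Sg G D -> valid Sg G D) /\
  (* incompleteness *)
  (exists (Sg : sig) (G D : sset Sg), valid Sg G D /\ ~ deriv Sg G D) /\
  (* compactness *)
  (forall (Sg : sig) (G D : sset Sg), deriv Sg G D ->
     exists (Sf : sig) (i : sigmor Sf Sg) (Gf Df : list (sentence Sf)),
       finite_sig Sf /\ injective_sigmor i /\
       (forall phi, In phi Gf -> G (trs phi Sg (mor_of i))) /\
       (forall phi, In phi Df -> D (trs phi Sg (mor_of i))) /\
       deriv Sf (fun phi => In phi Gf) (fun phi => In phi Df)).
Proof.
  split; [exact soundness|]. split; [|exact compactness].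
  exists Sg0, G0, D0. split; [exact valid0|exact not_deriv0].
Qed.
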